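(* Let $G$ be a finite simple robust graph, and let $uv \in E(G)$ with $d(u) \in \{7,8\}$ and $d(v) = 5$. If neither $\{u\}$ nor $\{v\}$ is reducible in $G$ and $u$ subsumes $v$, then $\{u,v\}$ is reducible in $G$.
   Context: $N[x] = N(x)\cup\{x\}$. For distinct vertices $u,v$, $u$ subsumes $v$ if $N[u] \supseteq N[v]$. $G$ is robust if for every $x\in V(G)$, every component of $G[N(x)]$ has at least $5$ vertices. For a set $\mathcal{S}$ of triangles, an $\mathcal{S}$-edge is an edge of a triangle in $\mathcal{S}$. A nonempty set $V_0 \subseteq V(G)$ is reducible if there exist a set $\mathcal{S}$ of pairwise edge-disjoint triangles of $G$ and a set $X \subseteq E(G)$ such that (i) $|X| \leq 2|\mathcal{S}|$; (ii) $G - X$ has no triangle containing a vertex of $V_0$; (iii) $X$ contains every $\mathcal{S}$-edge whose endpoints both lie outside $V_0$. *)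

(* Defs.v *)
From mathcomp Require Import all_boot.
Set Implicit Arguments. Unset Strict Implicit. Unset Printing Implicit Defensive.

Section Graph.
Variable T : finType.
Variable e : rel T.

Definition simple_graph := symmetric e /\ irreflexive e.

Definition nbhd (x : T) : {set T} := [set y | e x y].
Definition cnbhd (x : T) : {set T} := x |: nbhd x.
Definition deg (x : T) : nat := #|nbhd x|.

Definition subsumes (u v : T) : Prop := u != v /\ cnbhd v \subset cnbhd u.

Definition induced_rel (A : {set T}) : rel T :=
  fun a b => [&& e a b, a \in A & b \in A].

Definition component (A : {set T}) (y : T) : {set T} :=
  [set z in A | connect (induced_rel A) y z].

Definition robust : Prop :=
  forall x y, y \in nbhd x -> 5 <= #|component (nbhd x) y|.

Definition is_edge (f : {set T}) : bool :=
  [exists a, exists b, [&& e a b & f == [set a; b]]].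

Definition is_triangle (t : {set T}) : bool :=
  (#|t| == 3) && [forall a in t, forall b in t, (a != b) ==> e a b].

Definition edge_of (f t : {set T}) : bool := (f \subset t) && (#|f| == 2).

Definition edge_disjoint_triangles (S : {set {set T}}) : Prop :=
  (forall t, t \in S -> is_triangle t) /\
  (forall t1 t2, t1 \in S -> t2 \in S -> t1 != t2 -> #|t1 :&: t2| <= 1).

Definition reducible (V0 : {set T}) : Prop :=
  V0 != set0 /\
  exists (S : {set {set T}}) (X : {set {set T}}),
    edge_disjoint_triangles S /\
    (forall f, f \in X -> is_edge f) /\
    #|X| <= 2 * #|S| /\
    (* (ii) G - X has no triangle containing a vertex of V0 *)
    (forall t, is_triangle t -> t :&: V0 != set0 ->
       exists f, edge_of f t /\ f \in X) /\
    (forall t f, t \in S -> edge_of f t -> f :&: V0 = set0 -> f \in X).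

End Graph.

(* Main.v *)
Require Import Defs.
From mathcomp Require Import all_boot.
From mathcomp Require Import zify.
Set Implicit Arguments. Unset Strict Implicit. Unset Printing Implicit Defensive.


Definition tverts (t : nat*nat*nat) : seq nat := [:: t.1.1; t.1.2; t.2].

Section Check.
Variable n : nat.
Variable ladj : nat -> nat -> bool.
Definition tri_ok (t : nat*nat*nat) :=
  [&& t.1.1 < n, t.1.2 < n, t.2 < n, ladj t.1.1 t.1.2, ladj t.1.1 t.2 & ladj t.1.2 t.2].
Definition ed_ok (p : nat*nat) := [&& p.1 < n, p.2 < n & ladj p.1 p.2].
Definition trilist (V0 : seq nat) : seq (nat*nat*nat) :=
  flatten [seq (if ladj w j then [seq (w,j,k) | k <- iota j.+1 (n - j.+1) & ladj w k && ladj j k] else [::])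
          | w <- V0, j <- iota 0 n].
End Check.

Definition inX (X : seq (nat*nat)) x y :=
  has (fun p : nat*nat => ((p.1 == x) && (p.2 == y)) || ((p.1 == y) && (p.2 == x))) X.

Definition tmpl_ok (V0 : seq nat) (S : seq (nat*nat*nat)) (X : seq (nat*nat)) :=
  [&& uniq S,
   all (fun t1 => all (fun t2 => (t1 == t2) || all (fun x => all (fun y => (x == y) ||
        ~~ ((x \in tverts t2) && (y \in tverts t2))) (tverts t1)) (tverts t1)) S) S &
   all (fun t => all (fun x => all (fun y => [|| x == y, x \in V0, y \in V0 | inX X x y])
        (tverts t)) (tverts t)) S].

Definition check2 n ladj (tl : seq (nat*nat*nat)) (S : seq (nat*nat*nat)) (X : seq (nat*nat))
   (hX : nat -> nat -> bool) :=
  (size (filter (ed_ok n ladj) X) <= 2 * size (filter (tri_ok n ladj) S)) &&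
  all (fun t => [|| hX t.1.1 t.1.2, hX t.1.1 t.2 | hX t.1.2 t.2]) tl.

Lemma inX_sym X x y : inX X x y = inX X y x.
Proof. by apply: eq_has => p; rewrite orbC. Qed.

Section Lift.
Variables (T : finType) (e : rel T) (n : nat) (g : nat -> T) (ladj : nat -> nat -> bool) (V0 : seq nat).
Hypothesis sg : simple_graph e.
Hypothesis Hadj : forall i j, i < n -> j < n -> e (g i) (g j) = ladj i j.
Hypothesis Hinj : forall i j, i < n -> j < n -> g i = g j -> i = j.
Hypothesis HV0n : all (fun w => w < n) V0.
Hypothesis HV0ne : V0 != [::].
Hypothesis Hnb : forall w y, w \in V0 -> e (g w) y -> exists2 i, i < n & y = g i.

Definition tri (t : nat*nat*nat) : {set T} := [set g t.1.1; g t.1.2; g t.2].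
Definition ed (p : nat*nat) : {set T} := [set g p.1; g p.2].

Lemma in_tri x t : (x \in tri t) = has (fun i => x == g i) (tverts t).
Proof. by rewrite /tri !inE /= orbF !orbA. Qed.

Lemma ladj_sym i j : i < n -> j < n -> ladj i j = ladj j i.
Proof. move=> hi hj; rewrite -!Hadj //; case: sg => hs _; exact: hs. Qed.

Lemma ladj_irr i : i < n -> ladj i i = false.
Proof. move=> hi; rewrite -Hadj //; case: sg => _ hi'; exact: hi'. Qed.

Lemma tri_ok_lt t i : tri_ok n ladj t -> i \in tverts t -> i < n.
Proof.
case: t => [[a b] c] /and5P [ha hb hc _ _] /=; rewrite !inE.
by move=> /orP [/eqP ->|/orP [/eqP ->|/eqP ->]].
Qed.

Lemma tri_ok_adj t i j : tri_ok n ladj t -> i \in tverts t -> j \in tverts t -> i != j -> ladj i j.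
Proof.
case: t => [[a b] c] /and5P [ha hb hc hab /andP [hac hbc]] /=; rewrite !inE.
move=> /orP [/eqP ->|/orP [/eqP ->|/eqP ->]] /orP [/eqP ->|/orP [/eqP ->|/eqP ->]];
  rewrite ?eqxx // => _; by rewrite ladj_sym.
Qed.

Lemma ed_ok_neq p : ed_ok n ladj p -> p.1 != p.2.
Proof. case/and3P=> h1 h2 h; apply/eqP=> E; move: h; by rewrite E ladj_irr. Qed.

Lemma g_neq i j : i < n -> j < n -> i != j -> g i != g j.
Proof. move=> hi hj; apply: contra => /eqP /Hinj -> //. Qed.

Lemma inX_ed X i j : i < n -> j < n -> ladj i j -> inX X i j ->
  exists2 p, p \in filter (ed_ok n ladj) X & ed p = [set g i; g j].
Proof.
move=> hi hj hij /hasP [[p1 p2] hp /= /orP [] /andP [/eqP E1 /eqP E2]].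
- exists (p1,p2); last by rewrite /ed E1 E2.
  by rewrite mem_filter hp /ed_ok /= E1 E2 hi hj hij.
- exists (p1,p2); last by rewrite /ed E1 E2 setUC.
  by rewrite mem_filter hp /ed_ok /= E1 E2 hi hj -ladj_sym ?hij.
Qed.

Lemma card2_pair (x y : T) : x != y -> #|[set x; y]| = 2.
Proof. by move=> h; rewrite cards2 h. Qed.

Lemma card3 (x y z : T) : x != y -> x != z -> y != z -> #|[set x; y; z]| = 3.
Proof.
move=> xy xz yz; have zx : z != x by rewrite eq_sym.
have zy : z != y by rewrite eq_sym.
by rewrite setUC cardsU1 cards2 !inE negb_or zx zy xy.
Qed.

Lemma memtri x t : x \in tri t -> exists2 i, i \in tverts t & x = g i.
Proof. by rewrite in_tri => /hasP [i hi /eqP ->]; exists i. Qed.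

Lemma tri_ok_neq t i j : tri_ok n ladj t -> i \in tverts t -> j \in tverts t -> i != j -> g i != g j.
Proof.
move=> ok hi hj ne; apply: g_neq => //; [exact: tri_ok_lt ok hi|exact: tri_ok_lt ok hj].
Qed.

Lemma tri_ok_dist t : tri_ok n ladj t -> [/\ t.1.1 != t.1.2, t.1.1 != t.2 & t.1.2 != t.2].
Proof.
case: t => [[a b] c] /and5P [ha hb hc hab /andP [hac hbc]] /=.
by split; apply/eqP => E; [move: hab|move: hac|move: hbc]; rewrite E ladj_irr.
Qed.

Lemma common p1 p2 x : tri_ok n ladj p1 -> tri_ok n ladj p2 -> x \in tri p1 -> x \in tri p2 ->
  exists2 i, (i \in tverts p1) && (i \in tverts p2) & x = g i.
Proof.
move=> ok1 ok2 /memtri [i hi ->] /memtri [i' hi' E].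
exists i => //; rewrite hi /=; rewrite (Hinj (tri_ok_lt ok1 hi) (tri_ok_lt ok2 hi') E) //.
Qed.

Lemma mem_trilist w j k : w \in V0 -> j < k -> k < n -> ladj w j -> ladj w k -> ladj j k ->
  (w,j,k) \in trilist n ladj V0.
Proof.
move=> hw hjk hk h1 h2 h3; apply/flattenP.
exists [seq (w,j,k0) | k0 <- iota j.+1 (n - j.+1) & ladj w k0 && ladj j k0].
  apply/allpairsP; exists (w,j); rewrite /= hw h1 mem_iota add0n; split => //.
  exact: ltn_trans hjk hk.
apply: map_f; rewrite mem_filter h2 h3 mem_iota hjk /= subnKC //.
exact: ltn_trans hjk hk.
Qed.

Theorem lift_red S X (hX : nat -> nat -> bool) : (forall i j, hX i j -> inX X i j) ->
  tmpl_ok V0 S X -> check2 n ladj (trilist n ladj V0) S X hX ->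
  reducible e [set x in map g V0].
Proof.
move=> hXX; case/and3P=> huniq hdisj hiii /andP [hsize hii].
set S' := filter (tri_ok n ladj) S.
set X' := filter (ed_ok n ladj) X.
have hS' t : t \in S' -> t \in S /\ tri_ok n ladj t by rewrite mem_filter => /andP [].
have hX' p : p \in X' -> ed_ok n ladj p by rewrite mem_filter => /andP [].
have hV0 w : w \in V0 -> w < n by move=> hw; move/allP: HV0n; apply.
have gV0 w : w \in V0 -> g w \in [set x in map g V0] by move=> hw; rewrite inE map_f.
have disj p1 p2 i j : p1 \in S -> p2 \in S -> p1 != p2 -> i \in tverts p1 -> j \in tverts p1 ->
    i != j -> i \in tverts p2 -> j \in tverts p2 -> False.
  move=> h1 h2 ne hi hj nij hi2 hj2.
  have hd := hdisj; move/allP: hd => /(_ p1 h1) /allP /(_ p2 h2).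
  rewrite (negbTE ne) orFb => /allP /(_ i hi) /allP /(_ j hj).
  by rewrite (negbTE nij) hi2 hj2.
have trinj : {in S' &, injective tri}.
  move=> t1 t2 /hS' [h1 ok1] /hS' [h2 ok2] E; apply/eqP; apply/negPn/negP => ne.
  have ha : t1.1.1 \in tverts t1 by rewrite !inE eqxx.
  have hb : t1.1.2 \in tverts t1 by rewrite !inE eqxx orbT.
  have hab : t1.1.1 != t1.1.2.
    apply/eqP=> Eab; have hab' : ladj t1.1.1 t1.1.2 by case/and5P: ok1.
    by move: hab'; rewrite Eab ladj_irr //; exact: tri_ok_lt ok1 hb.
  have mem k : k \in tverts t1 -> k \in tverts t2.
    move=> hk.
    have hk2 : g k \in tri t2 by rewrite -E in_tri; apply/hasP; exists k.
    case/memtri: hk2 => k' hk' /Hinj Ekk'.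
    by rewrite Ekk' //; [exact: tri_ok_lt ok1 hk | exact: tri_ok_lt ok2 hk'].
  exact: disj h1 h2 ne ha hb hab (mem _ ha) (mem _ hb).
split.
  case: V0 HV0ne gV0 => // w s _ gV0; apply/set0Pn; exists (g w); apply: gV0; exact: mem_head.
exists [set x in map tri S'], [set x in map ed X'].
split; [split|split; [|split; [|split]]].
- move=> t; rewrite inE => /mapP [t0 /hS' [_ ok] ->].
  have ha : t0.1.1 \in tverts t0 by rewrite !inE eqxx.
  have hb : t0.1.2 \in tverts t0 by rewrite !inE eqxx orbT.
  have hc : t0.2 \in tverts t0 by rewrite !inE eqxx !orbT.
  case: (tri_ok_dist ok) => d1 d2 d3.
  apply/andP; split.
    by rewrite (card3 (tri_ok_neq ok ha hb d1) (tri_ok_neq ok ha hc d2) (tri_ok_neq ok hb hc d3)).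
  apply/forallP => x; apply/implyP => /memtri [i hi ->].
  apply/forallP => y; apply/implyP => /memtri [j hj ->].
  apply/implyP => nij; rewrite Hadj ?(tri_ok_lt ok hi) ?(tri_ok_lt ok hj) //.
  apply: tri_ok_adj ok hi hj _; apply: contra nij => /eqP -> //.
- move=> t1 t2; rewrite !inE => /mapP [p1 hp1 ->] /mapP [p2 hp2 ->] ne.
  case: (hS' _ hp1) (hS' _ hp2) => h1 ok1 [h2 ok2].
  rewrite leqNgt; apply/negP => /card_gt1P [x [y [hx hy nxy]]].
  move: hx hy; rewrite !in_setI => /andP [hx1 hx2] /andP [hy1 hy2].
  case: (common ok1 ok2 hx1 hx2) => i /andP [hi1 hi2] Ex.
  case: (common ok1 ok2 hy1 hy2) => j /andP [hj1 hj2] Ey.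
  apply: (disj p1 p2 i j) => //.
    by apply: contra ne => /eqP ->.
  by apply: contra nxy => /eqP Eij; rewrite Ex Ey Eij.
- move=> f; rewrite inE => /mapP [p /hX' /and3P [h1 h2 h] ->].
  apply/existsP; exists (g p.1); apply/existsP; exists (g p.2).
  by rewrite Hadj // h eqxx.
- rewrite !cardsE.
  apply: (leq_trans (card_size _)); rewrite size_map.
  apply: (leq_trans hsize); rewrite leq_mul2l; apply/orP; right.
  rewrite (card_uniqP _) ?size_map //.
  by rewrite (map_inj_in_uniq trinj) filter_uniq.
- move=> t /andP [/eqP c3 /forallP hall] /set0Pn [x0]; rewrite in_setI => /andP [hx0t].
  rewrite inE => /mapP [w hw Ex0]; subst x0.
  have hadjt a b : a \in t -> b \in t -> a != b -> e a b.
    by move=> ha hb nab; move/(_ a): hall; rewrite ha /= => /forallP /(_ b); rewrite hb nab.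
  have : #|t :\ g w| == 2 by move: c3; rewrite (cardsD1 (g w)) hx0t add1n => -[->].
  case/cards2P => y [z [nyz Eyz]].
  have hy : y \in t :\ g w by rewrite Eyz !inE eqxx.
  have hz : z \in t :\ g w by rewrite Eyz !inE eqxx orbT.
  move: hy hz; rewrite !in_setD1 => /andP [nyw hyt] /andP [nzw hzt].
  have ewy : e (g w) y by apply: hadjt; rewrite // eq_sym.
  have ewz : e (g w) z by apply: hadjt; rewrite // eq_sym.
  have eyz : e y z by apply: hadjt.
  case: (Hnb hw ewy) => j hj Ey; case: (Hnb hw ewz) => k hk Ez; subst y z.
  have hwn := hV0 _ hw.
  move: ewy ewz eyz; rewrite !Hadj // => l1 l2 l3.
  have hXX' a b : hX a b -> inX X a b by apply: hXX.
  have sub2 a b : a \in t -> b \in t -> [set a; b] \subset t.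
    by move=> ha hb; apply/subsetP => x; rewrite !inE => /orP [] /eqP ->.
  have fin a b (ha : a < n) (hb : b < n) : a != b -> ladj a b -> inX X a b -> g a \in t -> g b \in t ->
      exists f, edge_of f t /\ f \in [set x in map ed X'].
    move=> nab lab hab hat hbt; case: (inX_ed ha hb lab hab) => p hp Ep.
    exists (ed p); split; last by rewrite inE map_f.
    by rewrite /edge_of Ep sub2 // cards2 g_neq.
  have nwj : w != j by apply: contra nyw => /eqP ->.
  have nwk : w != k by apply: contra nzw => /eqP ->.
  have njk : j != k by apply: contra nyz => /eqP ->.
  case: (ltngtP j k) => hjk; last by move/eqP: njk.
  - have := allP hii _ (mem_trilist hw hjk hk l1 l2 l3); rewrite /=.
    move=> /orP [/hXX' h|/orP [/hXX' h|/hXX' h]]; [exact: (fin w j hwn hj nwj l1 h hx0t hyt)|exact: (fin w k hwn hk nwk l2 h hx0t hzt)|exact: (fin j k hj hk njk l3 h hyt hzt)].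
  - have l3' : ladj k j by rewrite ladj_sym.
    have := allP hii _ (mem_trilist hw hjk hj l2 l1 l3'); rewrite /=.
    move=> /orP [/hXX' h|/orP [/hXX' h|/hXX' h]]; [exact: (fin w k hwn hk nwk l2 h hx0t hzt)|exact: (fin w j hwn hj nwj l1 h hx0t hyt)|].
    by rewrite inX_sym in h; exact: (fin j k hj hk njk l3 h hyt hzt).
- move=> t f; rewrite inE => /mapP [p hp ->] /andP [hsub /cards2P [x [y [nxy Ef]]]] hV.
  case: (hS' _ hp) => hpS ok.
  have hx : x \in tri p by move/subsetP: hsub; apply; rewrite Ef !inE eqxx.
  have hy : y \in tri p by move/subsetP: hsub; apply; rewrite Ef !inE eqxx orbT.
  case/memtri: hx => i hi Ex; case/memtri: hy => j hj Ey; subst x y.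
  have nij : i != j by apply: contra nxy => /eqP ->.
  have niV : i \notin V0.
    apply/negP => hiV; move/setP: hV => /(_ (g i)); rewrite !inE Ef !inE eqxx /=.
    by rewrite map_f.
  have njV : j \notin V0.
    apply/negP => hjV; move/setP: hV => /(_ (g j)); rewrite !inE Ef !inE eqxx orbT /=.
    by rewrite map_f.
  move/allP: hiii => /(_ p hpS) /allP /(_ i hi) /allP /(_ j hj).
  rewrite (negbTE nij) (negbTE niV) (negbTE njV) /= => hXi.
  have hin := tri_ok_lt ok hi; have hjn := tri_ok_lt ok hj.
  case: (inX_ed hin hjn (tri_ok_adj ok hi hj nij) hXi) => p' hp' Ep'.
  by rewrite Ef -Ep' inE map_f.
Qed.
End Lift.

Definition aidx x y := if x == 2 then y - 3 else if x == 3 then y - 1 else 5.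
Definition bidx x y := if x == 6 then y - 7 else 2.

Definition cadj (ab : seq bool) (na : seq (seq bool)) (bb : seq bool) (i j : nat) : bool :=
  let x := minn i j in let y := maxn i j in
  if x == y then false
  else if x == 0 then true
  else if x == 1 then y <= 5
  else if y <= 5 then nth false ab (aidx x y)
  else if x <= 5 then nth false (nth [::] na (y-6)) (x-2)
  else nth false bb (bidx x y).

Definition adjmat n ab na bb := mkseq (fun i => mkseq (fun j => cadj ab na bb i j) n) n.
Definition madj (m : seq (seq bool)) i j := nth false (nth [::] m i) j.

Fixpoint allbools k : seq (seq bool) :=
  if k is k'.+1 then [seq b :: s | b <- [:: false; true], s <- allbools k'] else [:: [::]].
Fixpoint tuplesof (A : Type) (k : nat) (s : seq A) : seq (seq A) :=
  if k is k'.+1 then [seq b :: r | b <- s, r <- tuplesof k' s] else [:: [::]].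
Fixpoint key (s : seq bool) : nat := if s is b :: s' then b + 2 * key s' else 0.
Definition nalist nb := filter (sorted (fun x y => key y <= key x)) (tuplesof nb (allbools 4)).
Definition bblist nb := allbools (if nb == 2 then 1 else 3).
Fixpoint allz (A B : Type) (f : A -> B -> bool) (s : seq A) (t : seq B) : bool :=
  match s, t with
  | a :: s', b :: t' => f a b && allz f s' t'
  | [::], _ => true
  | _, [::] => false
  end.

Definition Tm := (seq (nat*nat*nat) * seq (nat*nat))%type.
Definition tm0 : Tm := ([::], [::]).

Definition xmat (X : seq (nat*nat)) := mkseq (fun i => mkseq (fun j => inX X i j) 9) 9.
Definition ext (tm : Tm) := (tm, xmat tm.2).
Definition vok (vt : seq Tm) ab :=
  let m := adjmat 6 ab [::] [::] in
  let tl := trilist 6 (madj m) [:: 1] in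
  has (fun tm => check2 6 (madj m) tl tm.1 tm.2 (madj (xmat tm.2))) vt.

Definition arow (ab : seq bool) (a : nat) : seq bool :=
  match ab with
  | [:: x23; x24; x25; x34; x35; x45] =>
    match a with
    | 0 => [:: false; x23; x24; x25]
    | 1 => [:: x23; false; x34; x35]
    | 2 => [:: x24; x34; false; x45]
    | _ => [:: x25; x35; x45; false]
    end
  | _ => [::]
  end.
Definition brow (bb : seq bool) (k : nat) : seq bool :=
  match bb with
  | [:: b67] => if k is 0 then [:: false; b67] else [:: b67; false]
  | [:: b67; b68; b78] =>
    match k with
    | 0 => [:: false; b67; b68]
    | 1 => [:: b67; false; b78]
    | _ => [:: b68; b78; false]
    end
  | _ => [::]
  end.
Definition adjmat2 nb ab (na : seq (seq bool)) bb :=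
  let col a := [seq nth false r a | r <- na] in
  [:: false :: nseq (5 + nb) true,
      true :: false :: nseq 4 true ++ nseq nb false,
      true :: true :: arow ab 0 ++ col 0,
      true :: true :: arow ab 1 ++ col 1,
      true :: true :: arow ab 2 ++ col 2,
      true :: true :: arow ab 3 ++ col 3 &
      [seq true :: false :: nth [::] na k ++ brow bb k | k <- iota 0 nb]].

Definition uvok1 (ut : seq (Tm * seq (seq bool))) nb ab na bb i :=
  let n := 6 + nb in
  let m := adjmat2 nb ab na bb in
  let tl := trilist n (madj m) [:: 0; 1] in
  let tm := nth (ext tm0) ut i in
  check2 n (madj m) tl tm.1.1 tm.1.2 (madj tm.2).

Definition K4 := [:: true; true; true; true; true; true].
Definition K4e := [:: true; true; true; true; true; false].
Definition pidx x y := if x == 0 then y - 1 else if x == 1 then y + 1 else 5.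
Definition lk (ab : seq bool) x y := nth false ab (pidx (minn x y) (maxn x y)).
Definition permute (ab : seq bool) (p : seq nat) :=
  [:: lk ab (nth 0 p 0) (nth 0 p 1); lk ab (nth 0 p 0) (nth 0 p 2); lk ab (nth 0 p 0) (nth 0 p 3);
      lk ab (nth 0 p 1) (nth 0 p 2); lk ab (nth 0 p 1) (nth 0 p 3); lk ab (nth 0 p 2) (nth 0 p 3)].
Definition allok2 nb (ut : seq Tm) (tab : seq (seq (seq nat))) :=
  let uts := map ext ut in
  allz (fun ab row =>
     allz (fun na rb => allz (fun bb i => uvok1 uts nb ab na bb i) (bblist nb) rb)
       (nalist nb) row) [:: K4; K4e] tab.

Definition vtemps : seq Tm := [::
  ([:: (0,1,2)], [:: (0,1); (0,2)]);
  ([:: (0,1,4); (1,2,3)], [:: (0,1); (0,4); (2,3)]);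
  ([:: (0,1,3); (1,2,4)], [:: (0,1); (0,3); (2,4)]);
  ([:: (0,1,3); (1,2,4)], [:: (0,1); (0,3); (1,2); (2,4)]);
  ([:: (0,1,3); (1,2,5)], [:: (0,1); (0,3); (2,5)]);
  ([:: (0,1,3); (1,2,5)], [:: (0,1); (0,3); (1,2); (2,5)]);
  ([:: (0,1,2); (1,3,4)], [:: (0,1); (0,2); (3,4)]);
  ([:: (0,1,2); (1,3,4)], [:: (0,1); (0,2); (1,2); (3,4)]);
  ([:: (0,1,2); (1,3,5)], [:: (0,1); (0,2); (3,5)]);
  ([:: (0,1,2); (1,3,5)], [:: (0,1); (0,2); (1,2); (3,5)]);
  ([:: (0,1,2); (0,3,4); (1,3,5)], [:: (0,1); (0,2); (0,3); (0,4); (3,4); (3,5)]);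
  ([:: (0,1,2); (1,3,4)], [:: (0,1); (0,2); (1,3); (3,4)]);
  ([:: (0,1,2); (0,3,5); (1,3,4)], [:: (0,2); (0,3); (0,5); (1,4); (3,4); (3,5)]);
  ([:: (0,1,2); (1,3,5); (2,3,4)], [:: (0,1); (0,2); (2,3); (2,4); (3,4); (3,5)]);
  ([:: (0,1,2); (0,3,4); (1,3,5)], [:: (0,2); (0,3); (0,4); (1,5); (3,4); (3,5)]);
  ([:: (0,1,2); (1,3,4); (2,3,5)], [:: (0,1); (0,2); (2,3); (2,5); (3,4); (3,5)]);
  ([:: (0,2,4); (0,3,5); (1,2,5); (1,3,4)], [:: (0,2); (0,3); (0,4); (0,5); (2,4); (2,5); (3,4); (3,5)]);
  ([:: (0,1,2); (1,4,5)], [:: (0,1); (0,2); (4,5)]);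
  ([:: (0,1,2); (1,4,5)], [:: (0,1); (0,2); (1,2); (4,5)]);
  ([:: (0,1,2); (0,3,4); (1,4,5)], [:: (0,1); (0,2); (0,3); (0,4); (3,4); (4,5)]);
  ([:: (0,1,2); (0,4,5); (1,3,4)], [:: (0,2); (0,4); (0,5); (1,3); (3,4); (4,5)]);
  ([:: (0,1,2); (1,3,4)], [:: (0,1); (0,2); (1,4); (3,4)]);
  ([:: (0,1,2); (1,4,5); (2,3,4)], [:: (0,1); (0,2); (2,3); (2,4); (3,4); (4,5)]);
  ([:: (0,1,2); (0,3,4); (1,4,5)], [:: (0,2); (0,3); (0,4); (1,5); (3,4); (4,5)]);
  ([:: (0,2,3); (0,4,5); (1,2,5); (1,3,4)], [:: (0,2); (0,3); (0,4); (0,5); (2,3); (2,5); (3,4); (4,5)]);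
  ([:: (0,1,2); (1,3,4); (2,4,5)], [:: (0,1); (0,2); (2,4); (2,5); (3,4); (4,5)]);
  ([:: (0,1,2); (0,3,5); (1,4,5)], [:: (0,1); (0,2); (0,3); (0,5); (3,5); (4,5)]);
  ([:: (0,1,2); (0,4,5); (1,3,5)], [:: (0,2); (0,4); (0,5); (1,3); (3,5); (4,5)]);
  ([:: (0,1,2); (0,3,5); (1,4,5)], [:: (0,2); (0,3); (0,5); (1,4); (3,5); (4,5)]);
  ([:: (0,2,3); (0,4,5); (1,2,4); (1,3,5)], [:: (0,2); (0,3); (0,4); (0,5); (2,3); (2,4); (3,5); (4,5)]);
  ([:: (0,1,2); (1,3,5)], [:: (0,1); (0,2); (1,5); (3,5)]);
  ([:: (0,1,2); (1,4,5); (2,3,5)], [:: (0,1); (0,2); (2,3); (2,5); (3,5); (4,5)]);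
  ([:: (0,1,2); (1,3,5); (2,4,5)], [:: (0,1); (0,2); (2,4); (2,5); (3,5); (4,5)])].
Definition temps2 : seq Tm := [::
  ([:: (0,1,2); (0,3,4); (0,5,6); (1,3,5)], [:: (0,2); (0,3); (0,4); (1,2); (1,5); (3,4); (3,5); (5,6)]);
  ([:: (0,1,2); (0,3,4); (0,5,6); (1,3,5); (2,3,6); (2,4,5)], [:: (0,1); (0,7); (2,3); (2,4); (2,5); (2,6); (3,4); (3,5); (3,6); (4,5); (5,6)]);
  ([:: (0,1,2); (0,3,4); (0,5,6); (1,3,5)], [:: (0,1); (0,2); (0,6); (1,2); (3,4); (3,5); (4,5); (5,6)]);
  ([:: (0,1,2); (0,3,4); (0,5,6); (1,3,5); (2,4,5)], [:: (0,1); (0,6); (0,7); (2,3); (2,4); (2,5); (3,4); (3,5); (4,5); (5,6)]);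
  ([:: (0,1,2); (0,3,4); (0,5,6); (1,4,5)], [:: (0,1); (0,2); (0,6); (0,7); (1,2); (3,4); (4,5); (5,6)]);
  ([:: (0,1,2); (0,3,4); (0,5,6); (1,3,5); (2,3,7); (2,4,5)], [:: (0,1); (0,6); (2,3); (2,4); (2,5); (2,7); (3,4); (3,5); (3,7); (4,5); (5,6)]);
  ([:: (0,1,2); (0,3,4); (0,6,7); (1,3,5)], [:: (0,2); (0,3); (0,4); (1,2); (1,5); (3,4); (3,5); (6,7)]);
  ([:: (0,1,2); (0,3,5); (0,4,6); (1,4,5)], [:: (0,1); (0,2); (0,6); (0,7); (1,2); (3,5); (4,5); (4,6)]);
  ([:: (0,1,2); (0,3,4); (0,5,6); (1,3,5)], [:: (0,1); (0,2); (0,7); (1,2); (3,4); (3,5); (4,5); (5,6)]);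
  ([:: (0,1,2); (0,3,4); (0,5,6); (1,3,5); (4,5,7)], [:: (0,1); (0,2); (0,6); (1,2); (3,4); (3,5); (4,5); (4,7); (5,6); (5,7)]);
  ([:: (0,1,2); (0,3,4); (0,5,6); (1,3,5)], [:: (0,1); (0,2); (0,6); (0,7); (1,2); (3,4); (3,5); (5,6)]);
  ([:: (0,1,2); (0,3,5); (0,4,6); (1,3,4)], [:: (0,1); (0,2); (0,3); (1,2); (3,4); (3,5); (4,5); (4,6)]);
  ([:: (0,1,2); (0,3,5); (0,4,6); (1,3,4)], [:: (0,2); (0,3); (0,4); (1,2); (1,5); (3,4); (3,5); (4,6)]);
  ([:: (0,1,2); (0,3,4); (0,5,6); (1,3,5)], [:: (0,3); (0,4); (0,7); (1,2); (1,5); (3,4); (3,5); (5,6)]);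
  ([:: (0,1,2); (0,3,5); (0,4,7); (1,4,5)], [:: (0,1); (0,2); (0,6); (1,2); (3,5); (4,5); (4,7)]);
  ([:: (0,1,2); (0,3,4); (0,5,6); (1,3,5)], [:: (0,3); (0,5); (0,6); (1,2); (1,4); (3,4); (3,5); (5,6)]);
  ([:: (0,1,2); (0,3,4); (0,6,7); (1,4,5)], [:: (0,1); (0,2); (0,3); (0,4); (1,2); (3,4); (4,5); (6,7)]);
  ([:: (0,1,2); (0,3,6); (0,4,5); (1,3,4)], [:: (0,1); (0,2); (1,2); (3,4); (3,5); (3,6); (4,5)]);
  ([:: (0,1,2); (0,3,4); (0,5,6); (1,3,5)], [:: (0,2); (0,4); (0,7); (1,3); (1,5); (3,4); (3,5); (5,6)]);
  ([:: (0,1,2); (0,3,4); (0,5,6); (1,3,5); (2,3,6)], [:: (0,1); (0,4); (0,7); (1,4); (2,3); (2,6); (3,4); (3,5); (3,6); (5,6)]);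
  ([:: (0,1,2); (0,3,4); (0,6,7); (1,4,5)], [:: (0,3); (0,4); (0,5); (1,2); (3,4); (4,5); (6,7)]);
  ([:: (0,1,2); (0,3,4); (0,5,6); (1,3,5); (2,4,6)], [:: (0,1); (0,7); (2,3); (2,4); (2,6); (3,4); (3,5); (4,5); (4,6); (5,6)]);
  ([:: (0,1,2); (0,3,5); (0,4,6); (1,3,4)], [:: (0,1); (0,2); (1,2); (3,4); (3,5); (4,5); (4,6)]);
  ([:: (0,1,2); (0,3,6); (0,4,5); (1,3,4)], [:: (0,1); (0,2); (0,3); (0,4); (1,2); (3,4); (3,6); (4,5)]);
  ([:: (0,1,2); (0,3,4); (0,5,6); (1,4,5); (2,3,5)], [:: (0,1); (0,6); (0,7); (2,3); (2,5); (3,4); (3,5); (4,5); (5,6)]);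
  ([:: (0,1,2); (0,3,5); (0,4,7); (1,4,5)], [:: (0,1); (0,2); (0,3); (0,6); (1,2); (3,5); (4,5); (4,7)]);
  ([:: (0,1,2); (0,3,5); (0,6,7); (1,4,5)], [:: (0,1); (0,2); (0,3); (0,5); (1,2); (3,5); (4,5); (6,7)]);
  ([:: (0,1,2); (0,3,5); (0,4,6); (1,4,5)], [:: (0,3); (0,4); (0,5); (1,2); (3,5); (4,5); (4,6)]);
  ([:: (0,1,2); (0,3,5); (0,6,7); (1,4,5)], [:: (0,1); (0,2); (0,3); (1,2); (3,5); (4,5); (6,7)]);
  ([:: (0,1,2); (0,3,7); (0,4,5); (1,3,5)], [:: (0,1); (0,2); (0,5); (1,2); (3,5); (3,7); (4,5)]);
  ([:: (0,1,2); (0,3,7); (0,4,5); (1,3,4)], [:: (0,1); (0,2); (0,4); (1,2); (3,4); (3,7); (4,5)]);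
  ([:: (0,1,2); (0,3,5); (1,4,5); (2,3,4)], [:: (0,1); (0,2); (0,3); (2,3); (2,4); (3,4); (3,5); (4,5)]);
  ([:: (0,1,2); (0,3,4); (1,3,5); (2,4,5)], [:: (0,1); (0,3); (1,2); (2,4); (2,5); (3,4); (3,5); (4,5)]);
  ([:: (0,1,2); (0,3,6); (0,4,5); (1,3,5)], [:: (0,1); (0,2); (0,5); (1,2); (3,5); (3,6); (4,5)])].
Definition tab2 : seq (seq (seq nat)) := [::
  [:: [:: 1; 1];
   [:: 0; 1];
   [:: 1; 1];
   [:: 0; 1];
   [:: 0; 1];
   [:: 0; 1];
   [:: 0; 1];
   [:: 0; 1];
   [:: 0; 1];
   [:: 0; 1];
   [:: 5; 5];
   [:: 12; 6];
   [:: 11; 6];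
   [:: 11; 6];
   [:: 5; 5];
   [:: 0; 2];
   [:: 3; 3];
   [:: 0; 3];
   [:: 3; 3];
   [:: 0; 3];
   [:: 3; 3];
   [:: 0; 3];
   [:: 0; 2];
   [:: 3; 3];
   [:: 0; 3];
   [:: 0; 3];
   [:: 3; 3];
   [:: 0; 3];
   [:: 5; 5];
   [:: 32; 6];
   [:: 17; 6];
   [:: 0; 1];
   [:: 1; 1];
   [:: 0; 1];
   [:: 0; 1];
   [:: 1; 1];
   [:: 0; 1];
   [:: 0; 1];
   [:: 1; 1];
   [:: 0; 1];
   [:: 0; 1];
   [:: 0; 1];
   [:: 5; 5];
   [:: 12; 6];
   [:: 11; 6];
   [:: 12; 6];
   [:: 11; 6];
   [:: 12; 6];
   [:: 5; 5];
   [:: 0; 2];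
   [:: 3; 3];
   [:: 0; 3];
   [:: 3; 3];
   [:: 0; 3];
   [:: 3; 3];
   [:: 0; 3];
   [:: 3; 3];
   [:: 0; 2];
   [:: 3; 3];
   [:: 0; 3];
   [:: 3; 3];
   [:: 0; 3];
   [:: 3; 3];
   [:: 0; 3];
   [:: 5; 5];
   [:: 17; 6];
   [:: 0; 1];
   [:: 1; 1];
   [:: 0; 1];
   [:: 0; 1];
   [:: 0; 1];
   [:: 0; 1];
   [:: 1; 1];
   [:: 0; 1];
   [:: 0; 1];
   [:: 0; 1];
   [:: 5; 5];
   [:: 12; 6];
   [:: 11; 6];
   [:: 11; 6];
   [:: 12; 6];
   [:: 5; 5];
   [:: 0; 2];
   [:: 3; 3];
   [:: 0; 3];
   [:: 3; 3];
   [:: 0; 3];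
   [:: 3; 3];
   [:: 0; 3];
   [:: 0; 2];
   [:: 3; 3];
   [:: 0; 3];
   [:: 3; 3];
   [:: 0; 3];
   [:: 3; 3];
   [:: 0; 3];
   [:: 1; 1];
   [:: 1; 1];
   [:: 1; 1];
   [:: 1; 1];
   [:: 0; 1];
   [:: 1; 1];
   [:: 0; 1];
   [:: 0; 1];
   [:: 1; 1];
   [:: 0; 1];
   [:: 0; 1];
   [:: 1; 1];
   [:: 0; 1];
   [:: 0; 1];
   [:: 1; 1];
   [:: 0; 1];
   [:: 5; 5];
   [:: 12; 6];
   [:: 11; 6];
   [:: 12; 6];
   [:: 11; 6];
   [:: 12; 6];
   [:: 5; 5];
   [:: 12; 6];
   [:: 0; 2];
   [:: 3; 3];
   [:: 0; 3];
   [:: 3; 3];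
   [:: 0; 3];
   [:: 3; 3];
   [:: 0; 3];
   [:: 3; 3];
   [:: 0; 2];
   [:: 3; 3];
   [:: 0; 3];
   [:: 3; 3];
   [:: 0; 3];
   [:: 3; 3];
   [:: 0; 3];
   [:: 3; 3]];
  [:: [:: 2; 2];
   [:: 0; 1];
   [:: 1; 1];
   [:: 0; 1];
   [:: 0; 1];
   [:: 0; 1];
   [:: 0; 1];
   [:: 0; 1];
   [:: 0; 1];
   [:: 0; 1];
   [:: 2; 2];
   [:: 12; 6];
   [:: 11; 6];
   [:: 2; 2];
   [:: 11; 6];
   [:: 0; 2];
   [:: 9; 9];
   [:: 0; 9];
   [:: 10; 10];
   [:: 0; 10];
   [:: 10; 10];
   [:: 0; 10];
   [:: 0; 2];
   [:: 9; 9];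
   [:: 0; 9];
   [:: 0; 5];
   [:: 10; 10];
   [:: 0; 10];
   [:: 2; 2];
   [:: 11; 6];
   [:: 2; 2];
   [:: 0; 2];
   [:: 9; 9];
   [:: 0; 9];
   [:: 0; 10];
   [:: 10; 10];
   [:: 0; 10];
   [:: 0; 2];
   [:: 9; 9];
   [:: 0; 9];
   [:: 0; 5];
   [:: 0; 10];
   [:: 2; 2];
   [:: 12; 6];
   [:: 11; 6];
   [:: 12; 6];
   [:: 2; 2];
   [:: 12; 6];
   [:: 11; 6];
   [:: 0; 2];
   [:: 9; 9];
   [:: 0; 9];
   [:: 10; 10];
   [:: 0; 10];
   [:: 10; 10];
   [:: 0; 10];
   [:: 10; 10];
   [:: 0; 2];
   [:: 9; 9];
   [:: 0; 9];
   [:: 10; 10];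
   [:: 0; 5];
   [:: 10; 10];
   [:: 0; 10];
   [:: 2; 2];
   [:: 2; 2];
   [:: 0; 2];
   [:: 8; 8];
   [:: 0; 8];
   [:: 0; 8];
   [:: 0; 8];
   [:: 0; 2];
   [:: 8; 8];
   [:: 0; 8];
   [:: 0; 5];
   [:: 0; 8];
   [:: 2; 2];
   [:: 12; 6];
   [:: 11; 6];
   [:: 2; 2];
   [:: 12; 6];
   [:: 11; 6];
   [:: 0; 2];
   [:: 9; 9];
   [:: 0; 9];
   [:: 10; 10];
   [:: 0; 10];
   [:: 10; 10];
   [:: 0; 10];
   [:: 0; 2];
   [:: 9; 9];
   [:: 0; 9];
   [:: 10; 10];
   [:: 0; 5];
   [:: 10; 10];
   [:: 0; 10];
   [:: 2; 2];
   [:: 11; 6];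
   [:: 2; 2];
   [:: 11; 6];
   [:: 0; 1];
   [:: 1; 1];
   [:: 0; 1];
   [:: 0; 1];
   [:: 1; 1];
   [:: 0; 1];
   [:: 0; 1];
   [:: 1; 1];
   [:: 0; 1];
   [:: 0; 1];
   [:: 1; 1];
   [:: 0; 1];
   [:: 2; 2];
   [:: 12; 6];
   [:: 11; 6];
   [:: 12; 6];
   [:: 2; 2];
   [:: 12; 6];
   [:: 11; 6];
   [:: 12; 6];
   [:: 0; 2];
   [:: 9; 9];
   [:: 0; 9];
   [:: 10; 10];
   [:: 0; 10];
   [:: 10; 10];
   [:: 0; 10];
   [:: 10; 10];
   [:: 0; 2];
   [:: 9; 9];
   [:: 0; 9];
   [:: 10; 10];
   [:: 0; 5];
   [:: 10; 10];
   [:: 0; 10];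
   [:: 10; 10]]].
Definition temps3 : seq Tm := [::
  ([:: (0,1,2); (0,3,5); (0,4,6); (0,7,8); (1,3,4)], [:: (0,1); (0,2); (0,6); (0,7); (1,2); (3,4); (3,5); (4,5); (4,6); (7,8)]);
  ([:: (0,1,2); (0,3,4); (0,5,7); (0,6,8); (1,3,5)], [:: (0,1); (0,2); (0,6); (0,8); (1,2); (3,4); (3,5); (4,5); (5,7); (6,8)]);
  ([:: (0,1,2); (0,3,5); (0,4,6); (0,7,8); (1,3,4)], [:: (0,2); (0,3); (0,4); (0,6); (1,2); (1,5); (3,4); (3,5); (4,6); (7,8)]);
  ([:: (0,1,2); (0,3,5); (0,4,7); (0,6,8); (1,3,4)], [:: (0,2); (0,3); (0,4); (0,6); (1,2); (1,5); (3,4); (3,5); (4,7); (6,8)]);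
  ([:: (0,1,2); (0,3,4); (0,5,6); (0,7,8); (1,3,5)], [:: (0,2); (0,3); (0,4); (0,5); (1,2); (1,4); (3,4); (3,5); (5,6); (7,8)]);
  ([:: (0,1,2); (0,3,4); (0,5,6); (0,7,8); (1,3,5); (2,4,5)], [:: (0,1); (0,6); (0,7); (0,8); (2,3); (2,4); (2,5); (3,4); (3,5); (4,5); (5,6); (7,8)]);
  ([:: (0,1,2); (0,3,5); (0,4,6); (0,7,8); (1,4,5)], [:: (0,3); (0,4); (0,5); (0,6); (1,2); (3,5); (4,5); (4,6); (7,8)]);
  ([:: (0,1,2); (0,3,4); (0,6,7); (1,4,5); (2,3,5); (2,4,8)], [:: (0,1); (0,6); (0,7); (2,3); (2,4); (2,5); (2,8); (3,4); (3,5); (4,5); (4,8); (6,7)]);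
  ([:: (0,1,2); (0,3,4); (0,5,6); (0,7,8); (1,3,5)], [:: (0,2); (0,3); (0,5); (0,6); (1,2); (1,4); (3,4); (3,5); (5,6); (7,8)]);
  ([:: (0,1,2); (0,3,4); (0,5,7); (0,6,8); (1,3,5)], [:: (0,2); (0,3); (0,4); (0,6); (1,2); (1,5); (3,4); (3,5); (5,7); (6,8)]);
  ([:: (0,1,2); (0,3,4); (0,5,6); (1,3,5)], [:: (0,2); (0,3); (0,4); (1,2); (1,5); (3,4); (3,5); (5,6)]);
  ([:: (0,1,2); (0,3,4); (0,5,6); (0,7,8); (1,4,5)], [:: (0,2); (0,3); (0,4); (0,5); (1,2); (3,4); (4,5); (5,6); (7,8)]);
  ([:: (0,1,2); (0,3,4); (0,6,7); (1,4,5)], [:: (0,1); (0,2); (0,6); (0,7); (1,2); (3,4); (4,5); (6,7)]);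
  ([:: (0,1,2); (0,3,4); (0,5,6); (0,7,8); (1,3,5)], [:: (0,2); (0,3); (0,4); (0,7); (1,2); (1,5); (3,4); (3,5); (5,6); (7,8)]);
  ([:: (0,1,2); (0,3,4); (0,6,8); (1,3,5); (2,4,5)], [:: (0,1); (0,6); (0,7); (2,3); (2,4); (2,5); (3,4); (3,5); (4,5); (6,8)]);
  ([:: (0,1,2); (0,3,4); (0,6,8); (1,4,5)], [:: (0,3); (0,4); (0,5); (0,7); (1,2); (3,4); (4,5); (6,8)]);
  ([:: (0,1,2); (0,3,4); (0,5,6); (1,4,5); (2,3,5)], [:: (0,1); (0,6); (0,7); (0,8); (2,3); (2,5); (3,4); (3,5); (4,5); (5,6)]);
  ([:: (0,1,2); (0,3,5); (0,4,8); (0,6,7); (1,3,4)], [:: (0,2); (0,3); (0,4); (0,5); (1,2); (1,4); (3,4); (3,5); (4,8); (6,7)]);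
  ([:: (0,1,2); (0,3,4); (0,5,6); (0,7,8); (1,3,5)], [:: (0,1); (0,2); (0,7); (0,8); (1,2); (3,4); (3,5); (4,5); (5,6); (7,8)]);
  ([:: (0,1,2); (0,3,4); (0,5,6); (0,7,8); (1,3,5)], [:: (0,3); (0,4); (0,5); (0,6); (1,2); (1,4); (3,4); (3,5); (5,6); (7,8)]);
  ([:: (0,1,2); (0,3,5); (0,4,8); (0,6,7); (1,4,5)], [:: (0,2); (0,3); (0,4); (0,5); (1,2); (3,5); (4,5); (4,8); (6,7)]);
  ([:: (0,1,2); (0,3,4); (0,6,8); (1,3,5); (2,3,8); (2,4,5)], [:: (0,1); (0,6); (0,7); (2,3); (2,4); (2,5); (2,8); (3,4); (3,5); (3,8); (4,5); (6,8)]);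
  ([:: (0,1,2); (0,3,4); (0,7,8); (1,4,5)], [:: (0,3); (0,4); (0,5); (0,6); (1,2); (3,4); (4,5); (7,8)]);
  ([:: (0,1,2); (0,3,5); (0,4,7); (0,6,8); (1,3,4)], [:: (0,1); (0,2); (0,6); (1,2); (3,4); (3,5); (4,5); (4,7); (6,8)]);
  ([:: (0,1,2); (0,3,5); (0,4,8); (1,4,5)], [:: (0,1); (0,2); (0,6); (0,7); (1,2); (3,5); (4,5); (4,8)]);
  ([:: (0,1,3); (0,2,4); (0,5,6); (1,4,5); (2,3,5); (3,4,6)], [:: (0,1); (0,2); (0,7); (2,3); (2,4); (2,5); (3,4); (3,5); (3,6); (4,5); (4,6); (5,6)]);
  ([:: (0,1,2); (0,3,5); (0,4,6); (1,4,5); (3,4,7)], [:: (0,1); (0,2); (0,6); (1,2); (3,4); (3,5); (3,7); (4,5); (4,6); (4,7)]);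
  ([:: (0,1,2); (0,3,5); (0,4,6); (0,7,8); (1,4,5)], [:: (0,1); (0,2); (0,3); (0,6); (1,2); (3,5); (4,5); (4,6); (7,8)]);
  ([:: (0,1,2); (0,3,4); (0,5,7); (0,6,8); (1,3,5)], [:: (0,2); (0,3); (0,5); (1,2); (1,4); (3,4); (3,5); (5,7); (6,8)]);
  ([:: (0,1,2); (0,3,6); (0,4,8); (0,5,7); (1,3,4)], [:: (0,2); (0,3); (0,4); (0,5); (1,2); (1,5); (3,4); (3,6); (4,8); (5,7)]);
  ([:: (0,1,2); (0,3,5); (0,4,6); (1,4,5)], [:: (0,1); (0,2); (0,6); (0,7); (1,2); (3,5); (4,5); (4,6)]);
  ([:: (0,1,2); (0,3,5); (0,4,6); (0,7,8); (1,4,5)], [:: (0,1); (0,2); (0,6); (0,7); (0,8); (1,2); (3,5); (4,5); (4,6); (7,8)]);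
  ([:: (0,1,2); (0,3,5); (0,4,7); (0,6,8); (1,4,5)], [:: (0,1); (0,2); (0,3); (0,4); (0,6); (1,2); (3,5); (4,5); (4,7); (6,8)]);
  ([:: (0,1,2); (0,3,4); (0,5,6); (0,7,8); (1,4,5)], [:: (0,1); (0,2); (0,3); (0,5); (0,6); (1,2); (3,4); (4,5); (5,6); (7,8)]);
  ([:: (0,1,2); (0,3,5); (0,4,6); (1,3,4)], [:: (0,2); (0,3); (0,4); (1,2); (1,5); (3,4); (3,5); (4,6)]);
  ([:: (0,1,2); (0,3,4); (0,6,7); (1,4,5)], [:: (0,2); (0,3); (0,4); (0,5); (1,2); (3,4); (4,5); (6,7)]);
  ([:: (0,1,2); (0,3,4); (0,5,6); (0,7,8); (1,4,5)], [:: (0,1); (0,2); (0,6); (0,7); (0,8); (1,2); (3,4); (4,5); (5,6); (7,8)]);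
  ([:: (0,1,2); (0,3,4); (0,5,7); (0,6,8); (1,3,5)], [:: (0,2); (0,3); (0,5); (0,6); (1,2); (1,4); (3,4); (3,5); (5,7); (6,8)]);
  ([:: (0,1,2); (0,3,4); (0,5,7); (1,3,5); (2,4,5)], [:: (0,1); (0,6); (0,8); (2,3); (2,4); (2,5); (3,4); (3,5); (4,5); (5,7)]);
  ([:: (0,1,2); (0,3,4); (0,6,7); (1,3,5)], [:: (0,2); (0,3); (0,4); (1,2); (1,5); (3,4); (3,5); (6,7)]);
  ([:: (0,1,2); (0,3,4); (0,5,6); (0,7,8); (1,3,5)], [:: (0,1); (0,2); (0,6); (0,7); (0,8); (1,2); (3,4); (3,5); (5,6); (7,8)]);
  ([:: (0,1,2); (0,3,5); (0,4,6); (0,7,8); (1,4,5)], [:: (0,1); (0,2); (0,4); (0,6); (1,2); (3,5); (4,5); (4,6); (7,8)]);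
  ([:: (0,1,2); (0,3,5); (0,4,6); (1,4,5); (2,3,4)], [:: (0,1); (0,6); (0,7); (0,8); (2,3); (2,4); (3,4); (3,5); (4,5); (4,6)]);
  ([:: (0,1,2); (0,3,4); (0,5,6); (1,4,5); (3,5,7)], [:: (0,1); (0,2); (0,6); (1,2); (3,4); (3,5); (3,7); (4,5); (5,6); (5,7)]);
  ([:: (0,1,2); (0,3,4); (0,6,7); (1,4,5)], [:: (0,3); (0,4); (0,5); (0,8); (1,2); (3,4); (4,5); (6,7)]);
  ([:: (0,1,2); (0,3,4); (0,5,7); (0,6,8); (1,4,5)], [:: (0,2); (0,3); (0,4); (0,5); (1,2); (3,4); (4,5); (5,7); (6,8)]);
  ([:: (0,1,2); (0,3,4); (0,6,7); (1,4,5)], [:: (0,3); (0,4); (0,5); (0,7); (1,2); (3,4); (4,5); (6,7)]);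
  ([:: (0,1,2); (0,3,5); (0,7,8); (1,4,5)], [:: (0,2); (0,3); (0,4); (0,5); (1,2); (3,5); (4,5); (7,8)]);
  ([:: (0,1,2); (0,3,4); (0,5,6); (0,7,8); (1,3,5)], [:: (0,2); (0,3); (0,4); (0,6); (1,2); (1,5); (3,4); (3,5); (5,6); (7,8)]);
  ([:: (0,1,2); (0,3,5); (0,6,8); (1,4,5)], [:: (0,2); (0,3); (0,4); (0,5); (1,2); (3,5); (4,5); (6,8)]);
  ([:: (0,1,2); (0,3,4); (0,6,7); (1,4,5)], [:: (0,3); (0,4); (0,5); (0,6); (1,2); (3,4); (4,5); (6,7)]);
  ([:: (0,1,2); (0,3,4); (0,6,7); (1,3,5)], [:: (0,2); (0,3); (0,5); (1,2); (1,4); (3,4); (3,5); (6,7)]);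
  ([:: (0,1,2); (0,3,4); (0,6,8); (1,4,5)], [:: (0,1); (0,2); (0,6); (0,7); (1,2); (3,4); (4,5); (6,8)]);
  ([:: (0,1,2); (0,3,4); (0,6,8); (1,4,5); (2,6,7)], [:: (0,3); (0,4); (0,5); (1,2); (2,6); (2,7); (3,4); (4,5); (6,7); (6,8)]);
  ([:: (0,1,2); (0,3,4); (0,5,8); (0,6,7); (1,3,5)], [:: (0,2); (0,3); (0,4); (0,5); (1,2); (1,4); (3,4); (3,5); (5,8); (6,7)]);
  ([:: (0,1,2); (0,3,5); (0,4,6); (0,7,8); (1,3,4)], [:: (0,1); (0,2); (0,3); (0,6); (1,2); (3,4); (3,5); (4,5); (4,6); (7,8)]);
  ([:: (0,1,2); (0,3,5); (0,4,6); (1,4,5); (2,3,4); (2,5,8)], [:: (0,1); (0,6); (0,7); (2,3); (2,4); (2,5); (2,8); (3,4); (3,5); (4,5); (4,6); (5,8)]);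
  ([:: (0,1,2); (0,3,4); (0,5,6); (0,7,8); (1,3,5); (2,3,6)], [:: (0,1); (0,4); (0,7); (0,8); (1,4); (2,3); (2,6); (3,4); (3,5); (3,6); (5,6); (7,8)]);
  ([:: (0,1,2); (0,3,6); (0,4,7); (1,3,4); (2,3,7); (2,4,5)], [:: (0,1); (0,6); (0,8); (2,3); (2,4); (2,5); (2,7); (3,4); (3,6); (3,7); (4,5); (4,7)]);
  ([:: (0,1,2); (0,3,5); (0,6,7); (1,4,5)], [:: (0,3); (0,4); (0,5); (0,8); (1,2); (3,5); (4,5); (6,7)]);
  ([:: (0,1,2); (0,3,4); (0,6,7); (1,3,5); (2,3,8); (2,4,5)], [:: (0,1); (0,6); (0,7); (2,3); (2,4); (2,5); (2,8); (3,4); (3,5); (3,8); (4,5); (6,7)]);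
  ([:: (0,1,2); (0,3,4); (0,5,6); (1,4,5)], [:: (0,1); (0,2); (0,7); (0,8); (1,2); (3,4); (4,5); (5,6)]);
  ([:: (0,1,2); (0,3,4); (0,5,7); (0,6,8); (1,3,5)], [:: (0,1); (0,2); (0,3); (0,6); (1,2); (3,4); (3,5); (4,5); (5,7); (6,8)]);
  ([:: (0,1,2); (0,3,4); (0,6,7); (1,4,5); (2,3,5); (2,4,7)], [:: (0,1); (0,3); (0,6); (2,3); (2,4); (2,5); (2,7); (3,4); (3,5); (4,5); (4,7); (6,7)]);
  ([:: (0,1,2); (0,3,4); (0,6,7); (1,3,5)], [:: (0,3); (0,4); (0,5); (1,2); (1,4); (3,4); (3,5); (6,7)]);
  ([:: (0,1,2); (0,3,4); (0,6,8); (1,3,5)], [:: (0,2); (0,3); (0,4); (1,2); (1,5); (3,4); (3,5); (6,8)]);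
  ([:: (0,1,2); (0,3,4); (0,6,8); (1,4,5); (2,7,8)], [:: (0,3); (0,4); (0,5); (1,2); (2,7); (2,8); (3,4); (4,5); (6,8); (7,8)]);
  ([:: (0,1,2); (0,3,5); (0,4,6); (1,4,5)], [:: (0,3); (0,4); (0,5); (0,8); (1,2); (3,5); (4,5); (4,6)]);
  ([:: (0,1,2); (0,3,5); (0,6,8); (1,4,5)], [:: (0,3); (0,4); (0,5); (0,7); (1,2); (3,5); (4,5); (6,8)]);
  ([:: (0,1,2); (0,3,4); (0,5,7); (1,4,5)], [:: (0,1); (0,2); (0,6); (0,8); (1,2); (3,4); (4,5); (5,7)]);
  ([:: (0,1,2); (0,3,4); (0,5,7); (0,6,8); (1,3,5)], [:: (0,3); (0,4); (0,5); (0,6); (1,2); (1,4); (3,4); (3,5); (5,7); (6,8)]);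
  ([:: (0,1,2); (0,3,4); (0,5,7); (0,6,8); (1,3,5)], [:: (0,2); (0,3); (0,4); (0,5); (1,2); (1,4); (3,4); (3,5); (5,7); (6,8)]);
  ([:: (0,1,2); (0,3,6); (0,4,7); (0,5,8); (1,3,4)], [:: (0,2); (0,3); (0,4); (0,5); (1,2); (1,5); (3,4); (3,6); (4,7); (5,8)]);
  ([:: (0,1,2); (0,3,4); (0,5,6); (1,3,5)], [:: (0,2); (0,3); (0,4); (0,5); (1,2); (3,4); (3,5); (5,6)]);
  ([:: (0,1,2); (0,3,4); (0,5,7); (1,4,5); (2,3,5); (2,4,7)], [:: (0,1); (0,6); (0,8); (2,3); (2,4); (2,5); (2,7); (3,4); (3,5); (4,5); (4,7); (5,7)]);
  ([:: (0,1,2); (0,3,6); (0,4,5); (0,7,8); (1,3,4)], [:: (0,1); (0,2); (0,3); (0,4); (0,6); (1,2); (3,4); (3,6); (4,5); (7,8)]);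
  ([:: (0,1,2); (0,3,6); (0,4,5); (0,7,8); (1,3,5)], [:: (0,1); (0,2); (0,3); (0,5); (0,6); (1,2); (3,5); (3,6); (4,5); (7,8)]);
  ([:: (0,1,2); (0,3,4); (0,5,6); (1,3,5)], [:: (0,3); (0,4); (0,5); (1,2); (1,4); (3,4); (3,5); (5,6)]);
  ([:: (0,1,2); (0,3,4); (0,5,6); (0,7,8); (1,3,5)], [:: (0,3); (0,4); (0,7); (0,8); (1,2); (1,5); (3,4); (3,5); (5,6); (7,8)]);
  ([:: (0,1,2); (0,3,4); (0,6,7); (1,4,5); (2,7,8)], [:: (0,3); (0,4); (0,5); (1,2); (2,7); (2,8); (3,4); (4,5); (6,7); (7,8)]);
  ([:: (0,1,2); (0,3,4); (0,5,6); (1,4,5); (2,3,5); (2,4,6)], [:: (0,1); (0,7); (0,8); (2,3); (2,4); (2,5); (2,6); (3,4); (3,5); (4,5); (4,6); (5,6)]);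
  ([:: (0,1,2); (0,3,5); (0,4,7); (1,4,5)], [:: (0,1); (0,2); (0,3); (0,6); (1,2); (3,5); (4,5); (4,7)]);
  ([:: (0,1,2); (0,3,4); (0,7,8); (1,3,5)], [:: (0,2); (0,3); (0,4); (1,2); (1,5); (3,4); (3,5); (7,8)]);
  ([:: (0,1,2); (0,3,5); (0,4,6); (1,4,5); (2,3,4); (2,5,7)], [:: (0,1); (0,6); (0,8); (2,3); (2,4); (2,5); (2,7); (3,4); (3,5); (4,5); (4,6); (5,7)]);
  ([:: (0,1,2); (0,3,4); (0,5,7); (1,3,5); (2,3,7); (2,4,5)], [:: (0,1); (0,6); (0,8); (2,3); (2,4); (2,5); (2,7); (3,4); (3,5); (3,7); (4,5); (5,7)]);
  ([:: (0,1,2); (0,3,5); (0,4,7); (0,6,8); (1,4,5)], [:: (0,1); (0,2); (0,3); (0,6); (0,8); (1,2); (3,5); (4,5); (4,7); (6,8)]);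
  ([:: (0,1,2); (0,3,6); (0,5,7); (1,3,5); (2,3,7); (2,4,5)], [:: (0,1); (0,6); (0,8); (2,3); (2,4); (2,5); (2,7); (3,5); (3,6); (3,7); (4,5); (5,7)]);
  ([:: (0,1,2); (0,3,4); (0,7,8); (1,4,5); (2,6,8)], [:: (0,3); (0,4); (0,5); (1,2); (2,6); (2,8); (3,4); (4,5); (6,8); (7,8)]);
  ([:: (0,1,2); (0,3,5); (0,4,6); (1,4,5); (2,3,4); (2,5,7)], [:: (0,1); (0,3); (0,6); (2,3); (2,4); (2,5); (2,7); (3,4); (3,5); (4,5); (4,6); (5,7)]);
  ([:: (0,1,2); (0,3,6); (0,4,5); (1,3,4)], [:: (0,1); (0,2); (0,3); (1,2); (1,3); (3,4); (3,6); (4,5)]);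
  ([:: (0,1,2); (0,3,4); (0,5,6); (0,7,8); (1,3,5)], [:: (0,1); (0,2); (0,3); (0,7); (1,2); (3,4); (3,5); (4,5); (5,6); (7,8)]);
  ([:: (0,1,2); (0,3,4); (0,6,7); (1,4,5); (2,6,8)], [:: (0,3); (0,4); (0,5); (1,2); (2,6); (2,8); (3,4); (4,5); (6,7); (6,8)]);
  ([:: (0,1,2); (0,3,4); (0,6,7); (1,3,5); (2,3,7); (2,4,5)], [:: (0,1); (0,6); (0,8); (2,3); (2,4); (2,5); (2,7); (3,4); (3,5); (3,7); (4,5); (6,7)]);
  ([:: (0,1,2); (0,3,4); (0,5,6); (1,4,5); (3,5,7)], [:: (0,1); (0,2); (0,4); (1,2); (3,4); (3,5); (3,7); (4,5); (5,6); (5,7)]);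
  ([:: (0,1,2); (0,3,7); (0,4,5); (1,3,4)], [:: (0,1); (0,2); (0,3); (0,4); (1,2); (3,4); (3,7); (4,5)]);
  ([:: (0,1,2); (0,3,5); (0,4,7); (1,4,5)], [:: (0,2); (0,3); (0,4); (0,5); (1,2); (3,5); (4,5); (4,7)]);
  ([:: (0,1,2); (0,3,5); (0,4,7); (0,6,8); (1,4,5)], [:: (0,1); (0,2); (0,5); (0,6); (0,8); (1,2); (3,5); (4,5); (4,7); (6,8)]);
  ([:: (0,1,2); (0,3,4); (0,5,8); (1,4,5); (3,5,7)], [:: (0,1); (0,2); (0,6); (1,2); (3,4); (3,5); (3,7); (4,5); (5,7); (5,8)]);
  ([:: (0,1,2); (0,3,5); (0,6,8); (1,4,5); (2,6,7)], [:: (0,3); (0,4); (0,5); (1,2); (2,6); (2,7); (3,5); (4,5); (6,7); (6,8)]);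
  ([:: (0,1,2); (0,3,5); (0,4,7); (1,4,5)], [:: (0,1); (0,2); (0,6); (0,8); (1,2); (3,5); (4,5); (4,7)]);
  ([:: (0,1,2); (0,3,4); (0,5,7); (0,6,8); (1,3,5)], [:: (0,1); (0,2); (0,4); (0,6); (0,8); (1,2); (3,4); (3,5); (5,7); (6,8)]);
  ([:: (0,1,2); (0,3,5); (0,4,6); (1,4,5)], [:: (0,1); (0,2); (0,3); (0,5); (1,2); (3,5); (4,5); (4,6)]);
  ([:: (0,1,2); (0,3,4); (0,5,6); (1,3,5); (4,6,7)], [:: (0,1); (0,2); (0,3); (1,2); (3,4); (3,5); (4,6); (4,7); (5,6); (6,7)]);
  ([:: (0,1,2); (0,3,5); (0,6,7); (1,4,5)], [:: (0,1); (0,2); (0,3); (0,6); (1,2); (3,5); (4,5); (6,7)]);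
  ([:: (0,1,2); (0,3,5); (0,6,7); (1,4,5); (2,3,4)], [:: (0,1); (0,2); (0,3); (0,6); (2,3); (2,4); (3,4); (3,5); (4,5); (6,7)]);
  ([:: (0,1,2); (0,3,5); (0,4,7); (1,4,5); (2,3,4)], [:: (0,1); (0,2); (0,3); (0,6); (2,3); (2,4); (3,4); (3,5); (4,5); (4,7)]);
  ([:: (0,1,2); (0,3,5); (0,4,8); (0,6,7); (1,4,5)], [:: (0,1); (0,2); (0,3); (0,5); (0,7); (1,2); (3,5); (4,5); (4,8); (6,7)]);
  ([:: (0,1,2); (0,3,5); (0,4,7); (0,6,8); (1,4,5)], [:: (0,1); (0,2); (0,5); (0,7); (1,2); (3,5); (4,5); (4,7); (6,8)]);
  ([:: (0,1,2); (0,3,4); (0,5,7); (0,6,8); (1,4,5)], [:: (0,1); (0,2); (0,4); (0,6); (0,8); (1,2); (3,4); (4,5); (5,7); (6,8)]);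
  ([:: (0,1,2); (0,3,4); (0,5,7); (0,6,8); (1,4,5)], [:: (0,1); (0,2); (0,3); (0,4); (0,6); (1,2); (3,4); (4,5); (5,7); (6,8)]);
  ([:: (0,1,2); (0,3,5); (0,6,7); (1,4,5); (2,3,4)], [:: (0,1); (0,2); (0,3); (0,8); (2,3); (2,4); (3,4); (3,5); (4,5); (6,7)]);
  ([:: (0,1,2); (0,3,4); (0,6,8); (1,3,5); (2,3,6); (2,4,5)], [:: (0,1); (0,7); (2,3); (2,4); (2,5); (2,6); (3,4); (3,5); (3,6); (4,5); (6,8)]);
  ([:: (0,1,2); (0,3,5); (0,6,7); (1,4,5)], [:: (0,1); (0,2); (0,5); (0,8); (1,2); (3,5); (4,5); (6,7)]);
  ([:: (0,1,2); (0,3,7); (0,4,5); (1,3,5)], [:: (0,1); (0,2); (0,3); (0,5); (1,2); (3,5); (3,7); (4,5)]);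
  ([:: (0,1,2); (0,3,4); (0,6,7); (1,3,5)], [:: (0,2); (0,3); (0,4); (0,5); (1,2); (3,4); (3,5); (6,7)]);
  ([:: (0,1,2); (0,3,5); (0,4,8); (1,3,4)], [:: (0,2); (0,3); (0,5); (1,2); (1,4); (3,4); (3,5); (4,8)]);
  ([:: (0,1,2); (0,3,5); (0,6,7); (1,4,5); (2,6,8)], [:: (0,3); (0,4); (0,5); (1,2); (2,6); (2,8); (3,5); (4,5); (6,7); (6,8)]);
  ([:: (0,1,2); (0,3,4); (0,5,7); (0,6,8); (1,3,5)], [:: (0,1); (0,2); (0,6); (0,7); (0,8); (1,2); (3,4); (3,5); (5,7); (6,8)]);
  ([:: (0,1,2); (0,3,4); (0,6,7); (1,4,5); (3,5,6)], [:: (0,1); (0,2); (0,7); (1,2); (3,4); (3,5); (3,6); (4,5); (5,6); (6,7)]);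
  ([:: (0,1,2); (0,3,4); (0,5,7); (0,6,8); (1,3,5); (2,4,5)], [:: (0,1); (0,4); (0,6); (0,8); (2,3); (2,4); (2,5); (3,4); (3,5); (4,5); (5,7); (6,8)]);
  ([:: (0,1,2); (0,3,4); (0,6,7); (1,4,5)], [:: (0,1); (0,2); (0,3); (0,6); (1,2); (3,4); (4,5); (6,7)]);
  ([:: (0,1,2); (0,3,4); (0,6,7); (1,3,5); (2,4,5); (2,7,8)], [:: (0,1); (0,6); (2,3); (2,4); (2,5); (2,7); (2,8); (3,4); (3,5); (4,5); (6,7); (7,8)]);
  ([:: (0,1,2); (0,3,4); (0,5,8); (1,4,5); (2,3,5); (2,4,8)], [:: (0,1); (0,6); (0,7); (2,3); (2,4); (2,5); (2,8); (3,4); (3,5); (4,5); (4,8); (5,8)]);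
  ([:: (0,1,2); (0,3,5); (0,4,7); (1,4,5); (3,7,8)], [:: (0,1); (0,2); (0,6); (1,2); (3,5); (3,7); (3,8); (4,5); (4,7); (7,8)]);
  ([:: (0,1,2); (0,3,4); (0,5,7); (0,6,8); (1,4,5)], [:: (0,1); (0,2); (0,3); (0,5); (0,6); (1,2); (3,4); (4,5); (5,7); (6,8)]);
  ([:: (0,1,2); (0,3,4); (0,6,7); (1,4,5); (2,3,5); (2,4,6)], [:: (0,1); (0,3); (0,8); (2,3); (2,4); (2,5); (2,6); (3,4); (3,5); (4,5); (4,6); (6,7)]);
  ([:: (0,1,2); (0,3,4); (0,6,7); (1,4,5)], [:: (0,1); (0,2); (0,4); (0,8); (1,2); (3,4); (4,5); (6,7)]);
  ([:: (0,1,2); (0,3,4); (0,6,8); (1,3,5); (2,3,7); (2,4,5)], [:: (0,1); (0,6); (0,8); (2,3); (2,4); (2,5); (2,7); (3,4); (3,5); (3,7); (4,5); (6,8)]);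
  ([:: (0,1,2); (0,3,4); (0,6,7); (1,4,5)], [:: (0,1); (0,2); (0,4); (0,6); (1,2); (3,4); (4,5); (6,7)]);
  ([:: (0,1,2); (0,3,4); (0,6,7); (1,4,5); (2,3,8); (2,4,7)], [:: (0,1); (0,6); (2,3); (2,4); (2,5); (2,7); (2,8); (3,4); (3,8); (4,5); (4,7); (6,7)]);
  ([:: (0,1,2); (0,3,6); (0,4,5); (1,3,5)], [:: (0,1); (0,2); (0,3); (0,5); (1,2); (3,5); (3,6); (4,5)]);
  ([:: (0,1,2); (0,3,6); (0,4,5); (1,3,4)], [:: (0,1); (0,2); (0,3); (0,4); (1,2); (3,4); (3,6); (4,5)]);
  ([:: (0,1,2); (0,3,8); (0,4,5); (1,3,5)], [:: (0,1); (0,2); (0,5); (1,2); (3,5); (3,8); (4,5)]);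
  ([:: (0,1,2); (0,3,4); (0,6,7); (1,3,5); (2,5,6)], [:: (0,3); (0,4); (1,2); (1,5); (2,5); (2,6); (3,4); (3,5); (5,6); (6,7)]);
  ([:: (0,1,2); (0,3,4); (0,6,8); (1,4,5); (2,3,5); (2,4,6)], [:: (0,1); (0,3); (0,7); (2,3); (2,4); (2,5); (2,6); (3,4); (3,5); (4,5); (4,6); (6,8)]);
  ([:: (0,1,2); (0,3,4); (0,5,6); (1,3,5); (2,3,8); (2,4,5)], [:: (0,1); (0,6); (0,7); (2,3); (2,4); (2,5); (2,8); (3,4); (3,5); (3,8); (4,5); (5,6)]);
  ([:: (0,1,2); (0,3,5); (0,6,8); (1,4,5); (2,3,4)], [:: (0,1); (0,2); (0,3); (0,7); (2,3); (2,4); (3,4); (3,5); (4,5); (6,8)]);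
  ([:: (0,1,2); (0,3,4); (0,5,6); (1,3,5); (2,4,5)], [:: (0,2); (0,4); (0,5); (1,3); (2,4); (2,5); (3,4); (3,5); (4,5); (5,6)]);
  ([:: (0,1,2); (0,3,5); (0,6,8); (1,4,5)], [:: (0,1); (0,2); (0,5); (0,8); (1,2); (3,5); (4,5); (6,8)]);
  ([:: (0,1,2); (0,3,5); (0,6,7); (1,4,5)], [:: (0,1); (0,2); (0,5); (0,6); (1,2); (3,5); (4,5); (6,7)]);
  ([:: (0,1,2); (0,3,5); (0,4,8); (1,4,5); (2,3,8); (2,5,7)], [:: (0,1); (0,6); (2,3); (2,4); (2,5); (2,7); (2,8); (3,5); (3,8); (4,5); (4,8); (5,7)]);
  ([:: (0,1,2); (0,3,7); (0,4,5); (0,6,8); (1,3,5)], [:: (0,1); (0,2); (0,3); (0,5); (0,6); (1,2); (3,5); (3,7); (4,5); (6,8)]);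
  ([:: (0,1,2); (0,3,7); (0,4,5); (0,6,8); (1,3,4)], [:: (0,1); (0,2); (0,3); (0,4); (0,6); (1,2); (3,4); (3,7); (4,5); (6,8)]);
  ([:: (0,1,2); (0,3,4); (0,6,7); (1,4,5); (3,7,8)], [:: (0,1); (0,2); (0,6); (1,2); (3,4); (3,7); (3,8); (4,5); (6,7); (7,8)]);
  ([:: (0,1,2); (0,3,4); (0,6,8); (1,4,5)], [:: (0,1); (0,2); (0,4); (0,7); (1,2); (3,4); (4,5); (6,8)]);
  ([:: (0,1,2); (0,3,6); (0,4,5); (1,3,4)], [:: (0,1); (0,2); (1,2); (3,4); (3,5); (3,6); (4,5)]);
  ([:: (0,1,2); (0,3,8); (0,4,5); (1,3,4)], [:: (0,1); (0,2); (0,4); (1,2); (3,4); (3,8); (4,5)]);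
  ([:: (0,1,2); (0,3,4); (0,6,8); (1,3,5); (2,4,5); (3,7,8)], [:: (0,1); (0,6); (2,3); (2,4); (2,5); (3,4); (3,5); (3,7); (3,8); (4,5); (6,8); (7,8)]);
  ([:: (0,1,2); (0,3,4); (0,5,8); (1,3,5); (2,3,8); (2,4,5)], [:: (0,1); (0,6); (0,7); (2,3); (2,4); (2,5); (2,8); (3,4); (3,5); (3,8); (4,5); (5,8)]);
  ([:: (0,1,2); (0,3,5); (0,7,8); (1,4,5); (2,6,8)], [:: (0,3); (0,4); (0,5); (1,2); (2,6); (2,8); (3,5); (4,5); (6,8); (7,8)]);
  ([:: (0,1,2); (0,3,5); (0,6,7); (1,4,5)], [:: (0,3); (0,4); (0,5); (0,6); (1,2); (3,5); (4,5); (6,7)]);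
  ([:: (0,1,2); (0,3,5); (0,4,8); (0,6,7); (1,4,5)], [:: (0,1); (0,2); (0,3); (0,5); (0,8); (1,2); (3,5); (4,5); (4,8); (6,7)]);
  ([:: (0,1,2); (0,3,4); (0,6,7); (1,4,5); (2,3,5)], [:: (0,1); (0,2); (0,3); (0,6); (2,3); (2,5); (3,4); (3,5); (4,5); (6,7)]);
  ([:: (0,1,2); (0,3,4); (0,6,8); (1,4,5); (2,3,5)], [:: (0,1); (0,2); (0,3); (0,7); (2,3); (2,5); (3,4); (3,5); (4,5); (6,8)]);
  ([:: (0,1,2); (0,3,4); (0,5,7); (0,6,8); (1,3,5); (2,3,6); (2,4,5)], [:: (0,1); (0,6); (0,7); (0,8); (2,3); (2,4); (2,5); (2,6); (3,4); (3,5); (3,6); (4,5); (5,7); (6,8)]);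
  ([:: (0,1,2); (0,3,4); (0,6,7); (1,3,5); (2,4,5)], [:: (0,1); (0,2); (0,3); (0,6); (2,4); (2,5); (3,4); (3,5); (4,5); (6,7)]);
  ([:: (0,1,2); (0,3,5); (0,4,6); (1,4,5); (2,3,8); (2,5,7)], [:: (0,1); (0,6); (2,3); (2,4); (2,5); (2,7); (2,8); (3,5); (3,8); (4,5); (4,6); (5,7)]);
  ([:: (0,1,2); (0,3,4); (0,5,7); (0,6,8); (1,4,5)], [:: (0,1); (0,2); (0,6); (0,7); (0,8); (1,2); (3,4); (4,5); (5,7); (6,8)]);
  ([:: (0,1,2); (0,3,4); (0,6,8); (1,3,5); (2,4,5); (2,7,8)], [:: (0,1); (0,6); (2,3); (2,4); (2,5); (2,7); (2,8); (3,4); (3,5); (4,5); (6,8); (7,8)]);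
  ([:: (0,1,2); (0,3,4); (0,6,8); (1,3,5); (4,5,6)], [:: (0,1); (0,2); (0,3); (1,2); (3,4); (3,5); (4,5); (4,6); (5,6); (6,8)]);
  ([:: (0,1,2); (0,3,4); (0,5,6); (1,3,5); (2,3,8); (2,4,5)], [:: (0,1); (0,4); (0,7); (2,3); (2,4); (2,5); (2,8); (3,4); (3,5); (3,8); (4,5); (5,6)]);
  ([:: (0,1,2); (0,3,5); (0,4,7); (0,6,8); (1,4,5)], [:: (0,1); (0,2); (0,3); (0,5); (0,6); (1,2); (3,5); (4,5); (4,7); (6,8)]);
  ([:: (0,1,2); (0,3,4); (0,6,8); (1,3,5); (3,6,7); (4,5,6)], [:: (0,1); (0,2); (1,2); (3,4); (3,5); (3,6); (3,7); (4,5); (4,6); (5,6); (6,7); (6,8)]);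
  ([:: (0,1,2); (0,3,5); (0,4,7); (0,6,8); (1,4,5)], [:: (0,1); (0,2); (0,6); (0,7); (0,8); (1,2); (3,5); (4,5); (4,7); (6,8)]);
  ([:: (0,1,2); (0,3,5); (0,4,6); (1,3,4); (2,4,5)], [:: (0,1); (0,7); (0,8); (2,3); (2,4); (2,5); (3,4); (3,5); (4,5); (4,6)]);
  ([:: (0,1,2); (0,3,4); (0,5,7); (1,3,5); (2,4,5)], [:: (0,1); (0,3); (0,6); (1,2); (2,4); (2,5); (3,4); (3,5); (4,5); (5,7)]);
  ([:: (0,1,2); (0,3,4); (0,5,7); (1,4,5); (2,3,5); (2,4,7)], [:: (0,1); (0,3); (0,6); (2,3); (2,4); (2,5); (2,7); (3,4); (3,5); (4,5); (4,7); (5,7)]);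
  ([:: (0,1,2); (0,3,4); (0,5,7); (1,3,5); (2,5,6)], [:: (0,3); (0,4); (1,2); (1,5); (2,5); (2,6); (3,4); (3,5); (5,6); (5,7)]);
  ([:: (0,1,2); (0,3,4); (0,6,8); (1,4,5); (3,7,8)], [:: (0,1); (0,2); (0,6); (1,2); (3,4); (3,7); (3,8); (4,5); (6,8); (7,8)]);
  ([:: (0,1,2); (0,3,4); (0,5,6); (1,4,5); (2,3,5); (2,4,6)], [:: (0,1); (0,3); (0,7); (2,3); (2,4); (2,5); (2,6); (3,4); (3,5); (4,5); (4,6); (5,6)]);
  ([:: (0,1,2); (0,3,4); (0,6,8); (1,3,5); (2,3,6); (2,4,5)], [:: (0,1); (0,2); (0,7); (2,3); (2,4); (2,5); (2,6); (3,4); (3,5); (3,6); (4,5); (6,8)]);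
  ([:: (0,1,2); (0,3,5); (0,6,7); (1,4,5); (3,6,8)], [:: (0,1); (0,2); (0,5); (1,2); (3,5); (3,6); (3,8); (4,5); (6,7); (6,8)]);
  ([:: (0,1,2); (0,3,6); (0,4,5); (0,7,8); (1,3,5)], [:: (0,1); (0,2); (0,5); (0,8); (1,2); (3,5); (3,6); (4,5); (7,8)]);
  ([:: (0,1,2); (0,3,4); (0,6,7); (1,3,5); (2,3,6); (2,4,5)], [:: (0,1); (0,7); (0,8); (2,3); (2,4); (2,5); (2,6); (3,4); (3,5); (3,6); (4,5); (6,7)]);
  ([:: (0,1,2); (0,3,5); (0,4,8); (0,6,7); (1,4,5)], [:: (0,1); (0,2); (0,3); (0,5); (0,6); (1,2); (3,5); (4,5); (4,8); (6,7)]);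
  ([:: (0,1,2); (0,3,4); (0,5,6); (1,3,5); (2,4,5); (2,6,8)], [:: (0,1); (0,7); (2,3); (2,4); (2,5); (2,6); (2,8); (3,4); (3,5); (4,5); (5,6); (6,8)]);
  ([:: (0,1,2); (0,3,4); (0,6,8); (1,4,5)], [:: (0,3); (0,4); (0,5); (0,8); (1,2); (3,4); (4,5); (6,8)]);
  ([:: (0,1,2); (0,3,4); (0,6,7); (1,3,5); (2,4,5)], [:: (0,2); (0,4); (0,5); (1,3); (2,4); (2,5); (3,4); (3,5); (4,5); (6,7)]);
  ([:: (0,1,2); (0,3,4); (0,6,7); (1,3,5); (4,5,6)], [:: (0,1); (0,2); (0,3); (1,2); (3,4); (3,5); (4,5); (4,6); (5,6); (6,7)]);
  ([:: (0,1,2); (0,3,4); (0,7,8); (1,4,5); (2,3,8); (2,4,7)], [:: (0,1); (0,6); (2,3); (2,4); (2,5); (2,7); (2,8); (3,4); (3,8); (4,5); (4,7); (7,8)]);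
  ([:: (0,1,2); (0,3,4); (0,6,7); (1,4,5); (2,3,5); (2,4,6)], [:: (0,1); (0,3); (0,7); (2,3); (2,4); (2,5); (2,6); (3,4); (3,5); (4,5); (4,6); (6,7)]);
  ([:: (0,1,2); (0,3,4); (0,5,6); (1,3,5); (2,3,6); (2,4,5)], [:: (0,1); (0,7); (0,8); (2,3); (2,4); (2,5); (2,6); (3,4); (3,5); (3,6); (4,5); (5,6)]);
  ([:: (0,1,2); (0,3,5); (0,4,6); (1,3,4); (2,4,5); (3,6,7)], [:: (0,1); (0,8); (2,3); (2,4); (2,5); (3,4); (3,5); (3,6); (3,7); (4,5); (4,6); (6,7)]);
  ([:: (0,1,2); (0,3,5); (0,6,8); (1,4,5)], [:: (0,3); (0,4); (0,5); (0,8); (1,2); (3,5); (4,5); (6,8)]);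
  ([:: (0,1,2); (0,3,4); (0,6,8); (1,3,5); (4,5,6)], [:: (0,1); (0,2); (0,7); (1,2); (3,4); (3,5); (4,5); (4,6); (5,6); (6,8)]);
  ([:: (0,1,2); (0,3,4); (0,5,6); (1,3,5); (2,4,6)], [:: (0,3); (0,5); (1,2); (1,4); (2,4); (2,6); (3,4); (3,5); (4,6); (5,6)]);
  ([:: (0,1,2); (0,3,4); (0,6,8); (1,4,5)], [:: (0,1); (0,2); (0,4); (0,8); (1,2); (3,4); (4,5); (6,8)]);
  ([:: (0,1,2); (0,3,4); (0,5,6); (1,3,5); (2,4,5); (3,6,7)], [:: (0,1); (0,8); (2,3); (2,4); (2,5); (3,4); (3,5); (3,6); (3,7); (4,5); (5,6); (6,7)]);
  ([:: (0,1,2); (0,3,4); (0,6,8); (1,3,5); (2,4,5)], [:: (0,1); (0,3); (0,8); (1,2); (2,4); (2,5); (3,4); (3,5); (4,5); (6,8)]);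
  ([:: (0,1,2); (0,3,4); (0,6,7); (1,4,5); (2,3,5)], [:: (0,1); (0,2); (0,3); (0,7); (2,3); (2,5); (3,4); (3,5); (4,5); (6,7)])].
Definition tab3 : seq (seq (seq nat)) := [::
  [:: [:: 111; 82; 14; 14; 7; 7; 7; 7];
   [:: 10; 4; 14; 5; 7; 5; 7; 5];
   [:: 25; 4; 1; 1; 7; 5; 1; 1];
   [:: 28; 4; 1; 1; 38; 5; 1; 1];
   [:: 38; 4; 1; 1; 17; 5; 1; 1];
   [:: 28; 4; 1; 1; 38; 5; 1; 1];
   [:: 38; 4; 1; 1; 17; 5; 1; 1];
   [:: 25; 4; 1; 1; 25; 5; 1; 1];
   [:: 38; 4; 1; 1; 7; 5; 1; 1];
   [:: 28; 4; 1; 1; 38; 5; 1; 1];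
   [:: 38; 4; 1; 1; 17; 5; 1; 1];
   [:: 10; 4; 3; 5; 7; 5; 3; 5];
   [:: 10; 4; 3; 5; 17; 5; 3; 5];
   [:: 10; 4; 3; 5; 64; 5; 3; 5];
   [:: 10; 4; 3; 5; 23; 5; 3; 5];
   [:: 10; 4; 3; 5; 60; 5; 3; 5];
   [:: 10; 4; 14; 5; 7; 5; 7; 5];
   [:: 10; 4; 28; 5; 51; 5; 63; 5];
   [:: 10; 4; 28; 5; 25; 5; 80; 5];
   [:: 10; 4; 3; 5; 7; 5; 3; 5];
   [:: 10; 4; 3; 5; 17; 5; 3; 5];
   [:: 10; 4; 3; 5; 64; 5; 3; 5];
   [:: 10; 4; 3; 5; 17; 5; 3; 5];
   [:: 10; 4; 3; 5; 25; 5; 3; 5];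
   [:: 10; 4; 3; 5; 7; 5; 3; 5];
   [:: 10; 4; 3; 5; 60; 5; 3; 5];
   [:: 10; 4; 14; 5; 7; 5; 7; 5];
   [:: 10; 4; 23; 5; 25; 5; 23; 5];
   [:: 10; 4; 3; 5; 7; 5; 3; 5];
   [:: 10; 4; 3; 5; 17; 5; 3; 5];
   [:: 10; 4; 3; 5; 63; 5; 3; 5];
   [:: 10; 4; 3; 5; 23; 5; 3; 5];
   [:: 10; 4; 3; 5; 7; 5; 3; 5];
   [:: 10; 4; 3; 5; 60; 5; 3; 5];
   [:: 10; 4; 14; 5; 7; 5; 7; 5];
   [:: 10; 4; 28; 5; 51; 5; 80; 5];
   [:: 10; 4; 28; 5; 25; 5; 80; 5];
   [:: 10; 4; 21; 5; 51; 5; 21; 5];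
   [:: 10; 4; 3; 5; 7; 5; 3; 5];
   [:: 10; 4; 3; 5; 17; 5; 3; 5];
   [:: 10; 4; 3; 5; 63; 5; 3; 5];
   [:: 10; 4; 3; 5; 17; 5; 3; 5];
   [:: 10; 4; 3; 5; 25; 5; 3; 5];
   [:: 10; 4; 3; 5; 7; 5; 3; 5];
   [:: 10; 4; 3; 5; 60; 5; 3; 5];
   [:: 10; 4; 3; 5; 17; 5; 3; 5];
   [:: 26; 0; 14; 0; 7; 0; 7; 0];
   [:: 23; 0; 3; 0; 7; 0; 3; 0];
   [:: 34; 2; 3; 2; 17; 2; 3; 2];
   [:: 34; 2; 3; 2; 39; 2; 3; 2];
   [:: 23; 0; 3; 0; 23; 0; 3; 0];
   [:: 34; 2; 3; 2; 39; 2; 3; 2];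
   [:: 34; 0; 14; 0; 7; 0; 7; 0];
   [:: 34; 2; 65; 2; 39; 2; 63; 2];
   [:: 34; 0; 65; 0; 39; 0; 164; 0];
   [:: 26; 0; 14; 0; 7; 0; 7; 0];
   [:: 26; 0; 23; 0; 26; 0; 23; 0];
   [:: 34; 0; 14; 0; 7; 0; 7; 0];
   [:: 34; 2; 65; 2; 39; 2; 92; 2];
   [:: 34; 0; 65; 0; 39; 0; 92; 0];
   [:: 34; 2; 21; 2; 39; 2; 21; 2];
   [:: 10; 0; 14; 0; 7; 0; 7; 0];
   [:: 38; 0; 1; 0; 7; 0; 1; 0];
   [:: 38; 4; 1; 1; 38; 5; 1; 1];
   [:: 38; 4; 1; 1; 17; 5; 1; 1];
   [:: 38; 4; 1; 1; 38; 5; 1; 1];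
   [:: 38; 4; 1; 1; 17; 5; 1; 1];
   [:: 38; 0; 1; 0; 38; 0; 1; 0];
   [:: 38; 4; 1; 1; 7; 5; 1; 1];
   [:: 38; 4; 1; 1; 38; 5; 1; 1];
   [:: 38; 4; 1; 1; 17; 5; 1; 1];
   [:: 10; 0; 3; 0; 7; 0; 3; 0];
   [:: 10; 2; 3; 2; 17; 2; 3; 2];
   [:: 10; 2; 3; 2; 64; 2; 3; 2];
   [:: 10; 0; 3; 0; 23; 0; 3; 0];
   [:: 10; 2; 3; 2; 60; 2; 3; 2];
   [:: 56; 0; 9; 0; 7; 0; 7; 0];
   [:: 77; 4; 70; 5; 54; 5; 70; 5];
   [:: 77; 4; 9; 5; 17; 5; 9; 5];
   [:: 77; 4; 70; 5; 17; 5; 70; 5];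
   [:: 77; 4; 9; 5; 64; 5; 9; 5];
   [:: 77; 4; 70; 5; 54; 5; 70; 5];
   [:: 77; 4; 9; 5; 17; 5; 9; 5];
   [:: 137; 0; 9; 0; 177; 0; 9; 0];
   [:: 56; 4; 56; 5; 54; 5; 56; 5];
   [:: 137; 4; 9; 5; 7; 5; 7; 5];
   [:: 135; 4; 9; 5; 60; 5; 9; 5];
   [:: 148; 4; 71; 5; 54; 5; 119; 5];
   [:: 160; 4; 9; 5; 17; 5; 9; 5];
   [:: 10; 0; 14; 0; 7; 0; 7; 0];
   [:: 10; 2; 88; 2; 63; 2; 63; 2];
   [:: 10; 0; 159; 0; 178; 0; 184; 0];
   [:: 43; 0; 9; 0; 7; 0; 7; 0];
   [:: 77; 4; 37; 5; 54; 5; 37; 5];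
   [:: 77; 4; 9; 5; 17; 5; 9; 5];
   [:: 77; 4; 9; 5; 64; 5; 9; 5];
   [:: 77; 4; 37; 5; 54; 5; 37; 5];
   [:: 77; 4; 9; 5; 17; 5; 9; 5];
   [:: 43; 0; 9; 0; 43; 0; 9; 0];
   [:: 56; 4; 37; 5; 54; 5; 37; 5];
   [:: 93; 4; 9; 5; 7; 5; 7; 5];
   [:: 135; 4; 9; 5; 60; 5; 9; 5];
   [:: 160; 4; 9; 5; 17; 5; 9; 5];
   [:: 10; 0; 3; 0; 7; 0; 3; 0];
   [:: 10; 2; 3; 2; 17; 2; 3; 2];
   [:: 10; 2; 3; 2; 64; 2; 3; 2];
   [:: 10; 2; 3; 2; 17; 2; 3; 2];
   [:: 10; 0; 3; 0; 26; 0; 3; 0];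
   [:: 10; 2; 3; 2; 7; 2; 3; 2];
   [:: 10; 2; 3; 2; 60; 2; 3; 2];
   [:: 10; 0; 14; 0; 7; 0; 7; 0];
   [:: 10; 0; 23; 0; 26; 0; 23; 0];
   [:: 56; 0; 1; 0; 7; 0; 1; 0];
   [:: 83; 4; 1; 1; 54; 5; 1; 1];
   [:: 83; 4; 1; 1; 17; 5; 1; 1];
   [:: 83; 4; 1; 1; 83; 5; 1; 1];
   [:: 83; 4; 1; 1; 17; 5; 1; 1];
   [:: 83; 0; 1; 0; 83; 0; 1; 0];
   [:: 56; 4; 1; 1; 54; 5; 1; 1];
   [:: 83; 4; 1; 1; 7; 5; 1; 1];
   [:: 83; 4; 1; 1; 60; 5; 1; 1];
   [:: 83; 4; 1; 1; 17; 5; 1; 1];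
   [:: 10; 0; 3; 0; 7; 0; 3; 0];
   [:: 10; 2; 3; 2; 17; 2; 3; 2];
   [:: 10; 2; 3; 2; 63; 2; 3; 2];
   [:: 10; 0; 3; 0; 23; 0; 3; 0];
   [:: 10; 2; 3; 2; 7; 2; 3; 2];
   [:: 10; 2; 3; 2; 60; 2; 3; 2];
   [:: 10; 0; 14; 0; 7; 0; 7; 0];
   [:: 10; 2; 127; 2; 92; 2; 92; 2];
   [:: 10; 0; 127; 0; 92; 0; 92; 0];
   [:: 10; 2; 21; 2; 60; 2; 21; 2];
   [:: 43; 0; 9; 0; 7; 0; 7; 0];
   [:: 84; 4; 37; 5; 54; 5; 37; 5];
   [:: 84; 4; 9; 5; 17; 5; 9; 5];
   [:: 84; 4; 9; 5; 84; 5; 9; 5];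
   [:: 84; 4; 37; 5; 54; 5; 37; 5];
   [:: 84; 4; 9; 5; 17; 5; 9; 5];
   [:: 43; 0; 9; 0; 43; 0; 9; 0];
   [:: 56; 4; 37; 5; 54; 5; 37; 5];
   [:: 84; 4; 9; 5; 7; 5; 7; 5];
   [:: 84; 4; 9; 5; 60; 5; 9; 5];
   [:: 84; 4; 37; 5; 54; 5; 37; 5];
   [:: 84; 4; 9; 5; 17; 5; 9; 5];
   [:: 10; 0; 3; 0; 7; 0; 3; 0];
   [:: 10; 2; 3; 2; 17; 2; 3; 2];
   [:: 10; 2; 3; 2; 63; 2; 3; 2];
   [:: 10; 2; 3; 2; 17; 2; 3; 2];
   [:: 10; 0; 3; 0; 26; 0; 3; 0];
   [:: 10; 2; 3; 2; 7; 2; 3; 2];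
   [:: 10; 2; 3; 2; 60; 2; 3; 2];
   [:: 10; 2; 3; 2; 17; 2; 3; 2];
   [:: 89; 82; 14; 14; 7; 7; 7; 7];
   [:: 89; 82; 14; 14; 7; 7; 7; 7];
   [:: 89; 82; 28; 134; 39; 125; 63; 125];
   [:: 89; 82; 28; 188; 39; 125; 125; 125];
   [:: 89; 82; 14; 14; 7; 7; 7; 7];
   [:: 89; 82; 23; 158; 39; 121; 23; 121];
   [:: 10; 4; 14; 5; 7; 5; 7; 5];
   [:: 28; 4; 1; 1; 7; 5; 1; 1];
   [:: 28; 4; 1; 1; 38; 5; 1; 1];
   [:: 29; 4; 1; 1; 17; 5; 1; 1];
   [:: 28; 4; 1; 1; 38; 5; 1; 1];
   [:: 29; 4; 1; 1; 17; 5; 1; 1];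
   [:: 28; 4; 1; 1; 38; 5; 1; 1];
   [:: 29; 4; 1; 1; 7; 5; 1; 1];
   [:: 28; 4; 1; 1; 38; 5; 1; 1];
   [:: 29; 4; 1; 1; 17; 5; 1; 1];
   [:: 10; 4; 3; 5; 7; 5; 3; 5];
   [:: 10; 4; 3; 5; 17; 5; 3; 5];
   [:: 10; 4; 3; 5; 64; 5; 3; 5];
   [:: 10; 4; 3; 5; 23; 5; 3; 5];
   [:: 10; 4; 3; 5; 60; 5; 3; 5];
   [:: 10; 4; 14; 5; 7; 5; 7; 5];
   [:: 10; 4; 28; 5; 51; 5; 63; 5];
   [:: 10; 4; 28; 5; 51; 5; 187; 5];
   [:: 28; 4; 9; 5; 7; 5; 7; 5];
   [:: 28; 4; 28; 5; 51; 5; 37; 5];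
   [:: 29; 4; 9; 5; 17; 5; 9; 5];
   [:: 28; 4; 9; 5; 51; 5; 9; 5];
   [:: 28; 4; 28; 5; 51; 5; 37; 5];
   [:: 29; 4; 9; 5; 17; 5; 9; 5];
   [:: 28; 4; 9; 5; 43; 5; 9; 5];
   [:: 28; 4; 28; 5; 51; 5; 37; 5];
   [:: 29; 4; 9; 5; 7; 5; 7; 5];
   [:: 28; 4; 9; 5; 51; 5; 9; 5];
   [:: 29; 4; 9; 5; 17; 5; 9; 5];
   [:: 10; 4; 3; 5; 7; 5; 3; 5];
   [:: 10; 4; 3; 5; 17; 5; 3; 5];
   [:: 10; 4; 3; 5; 64; 5; 3; 5];
   [:: 10; 4; 3; 5; 17; 5; 3; 5];
   [:: 10; 4; 3; 5; 118; 5; 3; 5];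
   [:: 10; 4; 3; 5; 7; 5; 3; 5];
   [:: 10; 4; 3; 5; 60; 5; 3; 5];
   [:: 10; 4; 14; 5; 7; 5; 7; 5];
   [:: 10; 4; 23; 5; 43; 5; 23; 5];
   [:: 28; 4; 1; 1; 7; 5; 1; 1];
   [:: 28; 4; 1; 1; 51; 5; 1; 1];
   [:: 29; 4; 1; 1; 17; 5; 1; 1];
   [:: 28; 4; 1; 1; 51; 5; 1; 1];
   [:: 29; 4; 1; 1; 17; 5; 1; 1];
   [:: 28; 4; 1; 1; 51; 5; 1; 1];
   [:: 28; 4; 1; 1; 51; 5; 1; 1];
   [:: 29; 4; 1; 1; 7; 5; 1; 1];
   [:: 28; 4; 1; 1; 51; 5; 1; 1];
   [:: 29; 4; 1; 1; 17; 5; 1; 1];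
   [:: 10; 4; 3; 5; 7; 5; 3; 5];
   [:: 10; 4; 3; 5; 17; 5; 3; 5];
   [:: 10; 4; 3; 5; 63; 5; 3; 5];
   [:: 10; 4; 3; 5; 23; 5; 3; 5];
   [:: 10; 4; 3; 5; 7; 5; 3; 5];
   [:: 10; 4; 3; 5; 60; 5; 3; 5];
   [:: 10; 4; 14; 5; 7; 5; 7; 5];
   [:: 10; 4; 28; 5; 51; 5; 92; 5];
   [:: 10; 4; 28; 5; 51; 5; 92; 5];
   [:: 10; 4; 21; 5; 51; 5; 21; 5];
   [:: 10; 4; 3; 5; 7; 5; 3; 5];
   [:: 10; 4; 3; 5; 17; 5; 3; 5];
   [:: 10; 4; 3; 5; 63; 5; 3; 5];
   [:: 10; 4; 3; 5; 17; 5; 3; 5];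
   [:: 10; 4; 3; 5; 118; 5; 3; 5];
   [:: 10; 4; 3; 5; 7; 5; 3; 5];
   [:: 10; 4; 3; 5; 60; 5; 3; 5];
   [:: 10; 4; 3; 5; 17; 5; 3; 5];
   [:: 26; 0; 14; 0; 7; 0; 7; 0];
   [:: 23; 0; 3; 0; 7; 0; 3; 0];
   [:: 34; 2; 3; 2; 17; 2; 3; 2];
   [:: 34; 2; 3; 2; 39; 2; 3; 2];
   [:: 23; 0; 3; 0; 23; 0; 3; 0];
   [:: 34; 2; 3; 2; 39; 2; 3; 2];
   [:: 34; 0; 14; 0; 7; 0; 7; 0];
   [:: 34; 2; 65; 2; 39; 2; 63; 2];
   [:: 34; 0; 65; 0; 39; 0; 182; 0];
   [:: 26; 0; 3; 0; 7; 0; 3; 0];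
   [:: 34; 2; 3; 2; 17; 2; 3; 2];
   [:: 34; 2; 3; 2; 39; 2; 3; 2];
   [:: 34; 2; 3; 2; 17; 2; 3; 2];
   [:: 26; 0; 3; 0; 26; 0; 3; 0];
   [:: 34; 2; 3; 2; 7; 2; 3; 2];
   [:: 34; 2; 3; 2; 39; 2; 3; 2];
   [:: 26; 0; 14; 0; 7; 0; 7; 0];
   [:: 26; 0; 23; 0; 26; 0; 23; 0];
   [:: 23; 0; 3; 0; 7; 0; 3; 0];
   [:: 34; 2; 3; 2; 17; 2; 3; 2];
   [:: 34; 2; 3; 2; 39; 2; 3; 2];
   [:: 23; 0; 3; 0; 23; 0; 3; 0];
   [:: 34; 2; 3; 2; 7; 2; 3; 2];
   [:: 34; 2; 3; 2; 39; 2; 3; 2];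
   [:: 34; 0; 14; 0; 7; 0; 7; 0];
   [:: 34; 2; 65; 2; 39; 2; 92; 2];
   [:: 34; 0; 65; 0; 39; 0; 92; 0];
   [:: 34; 2; 21; 2; 39; 2; 21; 2];
   [:: 10; 0; 14; 0; 7; 0; 7; 0];
   [:: 25; 0; 1; 0; 7; 0; 1; 0];
   [:: 38; 4; 1; 1; 38; 5; 1; 1];
   [:: 29; 4; 1; 1; 17; 5; 1; 1];
   [:: 38; 4; 1; 1; 38; 5; 1; 1];
   [:: 29; 4; 1; 1; 17; 5; 1; 1];
   [:: 25; 0; 1; 0; 25; 0; 1; 0];
   [:: 29; 4; 1; 1; 7; 5; 1; 1];
   [:: 38; 4; 1; 1; 38; 5; 1; 1];
   [:: 29; 4; 1; 1; 17; 5; 1; 1];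
   [:: 10; 0; 3; 0; 7; 0; 3; 0];
   [:: 10; 2; 3; 2; 17; 2; 3; 2];
   [:: 10; 2; 3; 2; 64; 2; 3; 2];
   [:: 10; 0; 3; 0; 23; 0; 3; 0];
   [:: 10; 2; 3; 2; 60; 2; 3; 2];
   [:: 25; 0; 9; 0; 7; 0; 7; 0];
   [:: 72; 4; 70; 5; 54; 5; 70; 5];
   [:: 29; 4; 9; 5; 17; 5; 9; 5];
   [:: 29; 4; 70; 5; 17; 5; 70; 5];
   [:: 77; 4; 9; 5; 64; 5; 9; 5];
   [:: 72; 4; 70; 5; 54; 5; 70; 5];
   [:: 29; 4; 9; 5; 17; 5; 9; 5];
   [:: 25; 0; 9; 0; 25; 0; 9; 0];
   [:: 56; 4; 56; 5; 54; 5; 56; 5];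
   [:: 29; 4; 9; 5; 7; 5; 7; 5];
   [:: 135; 4; 9; 5; 60; 5; 9; 5];
   [:: 72; 4; 71; 5; 54; 5; 119; 5];
   [:: 29; 4; 9; 5; 17; 5; 9; 5];
   [:: 10; 0; 14; 0; 7; 0; 7; 0];
   [:: 10; 2; 88; 2; 63; 2; 63; 2];
   [:: 10; 0; 159; 0; 25; 0; 162; 0];
   [:: 25; 0; 9; 0; 7; 0; 7; 0];
   [:: 77; 4; 37; 5; 54; 5; 37; 5];
   [:: 29; 4; 9; 5; 17; 5; 9; 5];
   [:: 77; 4; 9; 5; 64; 5; 9; 5];
   [:: 77; 4; 37; 5; 54; 5; 37; 5];
   [:: 29; 4; 9; 5; 17; 5; 9; 5];
   [:: 25; 0; 9; 0; 25; 0; 9; 0];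
   [:: 56; 4; 37; 5; 54; 5; 37; 5];
   [:: 29; 4; 9; 5; 7; 5; 7; 5];
   [:: 135; 4; 9; 5; 60; 5; 9; 5];
   [:: 29; 4; 9; 5; 17; 5; 9; 5];
   [:: 10; 0; 3; 0; 7; 0; 3; 0];
   [:: 10; 2; 3; 2; 17; 2; 3; 2];
   [:: 10; 2; 3; 2; 64; 2; 3; 2];
   [:: 10; 2; 3; 2; 17; 2; 3; 2];
   [:: 10; 0; 3; 0; 25; 0; 3; 0];
   [:: 10; 2; 3; 2; 7; 2; 3; 2];
   [:: 10; 2; 3; 2; 60; 2; 3; 2];
   [:: 25; 0; 9; 0; 7; 0; 7; 0];
   [:: 72; 4; 70; 5; 54; 5; 70; 5];
   [:: 29; 4; 9; 5; 17; 5; 9; 5];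
   [:: 29; 4; 70; 5; 17; 5; 70; 5];
   [:: 77; 4; 9; 5; 64; 5; 9; 5];
   [:: 72; 4; 70; 5; 54; 5; 70; 5];
   [:: 29; 4; 9; 5; 17; 5; 9; 5];
   [:: 29; 4; 70; 5; 17; 5; 70; 5];
   [:: 25; 0; 9; 0; 25; 0; 9; 0];
   [:: 56; 4; 56; 5; 54; 5; 56; 5];
   [:: 29; 4; 9; 5; 7; 5; 7; 5];
   [:: 29; 4; 71; 5; 17; 5; 122; 5];
   [:: 135; 4; 9; 5; 60; 5; 9; 5];
   [:: 72; 4; 71; 5; 54; 5; 148; 5];
   [:: 29; 4; 9; 5; 17; 5; 9; 5];
   [:: 10; 0; 14; 0; 7; 0; 7; 0];
   [:: 10; 0; 23; 0; 25; 0; 23; 0];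
   [:: 25; 0; 1; 0; 7; 0; 1; 0];
   [:: 83; 4; 1; 1; 54; 5; 1; 1];
   [:: 29; 4; 1; 1; 17; 5; 1; 1];
   [:: 83; 4; 1; 1; 83; 5; 1; 1];
   [:: 29; 4; 1; 1; 17; 5; 1; 1];
   [:: 25; 0; 1; 0; 25; 0; 1; 0];
   [:: 56; 4; 1; 1; 54; 5; 1; 1];
   [:: 29; 4; 1; 1; 7; 5; 1; 1];
   [:: 83; 4; 1; 1; 60; 5; 1; 1];
   [:: 29; 4; 1; 1; 17; 5; 1; 1];
   [:: 10; 0; 3; 0; 7; 0; 3; 0];
   [:: 10; 2; 3; 2; 17; 2; 3; 2];
   [:: 10; 2; 3; 2; 63; 2; 3; 2];
   [:: 10; 0; 3; 0; 23; 0; 3; 0];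
   [:: 10; 2; 3; 2; 7; 2; 3; 2];
   [:: 10; 2; 3; 2; 60; 2; 3; 2];
   [:: 25; 0; 9; 0; 7; 0; 7; 0];
   [:: 72; 4; 71; 5; 54; 5; 74; 5];
   [:: 29; 4; 9; 5; 17; 5; 9; 5];
   [:: 29; 4; 71; 5; 17; 5; 74; 5];
   [:: 74; 4; 9; 5; 74; 5; 9; 5];
   [:: 72; 4; 71; 5; 54; 5; 74; 5];
   [:: 29; 4; 9; 5; 17; 5; 9; 5];
   [:: 25; 0; 9; 0; 25; 0; 9; 0];
   [:: 56; 4; 56; 5; 54; 5; 56; 5];
   [:: 29; 4; 9; 5; 7; 5; 7; 5];
   [:: 29; 4; 71; 5; 17; 5; 74; 5];
   [:: 74; 4; 9; 5; 60; 5; 9; 5];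
   [:: 72; 4; 71; 5; 54; 5; 74; 5];
   [:: 29; 4; 9; 5; 17; 5; 9; 5];
   [:: 10; 0; 14; 0; 7; 0; 7; 0];
   [:: 10; 2; 127; 2; 92; 2; 92; 2];
   [:: 10; 0; 127; 0; 25; 0; 92; 0];
   [:: 10; 2; 21; 2; 60; 2; 21; 2];
   [:: 25; 0; 9; 0; 7; 0; 7; 0];
   [:: 84; 4; 37; 5; 54; 5; 37; 5];
   [:: 29; 4; 9; 5; 17; 5; 9; 5];
   [:: 84; 4; 9; 5; 84; 5; 9; 5];
   [:: 84; 4; 37; 5; 54; 5; 37; 5];
   [:: 29; 4; 9; 5; 17; 5; 9; 5];
   [:: 25; 0; 9; 0; 25; 0; 9; 0];
   [:: 56; 4; 37; 5; 54; 5; 37; 5];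
   [:: 29; 4; 9; 5; 7; 5; 7; 5];
   [:: 84; 4; 9; 5; 60; 5; 9; 5];
   [:: 84; 4; 37; 5; 54; 5; 37; 5];
   [:: 29; 4; 9; 5; 17; 5; 9; 5];
   [:: 10; 0; 3; 0; 7; 0; 3; 0];
   [:: 10; 2; 3; 2; 17; 2; 3; 2];
   [:: 10; 2; 3; 2; 63; 2; 3; 2];
   [:: 10; 2; 3; 2; 17; 2; 3; 2];
   [:: 10; 0; 3; 0; 25; 0; 3; 0];
   [:: 10; 2; 3; 2; 7; 2; 3; 2];
   [:: 10; 2; 3; 2; 60; 2; 3; 2];
   [:: 10; 2; 3; 2; 17; 2; 3; 2];
   [:: 121; 82; 14; 14; 7; 7; 7; 7];
   [:: 145; 82; 14; 14; 7; 7; 7; 7];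
   [:: 145; 82; 23; 158; 39; 118; 23; 121];
   [:: 10; 4; 14; 5; 7; 5; 7; 5];
   [:: 25; 4; 1; 1; 7; 5; 1; 1];
   [:: 28; 4; 1; 1; 38; 5; 1; 1];
   [:: 38; 4; 1; 1; 17; 5; 1; 1];
   [:: 28; 4; 1; 1; 38; 5; 1; 1];
   [:: 38; 4; 1; 1; 17; 5; 1; 1];
   [:: 25; 4; 1; 1; 25; 5; 1; 1];
   [:: 38; 4; 1; 1; 7; 5; 1; 1];
   [:: 28; 4; 1; 1; 38; 5; 1; 1];
   [:: 38; 4; 1; 1; 17; 5; 1; 1];
   [:: 10; 4; 3; 5; 7; 5; 3; 5];
   [:: 10; 4; 3; 5; 17; 5; 3; 5];
   [:: 10; 4; 3; 5; 133; 5; 3; 5];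
   [:: 10; 4; 3; 5; 23; 5; 3; 5];
   [:: 10; 4; 3; 5; 60; 5; 3; 5];
   [:: 10; 4; 14; 5; 7; 5; 7; 5];
   [:: 10; 4; 28; 5; 51; 5; 63; 5];
   [:: 10; 4; 28; 5; 25; 5; 175; 5];
   [:: 10; 4; 3; 5; 7; 5; 3; 5];
   [:: 10; 4; 3; 5; 17; 5; 3; 5];
   [:: 10; 4; 3; 5; 133; 5; 3; 5];
   [:: 10; 4; 3; 5; 17; 5; 3; 5];
   [:: 10; 4; 3; 5; 25; 5; 3; 5];
   [:: 10; 4; 3; 5; 7; 5; 3; 5];
   [:: 10; 4; 3; 5; 60; 5; 3; 5];
   [:: 10; 4; 14; 5; 7; 5; 7; 5];
   [:: 10; 4; 23; 5; 25; 5; 23; 5];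
   [:: 25; 4; 1; 1; 7; 5; 1; 1];
   [:: 28; 4; 1; 1; 51; 5; 1; 1];
   [:: 115; 4; 1; 1; 17; 5; 1; 1];
   [:: 28; 4; 1; 1; 51; 5; 1; 1];
   [:: 115; 4; 1; 1; 17; 5; 1; 1];
   [:: 25; 4; 1; 1; 25; 5; 1; 1];
   [:: 28; 4; 1; 1; 51; 5; 1; 1];
   [:: 115; 4; 1; 1; 7; 5; 1; 1];
   [:: 28; 4; 1; 1; 51; 5; 1; 1];
   [:: 115; 4; 1; 1; 17; 5; 1; 1];
   [:: 10; 4; 3; 5; 7; 5; 3; 5];
   [:: 10; 4; 3; 5; 17; 5; 3; 5];
   [:: 10; 4; 3; 5; 63; 5; 3; 5];
   [:: 10; 4; 3; 5; 23; 5; 3; 5];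
   [:: 10; 4; 3; 5; 7; 5; 3; 5];
   [:: 10; 4; 3; 5; 60; 5; 3; 5];
   [:: 10; 4; 14; 5; 7; 5; 7; 5];
   [:: 10; 4; 28; 5; 51; 5; 92; 5];
   [:: 10; 4; 28; 5; 25; 5; 92; 5];
   [:: 10; 4; 21; 5; 51; 5; 21; 5];
   [:: 10; 4; 3; 5; 7; 5; 3; 5];
   [:: 10; 4; 3; 5; 17; 5; 3; 5];
   [:: 10; 4; 3; 5; 63; 5; 3; 5];
   [:: 10; 4; 3; 5; 17; 5; 3; 5];
   [:: 10; 4; 3; 5; 25; 5; 3; 5];
   [:: 10; 4; 3; 5; 7; 5; 3; 5];
   [:: 10; 4; 3; 5; 60; 5; 3; 5];
   [:: 10; 4; 3; 5; 17; 5; 3; 5];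
   [:: 26; 0; 14; 0; 7; 0; 7; 0];
   [:: 23; 0; 3; 0; 7; 0; 3; 0];
   [:: 34; 2; 3; 2; 17; 2; 3; 2];
   [:: 34; 2; 3; 2; 39; 2; 3; 2];
   [:: 23; 0; 3; 0; 23; 0; 3; 0];
   [:: 34; 2; 3; 2; 39; 2; 3; 2];
   [:: 34; 0; 14; 0; 7; 0; 7; 0];
   [:: 34; 2; 65; 2; 39; 2; 63; 2];
   [:: 34; 0; 65; 0; 39; 0; 125; 0];
   [:: 26; 0; 14; 0; 7; 0; 7; 0];
   [:: 26; 0; 23; 0; 26; 0; 23; 0];
   [:: 23; 0; 3; 0; 7; 0; 3; 0];
   [:: 34; 2; 3; 2; 17; 2; 3; 2];
   [:: 34; 2; 3; 2; 39; 2; 3; 2];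
   [:: 23; 0; 3; 0; 23; 0; 3; 0];
   [:: 34; 2; 3; 2; 7; 2; 3; 2];
   [:: 34; 2; 3; 2; 39; 2; 3; 2];
   [:: 34; 0; 14; 0; 7; 0; 7; 0];
   [:: 34; 2; 65; 2; 39; 2; 92; 2];
   [:: 34; 0; 65; 0; 39; 0; 92; 0];
   [:: 34; 2; 21; 2; 39; 2; 21; 2];
   [:: 10; 0; 14; 0; 7; 0; 7; 0];
   [:: 38; 0; 1; 0; 7; 0; 1; 0];
   [:: 38; 4; 1; 1; 38; 5; 1; 1];
   [:: 38; 4; 1; 1; 17; 5; 1; 1];
   [:: 38; 4; 1; 1; 38; 5; 1; 1];
   [:: 38; 4; 1; 1; 17; 5; 1; 1];
   [:: 38; 0; 1; 0; 38; 0; 1; 0];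
   [:: 38; 4; 1; 1; 7; 5; 1; 1];
   [:: 38; 4; 1; 1; 38; 5; 1; 1];
   [:: 38; 4; 1; 1; 17; 5; 1; 1];
   [:: 10; 0; 3; 0; 7; 0; 3; 0];
   [:: 10; 2; 3; 2; 17; 2; 3; 2];
   [:: 10; 2; 3; 2; 80; 2; 3; 2];
   [:: 10; 0; 3; 0; 23; 0; 3; 0];
   [:: 10; 2; 3; 2; 60; 2; 3; 2];
   [:: 56; 0; 9; 0; 7; 0; 7; 0];
   [:: 80; 4; 70; 5; 54; 5; 70; 5];
   [:: 80; 4; 9; 5; 17; 5; 9; 5];
   [:: 80; 4; 70; 5; 17; 5; 70; 5];
   [:: 80; 4; 9; 5; 80; 5; 9; 5];
   [:: 80; 4; 70; 5; 54; 5; 70; 5];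
   [:: 80; 4; 9; 5; 17; 5; 9; 5];
   [:: 80; 0; 9; 0; 80; 0; 9; 0];
   [:: 56; 4; 56; 5; 54; 5; 56; 5];
   [:: 80; 4; 9; 5; 7; 5; 7; 5];
   [:: 80; 4; 9; 5; 60; 5; 9; 5];
   [:: 80; 4; 71; 5; 54; 5; 80; 5];
   [:: 80; 4; 9; 5; 17; 5; 9; 5];
   [:: 10; 0; 14; 0; 7; 0; 7; 0];
   [:: 10; 2; 80; 2; 63; 2; 63; 2];
   [:: 10; 0; 80; 0; 80; 0; 80; 0];
   [:: 43; 0; 9; 0; 7; 0; 7; 0];
   [:: 80; 4; 37; 5; 54; 5; 37; 5];
   [:: 80; 4; 9; 5; 17; 5; 9; 5];
   [:: 80; 4; 9; 5; 80; 5; 9; 5];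
   [:: 80; 4; 37; 5; 54; 5; 37; 5];
   [:: 80; 4; 9; 5; 17; 5; 9; 5];
   [:: 43; 0; 9; 0; 43; 0; 9; 0];
   [:: 56; 4; 37; 5; 54; 5; 37; 5];
   [:: 80; 4; 9; 5; 7; 5; 7; 5];
   [:: 80; 4; 9; 5; 60; 5; 9; 5];
   [:: 80; 4; 9; 5; 17; 5; 9; 5];
   [:: 10; 0; 3; 0; 7; 0; 3; 0];
   [:: 10; 2; 3; 2; 17; 2; 3; 2];
   [:: 10; 2; 3; 2; 80; 2; 3; 2];
   [:: 10; 2; 3; 2; 17; 2; 3; 2];
   [:: 10; 0; 3; 0; 26; 0; 3; 0];
   [:: 10; 2; 3; 2; 7; 2; 3; 2];
   [:: 10; 2; 3; 2; 60; 2; 3; 2];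
   [:: 10; 0; 14; 0; 7; 0; 7; 0];
   [:: 10; 0; 23; 0; 26; 0; 23; 0];
   [:: 56; 0; 1; 0; 7; 0; 1; 0];
   [:: 80; 4; 1; 1; 54; 5; 1; 1];
   [:: 80; 4; 1; 1; 17; 5; 1; 1];
   [:: 80; 4; 1; 1; 80; 5; 1; 1];
   [:: 80; 4; 1; 1; 17; 5; 1; 1];
   [:: 80; 0; 1; 0; 80; 0; 1; 0];
   [:: 56; 4; 1; 1; 54; 5; 1; 1];
   [:: 80; 4; 1; 1; 7; 5; 1; 1];
   [:: 80; 4; 1; 1; 60; 5; 1; 1];
   [:: 80; 4; 1; 1; 17; 5; 1; 1];
   [:: 10; 0; 3; 0; 7; 0; 3; 0];
   [:: 10; 2; 3; 2; 17; 2; 3; 2];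
   [:: 10; 2; 3; 2; 63; 2; 3; 2];
   [:: 10; 0; 3; 0; 23; 0; 3; 0];
   [:: 10; 2; 3; 2; 7; 2; 3; 2];
   [:: 10; 2; 3; 2; 60; 2; 3; 2];
   [:: 56; 0; 9; 0; 7; 0; 7; 0];
   [:: 74; 4; 71; 5; 54; 5; 74; 5];
   [:: 74; 4; 9; 5; 17; 5; 9; 5];
   [:: 74; 4; 71; 5; 17; 5; 74; 5];
   [:: 74; 4; 9; 5; 74; 5; 9; 5];
   [:: 74; 4; 71; 5; 54; 5; 74; 5];
   [:: 74; 4; 9; 5; 17; 5; 9; 5];
   [:: 74; 0; 9; 0; 74; 0; 9; 0];
   [:: 56; 4; 56; 5; 54; 5; 56; 5];
   [:: 74; 4; 9; 5; 7; 5; 7; 5];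
   [:: 74; 4; 71; 5; 17; 5; 74; 5];
   [:: 74; 4; 9; 5; 60; 5; 9; 5];
   [:: 74; 4; 71; 5; 54; 5; 74; 5];
   [:: 74; 4; 9; 5; 17; 5; 9; 5];
   [:: 10; 0; 14; 0; 7; 0; 7; 0];
   [:: 10; 2; 80; 2; 80; 2; 80; 2];
   [:: 10; 0; 80; 0; 80; 0; 80; 0];
   [:: 10; 2; 21; 2; 60; 2; 21; 2];
   [:: 43; 0; 9; 0; 7; 0; 7; 0];
   [:: 80; 4; 37; 5; 54; 5; 37; 5];
   [:: 80; 4; 9; 5; 17; 5; 9; 5];
   [:: 80; 4; 9; 5; 80; 5; 9; 5];
   [:: 80; 4; 37; 5; 54; 5; 37; 5];
   [:: 80; 4; 9; 5; 17; 5; 9; 5];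
   [:: 43; 0; 9; 0; 43; 0; 9; 0];
   [:: 56; 4; 37; 5; 54; 5; 37; 5];
   [:: 80; 4; 9; 5; 7; 5; 7; 5];
   [:: 80; 4; 9; 5; 60; 5; 9; 5];
   [:: 80; 4; 37; 5; 54; 5; 37; 5];
   [:: 80; 4; 9; 5; 17; 5; 9; 5];
   [:: 10; 0; 3; 0; 7; 0; 3; 0];
   [:: 10; 2; 3; 2; 17; 2; 3; 2];
   [:: 10; 2; 3; 2; 63; 2; 3; 2];
   [:: 10; 2; 3; 2; 17; 2; 3; 2];
   [:: 10; 0; 3; 0; 26; 0; 3; 0];
   [:: 10; 2; 3; 2; 7; 2; 3; 2];
   [:: 10; 2; 3; 2; 60; 2; 3; 2];
   [:: 10; 2; 3; 2; 17; 2; 3; 2];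
   [:: 89; 82; 14; 14; 7; 7; 7; 7];
   [:: 89; 82; 14; 14; 7; 7; 7; 7];
   [:: 89; 82; 28; 147; 39; 173; 63; 147];
   [:: 89; 82; 28; 170; 39; 173; 162; 170];
   [:: 89; 82; 14; 14; 7; 7; 7; 7];
   [:: 89; 82; 23; 158; 39; 121; 23; 121];
   [:: 89; 82; 14; 14; 7; 7; 7; 7];
   [:: 89; 82; 28; 127; 39; 92; 92; 92];
   [:: 89; 82; 28; 127; 39; 92; 92; 92];
   [:: 89; 82; 21; 21; 39; 60; 21; 21];
   [:: 10; 4; 14; 5; 7; 5; 7; 5];
   [:: 28; 4; 1; 1; 7; 5; 1; 1];
   [:: 28; 4; 1; 1; 38; 5; 1; 1];
   [:: 29; 4; 1; 1; 17; 5; 1; 1];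
   [:: 28; 4; 1; 1; 38; 5; 1; 1];
   [:: 29; 4; 1; 1; 17; 5; 1; 1];
   [:: 28; 4; 1; 1; 38; 5; 1; 1];
   [:: 29; 4; 1; 1; 7; 5; 1; 1];
   [:: 28; 4; 1; 1; 38; 5; 1; 1];
   [:: 29; 4; 1; 1; 17; 5; 1; 1];
   [:: 10; 4; 3; 5; 7; 5; 3; 5];
   [:: 10; 4; 3; 5; 17; 5; 3; 5];
   [:: 10; 4; 3; 5; 133; 5; 3; 5];
   [:: 10; 4; 3; 5; 23; 5; 3; 5];
   [:: 10; 4; 3; 5; 60; 5; 3; 5];
   [:: 10; 4; 14; 5; 7; 5; 7; 5];
   [:: 10; 4; 28; 5; 51; 5; 63; 5];
   [:: 10; 4; 28; 5; 51; 5; 181; 5];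
   [:: 28; 4; 9; 5; 7; 5; 7; 5];
   [:: 28; 4; 28; 5; 51; 5; 37; 5];
   [:: 29; 4; 9; 5; 17; 5; 9; 5];
   [:: 28; 4; 9; 5; 51; 5; 9; 5];
   [:: 28; 4; 28; 5; 51; 5; 37; 5];
   [:: 29; 4; 9; 5; 17; 5; 9; 5];
   [:: 28; 4; 9; 5; 43; 5; 9; 5];
   [:: 28; 4; 28; 5; 51; 5; 37; 5];
   [:: 29; 4; 9; 5; 7; 5; 7; 5];
   [:: 28; 4; 9; 5; 51; 5; 9; 5];
   [:: 29; 4; 9; 5; 17; 5; 9; 5];
   [:: 10; 4; 3; 5; 7; 5; 3; 5];
   [:: 10; 4; 3; 5; 17; 5; 3; 5];
   [:: 10; 4; 3; 5; 133; 5; 3; 5];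
   [:: 10; 4; 3; 5; 17; 5; 3; 5];
   [:: 10; 4; 3; 5; 118; 5; 3; 5];
   [:: 10; 4; 3; 5; 7; 5; 3; 5];
   [:: 10; 4; 3; 5; 60; 5; 3; 5];
   [:: 10; 4; 14; 5; 7; 5; 7; 5];
   [:: 10; 4; 23; 5; 43; 5; 23; 5];
   [:: 28; 4; 1; 1; 7; 5; 1; 1];
   [:: 28; 4; 1; 1; 51; 5; 1; 1];
   [:: 29; 4; 1; 1; 17; 5; 1; 1];
   [:: 28; 4; 1; 1; 51; 5; 1; 1];
   [:: 29; 4; 1; 1; 17; 5; 1; 1];
   [:: 28; 4; 1; 1; 51; 5; 1; 1];
   [:: 28; 4; 1; 1; 51; 5; 1; 1];
   [:: 29; 4; 1; 1; 7; 5; 1; 1];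
   [:: 28; 4; 1; 1; 51; 5; 1; 1];
   [:: 29; 4; 1; 1; 17; 5; 1; 1];
   [:: 10; 4; 3; 5; 7; 5; 3; 5];
   [:: 10; 4; 3; 5; 17; 5; 3; 5];
   [:: 10; 4; 3; 5; 63; 5; 3; 5];
   [:: 10; 4; 3; 5; 23; 5; 3; 5];
   [:: 10; 4; 3; 5; 7; 5; 3; 5];
   [:: 10; 4; 3; 5; 60; 5; 3; 5];
   [:: 10; 4; 14; 5; 7; 5; 7; 5];
   [:: 10; 4; 28; 5; 51; 5; 92; 5];
   [:: 10; 4; 28; 5; 51; 5; 92; 5];
   [:: 10; 4; 21; 5; 51; 5; 21; 5];
   [:: 28; 4; 9; 5; 7; 5; 7; 5];
   [:: 28; 4; 28; 5; 51; 5; 37; 5];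
   [:: 29; 4; 9; 5; 17; 5; 9; 5];
   [:: 28; 4; 9; 5; 51; 5; 9; 5];
   [:: 28; 4; 28; 5; 51; 5; 37; 5];
   [:: 29; 4; 9; 5; 17; 5; 9; 5];
   [:: 28; 4; 9; 5; 43; 5; 9; 5];
   [:: 28; 4; 28; 5; 51; 5; 37; 5];
   [:: 29; 4; 9; 5; 7; 5; 7; 5];
   [:: 28; 4; 9; 5; 51; 5; 9; 5];
   [:: 28; 4; 28; 5; 51; 5; 37; 5];
   [:: 29; 4; 9; 5; 17; 5; 9; 5];
   [:: 10; 4; 3; 5; 7; 5; 3; 5];
   [:: 10; 4; 3; 5; 17; 5; 3; 5];
   [:: 10; 4; 3; 5; 63; 5; 3; 5];
   [:: 10; 4; 3; 5; 17; 5; 3; 5];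
   [:: 10; 4; 3; 5; 118; 5; 3; 5];
   [:: 10; 4; 3; 5; 7; 5; 3; 5];
   [:: 10; 4; 3; 5; 60; 5; 3; 5];
   [:: 10; 4; 3; 5; 17; 5; 3; 5];
   [:: 26; 0; 14; 0; 7; 0; 7; 0];
   [:: 23; 0; 3; 0; 7; 0; 3; 0];
   [:: 34; 2; 3; 2; 17; 2; 3; 2];
   [:: 34; 2; 3; 2; 39; 2; 3; 2];
   [:: 23; 0; 3; 0; 23; 0; 3; 0];
   [:: 34; 2; 3; 2; 39; 2; 3; 2];
   [:: 34; 0; 14; 0; 7; 0; 7; 0];
   [:: 34; 2; 65; 2; 39; 2; 63; 2];
   [:: 34; 0; 65; 0; 39; 0; 125; 0];
   [:: 26; 0; 3; 0; 7; 0; 3; 0];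
   [:: 34; 2; 3; 2; 17; 2; 3; 2];
   [:: 34; 2; 3; 2; 39; 2; 3; 2];
   [:: 34; 2; 3; 2; 17; 2; 3; 2];
   [:: 26; 0; 3; 0; 26; 0; 3; 0];
   [:: 34; 2; 3; 2; 7; 2; 3; 2];
   [:: 34; 2; 3; 2; 39; 2; 3; 2];
   [:: 26; 0; 14; 0; 7; 0; 7; 0];
   [:: 26; 0; 23; 0; 26; 0; 23; 0];
   [:: 23; 0; 3; 0; 7; 0; 3; 0];
   [:: 34; 2; 3; 2; 17; 2; 3; 2];
   [:: 34; 2; 3; 2; 39; 2; 3; 2];
   [:: 23; 0; 3; 0; 23; 0; 3; 0];
   [:: 34; 2; 3; 2; 7; 2; 3; 2];
   [:: 34; 2; 3; 2; 39; 2; 3; 2];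
   [:: 34; 0; 14; 0; 7; 0; 7; 0];
   [:: 34; 2; 65; 2; 39; 2; 92; 2];
   [:: 34; 0; 65; 0; 39; 0; 92; 0];
   [:: 34; 2; 21; 2; 39; 2; 21; 2];
   [:: 26; 0; 3; 0; 7; 0; 3; 0];
   [:: 34; 2; 3; 2; 17; 2; 3; 2];
   [:: 34; 2; 3; 2; 39; 2; 3; 2];
   [:: 34; 2; 3; 2; 17; 2; 3; 2];
   [:: 26; 0; 3; 0; 26; 0; 3; 0];
   [:: 34; 2; 3; 2; 7; 2; 3; 2];
   [:: 34; 2; 3; 2; 39; 2; 3; 2];
   [:: 34; 2; 3; 2; 17; 2; 3; 2];
   [:: 10; 0; 14; 0; 7; 0; 7; 0];
   [:: 25; 0; 1; 0; 7; 0; 1; 0];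
   [:: 38; 4; 1; 1; 38; 5; 1; 1];
   [:: 29; 4; 1; 1; 17; 5; 1; 1];
   [:: 38; 4; 1; 1; 38; 5; 1; 1];
   [:: 29; 4; 1; 1; 17; 5; 1; 1];
   [:: 25; 0; 1; 0; 25; 0; 1; 0];
   [:: 29; 4; 1; 1; 7; 5; 1; 1];
   [:: 38; 4; 1; 1; 38; 5; 1; 1];
   [:: 29; 4; 1; 1; 17; 5; 1; 1];
   [:: 10; 0; 3; 0; 7; 0; 3; 0];
   [:: 10; 2; 3; 2; 17; 2; 3; 2];
   [:: 10; 2; 3; 2; 133; 2; 3; 2];
   [:: 10; 0; 3; 0; 23; 0; 3; 0];
   [:: 10; 2; 3; 2; 60; 2; 3; 2];
   [:: 25; 0; 9; 0; 7; 0; 7; 0];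
   [:: 72; 4; 70; 5; 54; 5; 70; 5];
   [:: 29; 4; 9; 5; 17; 5; 9; 5];
   [:: 29; 4; 70; 5; 17; 5; 70; 5];
   [:: 167; 4; 9; 5; 169; 5; 9; 5];
   [:: 72; 4; 70; 5; 54; 5; 70; 5];
   [:: 29; 4; 9; 5; 17; 5; 9; 5];
   [:: 25; 0; 9; 0; 25; 0; 9; 0];
   [:: 56; 4; 56; 5; 54; 5; 56; 5];
   [:: 29; 4; 9; 5; 7; 5; 7; 5];
   [:: 135; 4; 9; 5; 60; 5; 9; 5];
   [:: 72; 4; 71; 5; 54; 5; 119; 5];
   [:: 29; 4; 9; 5; 17; 5; 9; 5];
   [:: 10; 0; 14; 0; 7; 0; 7; 0];
   [:: 10; 2; 88; 2; 63; 2; 63; 2];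
   [:: 10; 0; 159; 0; 25; 0; 162; 0];
   [:: 25; 0; 9; 0; 7; 0; 7; 0];
   [:: 97; 4; 37; 5; 54; 5; 37; 5];
   [:: 29; 4; 9; 5; 17; 5; 9; 5];
   [:: 165; 4; 9; 5; 165; 5; 9; 5];
   [:: 185; 4; 37; 5; 54; 5; 37; 5];
   [:: 29; 4; 9; 5; 17; 5; 9; 5];
   [:: 25; 0; 9; 0; 25; 0; 9; 0];
   [:: 56; 4; 37; 5; 54; 5; 37; 5];
   [:: 29; 4; 9; 5; 7; 5; 7; 5];
   [:: 135; 4; 9; 5; 60; 5; 9; 5];
   [:: 29; 4; 9; 5; 17; 5; 9; 5];
   [:: 10; 0; 3; 0; 7; 0; 3; 0];
   [:: 10; 2; 3; 2; 17; 2; 3; 2];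
   [:: 10; 2; 3; 2; 133; 2; 3; 2];
   [:: 10; 2; 3; 2; 17; 2; 3; 2];
   [:: 10; 0; 3; 0; 25; 0; 3; 0];
   [:: 10; 2; 3; 2; 7; 2; 3; 2];
   [:: 10; 2; 3; 2; 60; 2; 3; 2];
   [:: 25; 0; 9; 0; 7; 0; 7; 0];
   [:: 72; 4; 70; 5; 54; 5; 70; 5];
   [:: 29; 4; 9; 5; 17; 5; 9; 5];
   [:: 29; 4; 70; 5; 17; 5; 70; 5];
   [:: 167; 4; 9; 5; 169; 5; 9; 5];
   [:: 72; 4; 70; 5; 54; 5; 70; 5];
   [:: 29; 4; 9; 5; 17; 5; 9; 5];
   [:: 29; 4; 70; 5; 17; 5; 70; 5];
   [:: 25; 0; 9; 0; 25; 0; 9; 0];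
   [:: 56; 4; 56; 5; 54; 5; 56; 5];
   [:: 29; 4; 9; 5; 7; 5; 7; 5];
   [:: 29; 4; 71; 5; 17; 5; 122; 5];
   [:: 135; 4; 9; 5; 60; 5; 9; 5];
   [:: 72; 4; 71; 5; 54; 5; 148; 5];
   [:: 29; 4; 9; 5; 17; 5; 9; 5];
   [:: 10; 0; 14; 0; 7; 0; 7; 0];
   [:: 10; 0; 23; 0; 25; 0; 23; 0];
   [:: 25; 0; 1; 0; 7; 0; 1; 0];
   [:: 83; 4; 1; 1; 54; 5; 1; 1];
   [:: 29; 4; 1; 1; 17; 5; 1; 1];
   [:: 83; 4; 1; 1; 83; 5; 1; 1];
   [:: 29; 4; 1; 1; 17; 5; 1; 1];
   [:: 25; 0; 1; 0; 25; 0; 1; 0];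
   [:: 56; 4; 1; 1; 54; 5; 1; 1];
   [:: 29; 4; 1; 1; 7; 5; 1; 1];
   [:: 83; 4; 1; 1; 60; 5; 1; 1];
   [:: 29; 4; 1; 1; 17; 5; 1; 1];
   [:: 10; 0; 3; 0; 7; 0; 3; 0];
   [:: 10; 2; 3; 2; 17; 2; 3; 2];
   [:: 10; 2; 3; 2; 63; 2; 3; 2];
   [:: 10; 0; 3; 0; 23; 0; 3; 0];
   [:: 10; 2; 3; 2; 7; 2; 3; 2];
   [:: 10; 2; 3; 2; 60; 2; 3; 2];
   [:: 25; 0; 9; 0; 7; 0; 7; 0];
   [:: 72; 4; 71; 5; 54; 5; 74; 5];
   [:: 29; 4; 9; 5; 17; 5; 9; 5];
   [:: 29; 4; 71; 5; 17; 5; 74; 5];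
   [:: 74; 4; 9; 5; 74; 5; 9; 5];
   [:: 72; 4; 71; 5; 54; 5; 74; 5];
   [:: 29; 4; 9; 5; 17; 5; 9; 5];
   [:: 25; 0; 9; 0; 25; 0; 9; 0];
   [:: 56; 4; 56; 5; 54; 5; 56; 5];
   [:: 29; 4; 9; 5; 7; 5; 7; 5];
   [:: 29; 4; 71; 5; 17; 5; 74; 5];
   [:: 74; 4; 9; 5; 60; 5; 9; 5];
   [:: 72; 4; 71; 5; 54; 5; 74; 5];
   [:: 29; 4; 9; 5; 17; 5; 9; 5];
   [:: 10; 0; 14; 0; 7; 0; 7; 0];
   [:: 10; 2; 127; 2; 92; 2; 92; 2];
   [:: 10; 0; 127; 0; 25; 0; 92; 0];
   [:: 10; 2; 21; 2; 60; 2; 21; 2];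
   [:: 25; 0; 9; 0; 7; 0; 7; 0];
   [:: 84; 4; 37; 5; 54; 5; 37; 5];
   [:: 29; 4; 9; 5; 17; 5; 9; 5];
   [:: 84; 4; 9; 5; 84; 5; 9; 5];
   [:: 84; 4; 37; 5; 54; 5; 37; 5];
   [:: 29; 4; 9; 5; 17; 5; 9; 5];
   [:: 25; 0; 9; 0; 25; 0; 9; 0];
   [:: 56; 4; 37; 5; 54; 5; 37; 5];
   [:: 29; 4; 9; 5; 7; 5; 7; 5];
   [:: 84; 4; 9; 5; 60; 5; 9; 5];
   [:: 84; 4; 37; 5; 54; 5; 37; 5];
   [:: 29; 4; 9; 5; 17; 5; 9; 5];
   [:: 10; 0; 3; 0; 7; 0; 3; 0];
   [:: 10; 2; 3; 2; 17; 2; 3; 2];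
   [:: 10; 2; 3; 2; 63; 2; 3; 2];
   [:: 10; 2; 3; 2; 17; 2; 3; 2];
   [:: 10; 0; 3; 0; 25; 0; 3; 0];
   [:: 10; 2; 3; 2; 7; 2; 3; 2];
   [:: 10; 2; 3; 2; 60; 2; 3; 2];
   [:: 10; 2; 3; 2; 17; 2; 3; 2];
   [:: 25; 0; 9; 0; 7; 0; 7; 0];
   [:: 72; 4; 71; 5; 54; 5; 122; 5];
   [:: 29; 4; 9; 5; 17; 5; 9; 5];
   [:: 29; 4; 71; 5; 17; 5; 154; 5];
   [:: 166; 4; 9; 5; 166; 5; 9; 5];
   [:: 72; 4; 71; 5; 54; 5; 154; 5];
   [:: 29; 4; 9; 5; 17; 5; 9; 5];
   [:: 29; 4; 71; 5; 17; 5; 154; 5];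
   [:: 25; 0; 9; 0; 25; 0; 9; 0];
   [:: 56; 4; 56; 5; 54; 5; 56; 5];
   [:: 29; 4; 9; 5; 7; 5; 7; 5];
   [:: 29; 4; 71; 5; 17; 5; 122; 5];
   [:: 135; 4; 9; 5; 60; 5; 9; 5];
   [:: 72; 4; 71; 5; 54; 5; 148; 5];
   [:: 29; 4; 9; 5; 17; 5; 9; 5];
   [:: 29; 4; 71; 5; 17; 5; 154; 5]];
  [:: [:: 23; 0; 1; 0; 23; 0; 1; 0];
   [:: 10; 0; 1; 0; 18; 0; 1; 0];
   [:: 1; 0; 1; 0; 1; 0; 1; 0];
   [:: 1; 1; 1; 1; 1; 1; 1; 1];
   [:: 1; 1; 1; 1; 1; 1; 1; 1];
   [:: 1; 1; 1; 1; 1; 1; 1; 1];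
   [:: 1; 1; 1; 1; 1; 1; 1; 1];
   [:: 1; 0; 1; 0; 1; 0; 1; 0];
   [:: 1; 1; 1; 1; 1; 1; 1; 1];
   [:: 1; 1; 1; 1; 1; 1; 1; 1];
   [:: 1; 1; 1; 1; 1; 1; 1; 1];
   [:: 10; 0; 3; 0; 18; 0; 3; 0];
   [:: 10; 4; 3; 18; 17; 13; 3; 18];
   [:: 10; 4; 3; 18; 18; 13; 3; 18];
   [:: 10; 0; 3; 0; 18; 0; 3; 0];
   [:: 10; 4; 3; 18; 18; 13; 3; 18];
   [:: 10; 0; 18; 0; 18; 0; 18; 0];
   [:: 10; 4; 18; 8; 18; 8; 18; 8];
   [:: 10; 0; 18; 0; 18; 0; 18; 0];
   [:: 10; 0; 3; 0; 18; 0; 3; 0];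
   [:: 10; 4; 3; 18; 17; 13; 3; 18];
   [:: 10; 4; 3; 18; 18; 13; 3; 18];
   [:: 10; 4; 3; 18; 17; 13; 3; 18];
   [:: 10; 0; 3; 0; 18; 0; 3; 0];
   [:: 10; 4; 3; 18; 17; 13; 3; 18];
   [:: 10; 4; 3; 18; 18; 13; 3; 18];
   [:: 10; 0; 1; 0; 18; 0; 1; 0];
   [:: 10; 0; 1; 0; 18; 0; 1; 0];
   [:: 10; 0; 3; 0; 18; 0; 3; 0];
   [:: 10; 4; 3; 18; 17; 13; 3; 18];
   [:: 10; 4; 3; 18; 18; 13; 3; 18];
   [:: 10; 0; 3; 0; 18; 0; 3; 0];
   [:: 10; 4; 3; 18; 17; 13; 3; 18];
   [:: 10; 4; 3; 18; 18; 13; 3; 18];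
   [:: 10; 0; 18; 0; 18; 0; 18; 0];
   [:: 10; 4; 18; 8; 18; 8; 18; 8];
   [:: 10; 0; 18; 0; 18; 0; 18; 0];
   [:: 10; 4; 18; 8; 18; 8; 18; 8];
   [:: 10; 0; 3; 0; 18; 0; 3; 0];
   [:: 10; 4; 3; 18; 17; 13; 3; 18];
   [:: 10; 4; 3; 18; 18; 13; 3; 18];
   [:: 10; 4; 3; 18; 17; 13; 3; 18];
   [:: 10; 0; 3; 0; 18; 0; 3; 0];
   [:: 10; 4; 3; 18; 17; 13; 3; 18];
   [:: 10; 4; 3; 18; 18; 13; 3; 18];
   [:: 10; 4; 3; 18; 17; 13; 3; 18];
   [:: 0; 0; 0; 0; 0; 0; 0; 0];
   [:: 0; 0; 0; 0; 0; 0; 0; 0];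
   [:: 34; 2; 3; 2; 17; 2; 3; 2];
   [:: 34; 2; 3; 2; 39; 2; 3; 2];
   [:: 0; 0; 0; 0; 0; 0; 0; 0];
   [:: 34; 2; 3; 2; 39; 2; 3; 2];
   [:: 0; 0; 0; 0; 0; 0; 0; 0];
   [:: 34; 2; 55; 2; 39; 2; 55; 2];
   [:: 0; 0; 0; 0; 0; 0; 0; 0];
   [:: 0; 0; 0; 0; 0; 0; 0; 0];
   [:: 0; 0; 0; 0; 0; 0; 0; 0];
   [:: 0; 0; 0; 0; 0; 0; 0; 0];
   [:: 34; 2; 55; 2; 39; 2; 55; 2];
   [:: 0; 0; 0; 0; 0; 0; 0; 0];
   [:: 34; 2; 55; 2; 39; 2; 55; 2];
   [:: 0; 0; 0; 0; 0; 0; 0; 0];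
   [:: 0; 0; 0; 0; 0; 0; 0; 0];
   [:: 1; 1; 1; 1; 1; 1; 1; 1];
   [:: 1; 1; 1; 1; 1; 1; 1; 1];
   [:: 1; 1; 1; 1; 1; 1; 1; 1];
   [:: 1; 1; 1; 1; 1; 1; 1; 1];
   [:: 0; 0; 0; 0; 0; 0; 0; 0];
   [:: 1; 1; 1; 1; 1; 1; 1; 1];
   [:: 1; 1; 1; 1; 1; 1; 1; 1];
   [:: 1; 1; 1; 1; 1; 1; 1; 1];
   [:: 0; 0; 0; 0; 0; 0; 0; 0];
   [:: 10; 2; 3; 2; 17; 2; 3; 2];
   [:: 10; 2; 3; 2; 64; 2; 3; 2];
   [:: 0; 0; 0; 0; 0; 0; 0; 0];
   [:: 10; 2; 3; 2; 102; 2; 3; 2];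
   [:: 0; 0; 0; 0; 0; 0; 0; 0];
   [:: 73; 4; 70; 19; 54; 19; 70; 19];
   [:: 73; 4; 9; 19; 17; 13; 9; 19];
   [:: 73; 4; 70; 19; 17; 19; 70; 19];
   [:: 73; 4; 9; 19; 64; 13; 9; 19];
   [:: 73; 4; 70; 19; 54; 19; 70; 19];
   [:: 73; 4; 9; 19; 17; 13; 9; 19];
   [:: 0; 0; 0; 0; 0; 0; 0; 0];
   [:: 73; 4; 71; 40; 54; 40; 100; 40];
   [:: 73; 4; 9; 40; 17; 13; 9; 40];
   [:: 73; 4; 9; 40; 114; 13; 9; 40];
   [:: 73; 4; 71; 40; 54; 40; 100; 40];
   [:: 73; 4; 9; 40; 17; 13; 9; 40];
   [:: 0; 0; 0; 0; 0; 0; 0; 0];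
   [:: 10; 2; 55; 2; 55; 2; 55; 2];
   [:: 0; 0; 0; 0; 0; 0; 0; 0];
   [:: 0; 0; 0; 0; 0; 0; 0; 0];
   [:: 73; 4; 37; 8; 54; 8; 37; 8];
   [:: 73; 4; 9; 19; 17; 13; 9; 19];
   [:: 62; 4; 9; 8; 62; 8; 9; 8];
   [:: 73; 4; 37; 8; 54; 8; 37; 8];
   [:: 73; 4; 9; 19; 17; 13; 9; 19];
   [:: 0; 0; 0; 0; 0; 0; 0; 0];
   [:: 73; 4; 37; 8; 54; 8; 37; 8];
   [:: 73; 4; 9; 40; 17; 13; 9; 40];
   [:: 62; 4; 9; 8; 62; 8; 9; 8];
   [:: 73; 4; 9; 40; 17; 13; 9; 40];
   [:: 0; 0; 0; 0; 0; 0; 0; 0];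
   [:: 10; 2; 3; 2; 17; 2; 3; 2];
   [:: 10; 2; 3; 2; 64; 2; 3; 2];
   [:: 10; 2; 3; 2; 17; 2; 3; 2];
   [:: 0; 0; 0; 0; 0; 0; 0; 0];
   [:: 10; 2; 3; 2; 17; 2; 3; 2];
   [:: 10; 2; 3; 2; 102; 2; 3; 2];
   [:: 0; 0; 0; 0; 0; 0; 0; 0];
   [:: 0; 0; 0; 0; 0; 0; 0; 0];
   [:: 0; 0; 0; 0; 0; 0; 0; 0];
   [:: 1; 1; 1; 1; 1; 1; 1; 1];
   [:: 1; 1; 1; 1; 1; 1; 1; 1];
   [:: 1; 1; 1; 1; 1; 1; 1; 1];
   [:: 1; 1; 1; 1; 1; 1; 1; 1];
   [:: 0; 0; 0; 0; 0; 0; 0; 0];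
   [:: 1; 1; 1; 1; 1; 1; 1; 1];
   [:: 1; 1; 1; 1; 1; 1; 1; 1];
   [:: 1; 1; 1; 1; 1; 1; 1; 1];
   [:: 1; 1; 1; 1; 1; 1; 1; 1];
   [:: 0; 0; 0; 0; 0; 0; 0; 0];
   [:: 10; 2; 3; 2; 17; 2; 3; 2];
   [:: 10; 2; 3; 2; 102; 2; 3; 2];
   [:: 0; 0; 0; 0; 0; 0; 0; 0];
   [:: 10; 2; 3; 2; 17; 2; 3; 2];
   [:: 10; 2; 3; 2; 102; 2; 3; 2];
   [:: 0; 0; 0; 0; 0; 0; 0; 0];
   [:: 10; 2; 55; 2; 55; 2; 55; 2];
   [:: 0; 0; 0; 0; 0; 0; 0; 0];
   [:: 10; 2; 55; 2; 55; 2; 55; 2];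
   [:: 0; 0; 0; 0; 0; 0; 0; 0];
   [:: 73; 4; 37; 8; 54; 8; 37; 8];
   [:: 73; 4; 9; 40; 17; 13; 9; 40];
   [:: 62; 4; 9; 8; 62; 8; 9; 8];
   [:: 73; 4; 37; 8; 54; 8; 37; 8];
   [:: 73; 4; 9; 40; 17; 13; 9; 40];
   [:: 0; 0; 0; 0; 0; 0; 0; 0];
   [:: 73; 4; 37; 8; 54; 8; 37; 8];
   [:: 73; 4; 9; 40; 17; 13; 9; 40];
   [:: 62; 4; 9; 8; 62; 8; 9; 8];
   [:: 73; 4; 37; 8; 54; 8; 37; 8];
   [:: 73; 4; 9; 40; 17; 13; 9; 40];
   [:: 0; 0; 0; 0; 0; 0; 0; 0];
   [:: 10; 2; 3; 2; 17; 2; 3; 2];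
   [:: 10; 2; 3; 2; 102; 2; 3; 2];
   [:: 10; 2; 3; 2; 17; 2; 3; 2];
   [:: 0; 0; 0; 0; 0; 0; 0; 0];
   [:: 10; 2; 3; 2; 17; 2; 3; 2];
   [:: 10; 2; 3; 2; 102; 2; 3; 2];
   [:: 10; 2; 3; 2; 17; 2; 3; 2];
   [:: 23; 0; 1; 0; 23; 0; 1; 0];
   [:: 102; 0; 28; 0; 39; 0; 62; 0];
   [:: 102; 55; 28; 55; 39; 55; 62; 55];
   [:: 102; 0; 28; 0; 39; 0; 62; 0];
   [:: 23; 0; 1; 0; 23; 0; 1; 0];
   [:: 23; 0; 1; 0; 23; 0; 1; 0];
   [:: 10; 0; 1; 0; 23; 0; 1; 0];
   [:: 1; 0; 1; 0; 1; 0; 1; 0];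
   [:: 1; 1; 1; 1; 1; 1; 1; 1];
   [:: 1; 1; 1; 1; 1; 1; 1; 1];
   [:: 1; 1; 1; 1; 1; 1; 1; 1];
   [:: 1; 1; 1; 1; 1; 1; 1; 1];
   [:: 1; 0; 1; 0; 1; 0; 1; 0];
   [:: 1; 1; 1; 1; 1; 1; 1; 1];
   [:: 1; 1; 1; 1; 1; 1; 1; 1];
   [:: 1; 1; 1; 1; 1; 1; 1; 1];
   [:: 10; 0; 3; 0; 23; 0; 3; 0];
   [:: 10; 4; 3; 19; 17; 13; 3; 19];
   [:: 10; 4; 3; 19; 64; 13; 3; 19];
   [:: 10; 0; 3; 0; 23; 0; 3; 0];
   [:: 10; 4; 3; 40; 90; 13; 3; 40];
   [:: 10; 0; 28; 0; 51; 0; 62; 0];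
   [:: 10; 4; 28; 8; 51; 8; 62; 8];
   [:: 10; 0; 28; 0; 51; 0; 62; 0];
   [:: 28; 0; 9; 0; 51; 0; 9; 0];
   [:: 28; 4; 28; 8; 51; 8; 37; 8];
   [:: 29; 4; 9; 19; 17; 13; 9; 19];
   [:: 28; 4; 9; 8; 51; 8; 9; 8];
   [:: 28; 4; 28; 8; 51; 8; 37; 8];
   [:: 29; 4; 9; 19; 17; 13; 9; 19];
   [:: 28; 0; 9; 0; 51; 0; 9; 0];
   [:: 28; 4; 28; 8; 51; 8; 37; 8];
   [:: 29; 4; 9; 40; 17; 13; 9; 40];
   [:: 28; 4; 9; 8; 51; 8; 9; 8];
   [:: 29; 4; 9; 40; 17; 13; 9; 40];
   [:: 10; 0; 3; 0; 64; 0; 3; 0];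
   [:: 10; 4; 3; 19; 17; 13; 3; 19];
   [:: 10; 4; 3; 19; 64; 13; 3; 19];
   [:: 10; 4; 3; 19; 17; 13; 3; 19];
   [:: 10; 0; 3; 0; 90; 0; 3; 0];
   [:: 10; 4; 3; 40; 17; 13; 3; 40];
   [:: 10; 4; 3; 40; 90; 13; 3; 40];
   [:: 10; 0; 1; 0; 23; 0; 1; 0];
   [:: 10; 0; 1; 0; 23; 0; 1; 0];
   [:: 1; 0; 1; 0; 1; 0; 1; 0];
   [:: 1; 1; 1; 1; 1; 1; 1; 1];
   [:: 1; 1; 1; 1; 1; 1; 1; 1];
   [:: 1; 1; 1; 1; 1; 1; 1; 1];
   [:: 1; 1; 1; 1; 1; 1; 1; 1];
   [:: 1; 0; 1; 0; 1; 0; 1; 0];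
   [:: 1; 1; 1; 1; 1; 1; 1; 1];
   [:: 1; 1; 1; 1; 1; 1; 1; 1];
   [:: 1; 1; 1; 1; 1; 1; 1; 1];
   [:: 1; 1; 1; 1; 1; 1; 1; 1];
   [:: 10; 0; 3; 0; 23; 0; 3; 0];
   [:: 10; 4; 3; 40; 17; 13; 3; 40];
   [:: 10; 4; 3; 40; 90; 13; 3; 40];
   [:: 10; 0; 3; 0; 23; 0; 3; 0];
   [:: 10; 4; 3; 40; 17; 13; 3; 40];
   [:: 10; 4; 3; 40; 90; 13; 3; 40];
   [:: 10; 0; 28; 0; 51; 0; 62; 0];
   [:: 10; 4; 28; 8; 51; 8; 62; 8];
   [:: 10; 0; 28; 0; 51; 0; 62; 0];
   [:: 10; 4; 28; 8; 51; 8; 62; 8];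
   [:: 10; 0; 3; 0; 90; 0; 3; 0];
   [:: 10; 4; 3; 40; 17; 13; 3; 40];
   [:: 10; 4; 3; 40; 90; 13; 3; 40];
   [:: 10; 4; 3; 40; 17; 13; 3; 40];
   [:: 10; 0; 3; 0; 90; 0; 3; 0];
   [:: 10; 4; 3; 40; 17; 13; 3; 40];
   [:: 10; 4; 3; 40; 90; 13; 3; 40];
   [:: 10; 4; 3; 40; 17; 13; 3; 40];
   [:: 0; 0; 0; 0; 0; 0; 0; 0];
   [:: 0; 0; 0; 0; 0; 0; 0; 0];
   [:: 34; 2; 3; 2; 17; 2; 3; 2];
   [:: 34; 2; 3; 2; 39; 2; 3; 2];
   [:: 0; 0; 0; 0; 0; 0; 0; 0];
   [:: 34; 2; 3; 2; 39; 2; 3; 2];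
   [:: 0; 0; 0; 0; 0; 0; 0; 0];
   [:: 34; 2; 55; 2; 39; 2; 55; 2];
   [:: 0; 0; 0; 0; 0; 0; 0; 0];
   [:: 0; 0; 0; 0; 0; 0; 0; 0];
   [:: 34; 2; 3; 2; 17; 2; 3; 2];
   [:: 34; 2; 3; 2; 39; 2; 3; 2];
   [:: 34; 2; 3; 2; 17; 2; 3; 2];
   [:: 0; 0; 0; 0; 0; 0; 0; 0];
   [:: 34; 2; 3; 2; 17; 2; 3; 2];
   [:: 34; 2; 3; 2; 39; 2; 3; 2];
   [:: 0; 0; 0; 0; 0; 0; 0; 0];
   [:: 0; 0; 0; 0; 0; 0; 0; 0];
   [:: 0; 0; 0; 0; 0; 0; 0; 0];
   [:: 34; 2; 3; 2; 17; 2; 3; 2];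
   [:: 34; 2; 3; 2; 39; 2; 3; 2];
   [:: 0; 0; 0; 0; 0; 0; 0; 0];
   [:: 34; 2; 3; 2; 17; 2; 3; 2];
   [:: 34; 2; 3; 2; 39; 2; 3; 2];
   [:: 0; 0; 0; 0; 0; 0; 0; 0];
   [:: 34; 2; 55; 2; 39; 2; 55; 2];
   [:: 0; 0; 0; 0; 0; 0; 0; 0];
   [:: 34; 2; 55; 2; 39; 2; 55; 2];
   [:: 0; 0; 0; 0; 0; 0; 0; 0];
   [:: 0; 0; 0; 0; 0; 0; 0; 0];
   [:: 1; 1; 1; 1; 1; 1; 1; 1];
   [:: 1; 1; 1; 1; 1; 1; 1; 1];
   [:: 1; 1; 1; 1; 1; 1; 1; 1];
   [:: 1; 1; 1; 1; 1; 1; 1; 1];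
   [:: 0; 0; 0; 0; 0; 0; 0; 0];
   [:: 1; 1; 1; 1; 1; 1; 1; 1];
   [:: 1; 1; 1; 1; 1; 1; 1; 1];
   [:: 1; 1; 1; 1; 1; 1; 1; 1];
   [:: 0; 0; 0; 0; 0; 0; 0; 0];
   [:: 10; 2; 3; 2; 17; 2; 3; 2];
   [:: 10; 2; 3; 2; 64; 2; 3; 2];
   [:: 0; 0; 0; 0; 0; 0; 0; 0];
   [:: 10; 2; 3; 2; 102; 2; 3; 2];
   [:: 0; 0; 0; 0; 0; 0; 0; 0];
   [:: 72; 4; 70; 19; 54; 19; 70; 19];
   [:: 29; 4; 9; 19; 17; 13; 9; 19];
   [:: 29; 4; 70; 19; 17; 19; 70; 19];
   [:: 73; 4; 9; 19; 64; 13; 9; 19];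
   [:: 72; 4; 70; 19; 54; 19; 70; 19];
   [:: 29; 4; 9; 19; 17; 13; 9; 19];
   [:: 0; 0; 0; 0; 0; 0; 0; 0];
   [:: 72; 4; 71; 40; 54; 40; 100; 40];
   [:: 29; 4; 9; 40; 17; 13; 9; 40];
   [:: 73; 4; 9; 40; 114; 13; 9; 40];
   [:: 72; 4; 71; 40; 54; 40; 100; 40];
   [:: 29; 4; 9; 40; 17; 13; 9; 40];
   [:: 0; 0; 0; 0; 0; 0; 0; 0];
   [:: 10; 2; 55; 2; 55; 2; 55; 2];
   [:: 0; 0; 0; 0; 0; 0; 0; 0];
   [:: 0; 0; 0; 0; 0; 0; 0; 0];
   [:: 73; 4; 37; 8; 54; 8; 37; 8];
   [:: 29; 4; 9; 19; 17; 13; 9; 19];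
   [:: 62; 4; 9; 8; 62; 8; 9; 8];
   [:: 73; 4; 37; 8; 54; 8; 37; 8];
   [:: 29; 4; 9; 19; 17; 13; 9; 19];
   [:: 0; 0; 0; 0; 0; 0; 0; 0];
   [:: 73; 4; 37; 8; 54; 8; 37; 8];
   [:: 29; 4; 9; 40; 17; 13; 9; 40];
   [:: 62; 4; 9; 8; 62; 8; 9; 8];
   [:: 29; 4; 9; 40; 17; 13; 9; 40];
   [:: 0; 0; 0; 0; 0; 0; 0; 0];
   [:: 10; 2; 3; 2; 17; 2; 3; 2];
   [:: 10; 2; 3; 2; 64; 2; 3; 2];
   [:: 10; 2; 3; 2; 17; 2; 3; 2];
   [:: 0; 0; 0; 0; 0; 0; 0; 0];
   [:: 10; 2; 3; 2; 17; 2; 3; 2];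
   [:: 10; 2; 3; 2; 102; 2; 3; 2];
   [:: 0; 0; 0; 0; 0; 0; 0; 0];
   [:: 72; 4; 70; 19; 54; 19; 70; 19];
   [:: 29; 4; 9; 19; 17; 13; 9; 19];
   [:: 29; 4; 70; 19; 17; 19; 70; 19];
   [:: 73; 4; 9; 19; 64; 13; 9; 19];
   [:: 72; 4; 70; 19; 54; 19; 70; 19];
   [:: 29; 4; 9; 19; 17; 13; 9; 19];
   [:: 29; 4; 70; 19; 17; 19; 70; 19];
   [:: 0; 0; 0; 0; 0; 0; 0; 0];
   [:: 72; 4; 71; 40; 54; 40; 117; 40];
   [:: 29; 4; 9; 40; 17; 13; 9; 40];
   [:: 29; 4; 71; 40; 17; 40; 117; 40];
   [:: 73; 4; 9; 40; 114; 13; 9; 40];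
   [:: 72; 4; 71; 40; 54; 40; 117; 40];
   [:: 29; 4; 9; 40; 17; 13; 9; 40];
   [:: 0; 0; 0; 0; 0; 0; 0; 0];
   [:: 0; 0; 0; 0; 0; 0; 0; 0];
   [:: 0; 0; 0; 0; 0; 0; 0; 0];
   [:: 1; 1; 1; 1; 1; 1; 1; 1];
   [:: 1; 1; 1; 1; 1; 1; 1; 1];
   [:: 1; 1; 1; 1; 1; 1; 1; 1];
   [:: 1; 1; 1; 1; 1; 1; 1; 1];
   [:: 0; 0; 0; 0; 0; 0; 0; 0];
   [:: 1; 1; 1; 1; 1; 1; 1; 1];
   [:: 1; 1; 1; 1; 1; 1; 1; 1];
   [:: 1; 1; 1; 1; 1; 1; 1; 1];
   [:: 1; 1; 1; 1; 1; 1; 1; 1];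
   [:: 0; 0; 0; 0; 0; 0; 0; 0];
   [:: 10; 2; 3; 2; 17; 2; 3; 2];
   [:: 10; 2; 3; 2; 102; 2; 3; 2];
   [:: 0; 0; 0; 0; 0; 0; 0; 0];
   [:: 10; 2; 3; 2; 17; 2; 3; 2];
   [:: 10; 2; 3; 2; 102; 2; 3; 2];
   [:: 0; 0; 0; 0; 0; 0; 0; 0];
   [:: 72; 4; 71; 40; 54; 40; 100; 40];
   [:: 29; 4; 9; 40; 17; 13; 9; 40];
   [:: 29; 4; 71; 40; 17; 40; 100; 40];
   [:: 73; 4; 9; 40; 114; 13; 9; 40];
   [:: 72; 4; 71; 40; 54; 40; 100; 40];
   [:: 29; 4; 9; 40; 17; 13; 9; 40];
   [:: 0; 0; 0; 0; 0; 0; 0; 0];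
   [:: 72; 4; 71; 40; 54; 40; 100; 40];
   [:: 29; 4; 9; 40; 17; 13; 9; 40];
   [:: 29; 4; 71; 40; 17; 40; 100; 40];
   [:: 73; 4; 9; 40; 114; 13; 9; 40];
   [:: 72; 4; 71; 40; 54; 40; 100; 40];
   [:: 29; 4; 9; 40; 17; 13; 9; 40];
   [:: 0; 0; 0; 0; 0; 0; 0; 0];
   [:: 10; 2; 55; 2; 55; 2; 55; 2];
   [:: 0; 0; 0; 0; 0; 0; 0; 0];
   [:: 10; 2; 55; 2; 55; 2; 55; 2];
   [:: 0; 0; 0; 0; 0; 0; 0; 0];
   [:: 73; 4; 37; 8; 54; 8; 37; 8];
   [:: 29; 4; 9; 40; 17; 13; 9; 40];
   [:: 62; 4; 9; 8; 62; 8; 9; 8];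
   [:: 73; 4; 37; 8; 54; 8; 37; 8];
   [:: 29; 4; 9; 40; 17; 13; 9; 40];
   [:: 0; 0; 0; 0; 0; 0; 0; 0];
   [:: 73; 4; 37; 8; 54; 8; 37; 8];
   [:: 29; 4; 9; 40; 17; 13; 9; 40];
   [:: 62; 4; 9; 8; 62; 8; 9; 8];
   [:: 73; 4; 37; 8; 54; 8; 37; 8];
   [:: 29; 4; 9; 40; 17; 13; 9; 40];
   [:: 0; 0; 0; 0; 0; 0; 0; 0];
   [:: 10; 2; 3; 2; 17; 2; 3; 2];
   [:: 10; 2; 3; 2; 102; 2; 3; 2];
   [:: 10; 2; 3; 2; 17; 2; 3; 2];
   [:: 0; 0; 0; 0; 0; 0; 0; 0];
   [:: 10; 2; 3; 2; 17; 2; 3; 2];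
   [:: 10; 2; 3; 2; 102; 2; 3; 2];
   [:: 10; 2; 3; 2; 17; 2; 3; 2];
   [:: 23; 0; 1; 0; 23; 0; 1; 0];
   [:: 23; 0; 1; 0; 23; 0; 1; 0];
   [:: 23; 0; 1; 0; 23; 0; 1; 0];
   [:: 10; 0; 1; 0; 18; 0; 1; 0];
   [:: 1; 0; 1; 0; 1; 0; 1; 0];
   [:: 1; 1; 1; 1; 1; 1; 1; 1];
   [:: 1; 1; 1; 1; 1; 1; 1; 1];
   [:: 1; 1; 1; 1; 1; 1; 1; 1];
   [:: 1; 1; 1; 1; 1; 1; 1; 1];
   [:: 1; 0; 1; 0; 1; 0; 1; 0];
   [:: 1; 1; 1; 1; 1; 1; 1; 1];
   [:: 1; 1; 1; 1; 1; 1; 1; 1];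
   [:: 1; 1; 1; 1; 1; 1; 1; 1];
   [:: 10; 0; 3; 0; 18; 0; 3; 0];
   [:: 10; 4; 3; 18; 17; 13; 3; 18];
   [:: 10; 4; 3; 18; 18; 13; 3; 18];
   [:: 10; 0; 3; 0; 18; 0; 3; 0];
   [:: 10; 4; 3; 18; 18; 13; 3; 18];
   [:: 10; 0; 18; 0; 18; 0; 18; 0];
   [:: 10; 4; 18; 8; 18; 8; 18; 8];
   [:: 10; 0; 18; 0; 18; 0; 18; 0];
   [:: 10; 0; 3; 0; 18; 0; 3; 0];
   [:: 10; 4; 3; 18; 17; 13; 3; 18];
   [:: 10; 4; 3; 18; 18; 13; 3; 18];
   [:: 10; 4; 3; 18; 17; 13; 3; 18];
   [:: 10; 0; 3; 0; 18; 0; 3; 0];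
   [:: 10; 4; 3; 18; 17; 13; 3; 18];
   [:: 10; 4; 3; 18; 18; 13; 3; 18];
   [:: 10; 0; 1; 0; 18; 0; 1; 0];
   [:: 10; 0; 1; 0; 18; 0; 1; 0];
   [:: 1; 0; 1; 0; 1; 0; 1; 0];
   [:: 1; 1; 1; 1; 1; 1; 1; 1];
   [:: 1; 1; 1; 1; 1; 1; 1; 1];
   [:: 1; 1; 1; 1; 1; 1; 1; 1];
   [:: 1; 1; 1; 1; 1; 1; 1; 1];
   [:: 1; 0; 1; 0; 1; 0; 1; 0];
   [:: 1; 1; 1; 1; 1; 1; 1; 1];
   [:: 1; 1; 1; 1; 1; 1; 1; 1];
   [:: 1; 1; 1; 1; 1; 1; 1; 1];
   [:: 1; 1; 1; 1; 1; 1; 1; 1];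
   [:: 10; 0; 3; 0; 18; 0; 3; 0];
   [:: 10; 4; 3; 18; 17; 13; 3; 18];
   [:: 10; 4; 3; 18; 18; 13; 3; 18];
   [:: 10; 0; 3; 0; 18; 0; 3; 0];
   [:: 10; 4; 3; 18; 17; 13; 3; 18];
   [:: 10; 4; 3; 18; 18; 13; 3; 18];
   [:: 10; 0; 18; 0; 18; 0; 18; 0];
   [:: 10; 4; 18; 8; 18; 8; 18; 8];
   [:: 10; 0; 18; 0; 18; 0; 18; 0];
   [:: 10; 4; 18; 8; 18; 8; 18; 8];
   [:: 10; 0; 3; 0; 18; 0; 3; 0];
   [:: 10; 4; 3; 18; 17; 13; 3; 18];
   [:: 10; 4; 3; 18; 18; 13; 3; 18];
   [:: 10; 4; 3; 18; 17; 13; 3; 18];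
   [:: 10; 0; 3; 0; 18; 0; 3; 0];
   [:: 10; 4; 3; 18; 17; 13; 3; 18];
   [:: 10; 4; 3; 18; 18; 13; 3; 18];
   [:: 10; 4; 3; 18; 17; 13; 3; 18];
   [:: 0; 0; 0; 0; 0; 0; 0; 0];
   [:: 0; 0; 0; 0; 0; 0; 0; 0];
   [:: 34; 2; 3; 2; 17; 2; 3; 2];
   [:: 34; 2; 3; 2; 39; 2; 3; 2];
   [:: 0; 0; 0; 0; 0; 0; 0; 0];
   [:: 34; 2; 3; 2; 39; 2; 3; 2];
   [:: 0; 0; 0; 0; 0; 0; 0; 0];
   [:: 34; 2; 55; 2; 39; 2; 55; 2];
   [:: 0; 0; 0; 0; 0; 0; 0; 0];
   [:: 0; 0; 0; 0; 0; 0; 0; 0];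
   [:: 0; 0; 0; 0; 0; 0; 0; 0];
   [:: 0; 0; 0; 0; 0; 0; 0; 0];
   [:: 34; 2; 3; 2; 17; 2; 3; 2];
   [:: 34; 2; 3; 2; 39; 2; 3; 2];
   [:: 0; 0; 0; 0; 0; 0; 0; 0];
   [:: 34; 2; 3; 2; 17; 2; 3; 2];
   [:: 34; 2; 3; 2; 39; 2; 3; 2];
   [:: 0; 0; 0; 0; 0; 0; 0; 0];
   [:: 34; 2; 55; 2; 39; 2; 55; 2];
   [:: 0; 0; 0; 0; 0; 0; 0; 0];
   [:: 34; 2; 55; 2; 39; 2; 55; 2];
   [:: 0; 0; 0; 0; 0; 0; 0; 0];
   [:: 0; 0; 0; 0; 0; 0; 0; 0];
   [:: 1; 1; 1; 1; 1; 1; 1; 1];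
   [:: 1; 1; 1; 1; 1; 1; 1; 1];
   [:: 1; 1; 1; 1; 1; 1; 1; 1];
   [:: 1; 1; 1; 1; 1; 1; 1; 1];
   [:: 0; 0; 0; 0; 0; 0; 0; 0];
   [:: 1; 1; 1; 1; 1; 1; 1; 1];
   [:: 1; 1; 1; 1; 1; 1; 1; 1];
   [:: 1; 1; 1; 1; 1; 1; 1; 1];
   [:: 0; 0; 0; 0; 0; 0; 0; 0];
   [:: 10; 2; 3; 2; 17; 2; 3; 2];
   [:: 10; 2; 3; 2; 102; 2; 3; 2];
   [:: 0; 0; 0; 0; 0; 0; 0; 0];
   [:: 10; 2; 3; 2; 102; 2; 3; 2];
   [:: 0; 0; 0; 0; 0; 0; 0; 0];
   [:: 73; 4; 70; 19; 54; 19; 70; 19];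
   [:: 73; 4; 9; 19; 17; 13; 9; 19];
   [:: 73; 4; 70; 19; 17; 19; 70; 19];
   [:: 73; 4; 9; 19; 114; 13; 9; 19];
   [:: 73; 4; 70; 19; 54; 19; 70; 19];
   [:: 73; 4; 9; 19; 17; 13; 9; 19];
   [:: 0; 0; 0; 0; 0; 0; 0; 0];
   [:: 73; 4; 71; 40; 54; 40; 100; 40];
   [:: 73; 4; 9; 40; 17; 13; 9; 40];
   [:: 73; 4; 9; 40; 114; 13; 9; 40];
   [:: 73; 4; 71; 40; 54; 40; 100; 40];
   [:: 73; 4; 9; 40; 17; 13; 9; 40];
   [:: 0; 0; 0; 0; 0; 0; 0; 0];
   [:: 10; 2; 55; 2; 55; 2; 55; 2];
   [:: 0; 0; 0; 0; 0; 0; 0; 0];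
   [:: 0; 0; 0; 0; 0; 0; 0; 0];
   [:: 73; 4; 37; 8; 54; 8; 37; 8];
   [:: 73; 4; 9; 19; 17; 13; 9; 19];
   [:: 62; 4; 9; 8; 62; 8; 9; 8];
   [:: 73; 4; 37; 8; 54; 8; 37; 8];
   [:: 73; 4; 9; 19; 17; 13; 9; 19];
   [:: 0; 0; 0; 0; 0; 0; 0; 0];
   [:: 73; 4; 37; 8; 54; 8; 37; 8];
   [:: 73; 4; 9; 40; 17; 13; 9; 40];
   [:: 62; 4; 9; 8; 62; 8; 9; 8];
   [:: 73; 4; 9; 40; 17; 13; 9; 40];
   [:: 0; 0; 0; 0; 0; 0; 0; 0];
   [:: 10; 2; 3; 2; 17; 2; 3; 2];
   [:: 10; 2; 3; 2; 102; 2; 3; 2];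
   [:: 10; 2; 3; 2; 17; 2; 3; 2];
   [:: 0; 0; 0; 0; 0; 0; 0; 0];
   [:: 10; 2; 3; 2; 17; 2; 3; 2];
   [:: 10; 2; 3; 2; 102; 2; 3; 2];
   [:: 0; 0; 0; 0; 0; 0; 0; 0];
   [:: 0; 0; 0; 0; 0; 0; 0; 0];
   [:: 0; 0; 0; 0; 0; 0; 0; 0];
   [:: 1; 1; 1; 1; 1; 1; 1; 1];
   [:: 1; 1; 1; 1; 1; 1; 1; 1];
   [:: 1; 1; 1; 1; 1; 1; 1; 1];
   [:: 1; 1; 1; 1; 1; 1; 1; 1];
   [:: 0; 0; 0; 0; 0; 0; 0; 0];
   [:: 1; 1; 1; 1; 1; 1; 1; 1];
   [:: 1; 1; 1; 1; 1; 1; 1; 1];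
   [:: 1; 1; 1; 1; 1; 1; 1; 1];
   [:: 1; 1; 1; 1; 1; 1; 1; 1];
   [:: 0; 0; 0; 0; 0; 0; 0; 0];
   [:: 10; 2; 3; 2; 17; 2; 3; 2];
   [:: 10; 2; 3; 2; 102; 2; 3; 2];
   [:: 0; 0; 0; 0; 0; 0; 0; 0];
   [:: 10; 2; 3; 2; 17; 2; 3; 2];
   [:: 10; 2; 3; 2; 102; 2; 3; 2];
   [:: 0; 0; 0; 0; 0; 0; 0; 0];
   [:: 73; 4; 71; 40; 54; 40; 100; 40];
   [:: 73; 4; 9; 40; 17; 13; 9; 40];
   [:: 73; 4; 71; 40; 17; 40; 100; 40];
   [:: 73; 4; 9; 40; 114; 13; 9; 40];
   [:: 73; 4; 71; 40; 54; 40; 100; 40];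
   [:: 73; 4; 9; 40; 17; 13; 9; 40];
   [:: 0; 0; 0; 0; 0; 0; 0; 0];
   [:: 73; 4; 71; 40; 54; 40; 100; 40];
   [:: 73; 4; 9; 40; 17; 13; 9; 40];
   [:: 73; 4; 71; 40; 17; 40; 100; 40];
   [:: 73; 4; 9; 40; 114; 13; 9; 40];
   [:: 73; 4; 71; 40; 54; 40; 100; 40];
   [:: 73; 4; 9; 40; 17; 13; 9; 40];
   [:: 0; 0; 0; 0; 0; 0; 0; 0];
   [:: 10; 2; 55; 2; 55; 2; 55; 2];
   [:: 0; 0; 0; 0; 0; 0; 0; 0];
   [:: 10; 2; 55; 2; 55; 2; 55; 2];
   [:: 0; 0; 0; 0; 0; 0; 0; 0];
   [:: 73; 4; 37; 8; 54; 8; 37; 8];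
   [:: 73; 4; 9; 40; 17; 13; 9; 40];
   [:: 62; 4; 9; 8; 62; 8; 9; 8];
   [:: 73; 4; 37; 8; 54; 8; 37; 8];
   [:: 73; 4; 9; 40; 17; 13; 9; 40];
   [:: 0; 0; 0; 0; 0; 0; 0; 0];
   [:: 73; 4; 37; 8; 54; 8; 37; 8];
   [:: 73; 4; 9; 40; 17; 13; 9; 40];
   [:: 62; 4; 9; 8; 62; 8; 9; 8];
   [:: 73; 4; 37; 8; 54; 8; 37; 8];
   [:: 73; 4; 9; 40; 17; 13; 9; 40];
   [:: 0; 0; 0; 0; 0; 0; 0; 0];
   [:: 10; 2; 3; 2; 17; 2; 3; 2];
   [:: 10; 2; 3; 2; 102; 2; 3; 2];
   [:: 10; 2; 3; 2; 17; 2; 3; 2];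
   [:: 0; 0; 0; 0; 0; 0; 0; 0];
   [:: 10; 2; 3; 2; 17; 2; 3; 2];
   [:: 10; 2; 3; 2; 102; 2; 3; 2];
   [:: 10; 2; 3; 2; 17; 2; 3; 2];
   [:: 23; 0; 1; 0; 23; 0; 1; 0];
   [:: 102; 0; 28; 0; 39; 0; 62; 0];
   [:: 102; 55; 28; 55; 39; 55; 62; 55];
   [:: 102; 0; 28; 0; 39; 0; 62; 0];
   [:: 23; 0; 1; 0; 23; 0; 1; 0];
   [:: 23; 0; 1; 0; 23; 0; 1; 0];
   [:: 102; 0; 28; 0; 39; 0; 62; 0];
   [:: 102; 55; 28; 55; 39; 55; 62; 55];
   [:: 102; 0; 28; 0; 39; 0; 62; 0];
   [:: 102; 55; 28; 55; 39; 55; 62; 55];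
   [:: 10; 0; 1; 0; 23; 0; 1; 0];
   [:: 1; 0; 1; 0; 1; 0; 1; 0];
   [:: 1; 1; 1; 1; 1; 1; 1; 1];
   [:: 1; 1; 1; 1; 1; 1; 1; 1];
   [:: 1; 1; 1; 1; 1; 1; 1; 1];
   [:: 1; 1; 1; 1; 1; 1; 1; 1];
   [:: 1; 0; 1; 0; 1; 0; 1; 0];
   [:: 1; 1; 1; 1; 1; 1; 1; 1];
   [:: 1; 1; 1; 1; 1; 1; 1; 1];
   [:: 1; 1; 1; 1; 1; 1; 1; 1];
   [:: 10; 0; 3; 0; 23; 0; 3; 0];
   [:: 10; 4; 3; 19; 17; 13; 3; 19];
   [:: 10; 4; 3; 19; 90; 13; 3; 19];
   [:: 10; 0; 3; 0; 23; 0; 3; 0];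
   [:: 10; 4; 3; 40; 90; 13; 3; 40];
   [:: 10; 0; 28; 0; 51; 0; 62; 0];
   [:: 10; 4; 28; 8; 51; 8; 62; 8];
   [:: 10; 0; 28; 0; 51; 0; 62; 0];
   [:: 28; 0; 9; 0; 51; 0; 9; 0];
   [:: 28; 4; 28; 8; 51; 8; 37; 8];
   [:: 29; 4; 9; 19; 17; 13; 9; 19];
   [:: 28; 4; 9; 8; 51; 8; 9; 8];
   [:: 28; 4; 28; 8; 51; 8; 37; 8];
   [:: 29; 4; 9; 19; 17; 13; 9; 19];
   [:: 28; 0; 9; 0; 51; 0; 9; 0];
   [:: 28; 4; 28; 8; 51; 8; 37; 8];
   [:: 29; 4; 9; 40; 17; 13; 9; 40];
   [:: 28; 4; 9; 8; 51; 8; 9; 8];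
   [:: 29; 4; 9; 40; 17; 13; 9; 40];
   [:: 10; 0; 3; 0; 90; 0; 3; 0];
   [:: 10; 4; 3; 19; 17; 13; 3; 19];
   [:: 10; 4; 3; 19; 90; 13; 3; 19];
   [:: 10; 4; 3; 19; 17; 13; 3; 19];
   [:: 10; 0; 3; 0; 90; 0; 3; 0];
   [:: 10; 4; 3; 40; 17; 13; 3; 40];
   [:: 10; 4; 3; 40; 90; 13; 3; 40];
   [:: 10; 0; 1; 0; 23; 0; 1; 0];
   [:: 10; 0; 1; 0; 23; 0; 1; 0];
   [:: 1; 0; 1; 0; 1; 0; 1; 0];
   [:: 1; 1; 1; 1; 1; 1; 1; 1];
   [:: 1; 1; 1; 1; 1; 1; 1; 1];
   [:: 1; 1; 1; 1; 1; 1; 1; 1];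
   [:: 1; 1; 1; 1; 1; 1; 1; 1];
   [:: 1; 0; 1; 0; 1; 0; 1; 0];
   [:: 1; 1; 1; 1; 1; 1; 1; 1];
   [:: 1; 1; 1; 1; 1; 1; 1; 1];
   [:: 1; 1; 1; 1; 1; 1; 1; 1];
   [:: 1; 1; 1; 1; 1; 1; 1; 1];
   [:: 10; 0; 3; 0; 23; 0; 3; 0];
   [:: 10; 4; 3; 40; 17; 13; 3; 40];
   [:: 10; 4; 3; 40; 90; 13; 3; 40];
   [:: 10; 0; 3; 0; 23; 0; 3; 0];
   [:: 10; 4; 3; 40; 17; 13; 3; 40];
   [:: 10; 4; 3; 40; 90; 13; 3; 40];
   [:: 10; 0; 28; 0; 51; 0; 62; 0];
   [:: 10; 4; 28; 8; 51; 8; 62; 8];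
   [:: 10; 0; 28; 0; 51; 0; 62; 0];
   [:: 10; 4; 28; 8; 51; 8; 62; 8];
   [:: 28; 0; 9; 0; 51; 0; 9; 0];
   [:: 28; 4; 28; 8; 51; 8; 37; 8];
   [:: 29; 4; 9; 40; 17; 13; 9; 40];
   [:: 28; 4; 9; 8; 51; 8; 9; 8];
   [:: 28; 4; 28; 8; 51; 8; 37; 8];
   [:: 29; 4; 9; 40; 17; 13; 9; 40];
   [:: 28; 0; 9; 0; 51; 0; 9; 0];
   [:: 28; 4; 28; 8; 51; 8; 37; 8];
   [:: 29; 4; 9; 40; 17; 13; 9; 40];
   [:: 28; 4; 9; 8; 51; 8; 9; 8];
   [:: 28; 4; 28; 8; 51; 8; 37; 8];
   [:: 29; 4; 9; 40; 17; 13; 9; 40];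
   [:: 10; 0; 3; 0; 90; 0; 3; 0];
   [:: 10; 4; 3; 40; 17; 13; 3; 40];
   [:: 10; 4; 3; 40; 90; 13; 3; 40];
   [:: 10; 4; 3; 40; 17; 13; 3; 40];
   [:: 10; 0; 3; 0; 90; 0; 3; 0];
   [:: 10; 4; 3; 40; 17; 13; 3; 40];
   [:: 10; 4; 3; 40; 90; 13; 3; 40];
   [:: 10; 4; 3; 40; 17; 13; 3; 40];
   [:: 0; 0; 0; 0; 0; 0; 0; 0];
   [:: 0; 0; 0; 0; 0; 0; 0; 0];
   [:: 34; 2; 3; 2; 17; 2; 3; 2];
   [:: 34; 2; 3; 2; 39; 2; 3; 2];
   [:: 0; 0; 0; 0; 0; 0; 0; 0];
   [:: 34; 2; 3; 2; 39; 2; 3; 2];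
   [:: 0; 0; 0; 0; 0; 0; 0; 0];
   [:: 34; 2; 55; 2; 39; 2; 55; 2];
   [:: 0; 0; 0; 0; 0; 0; 0; 0];
   [:: 0; 0; 0; 0; 0; 0; 0; 0];
   [:: 34; 2; 3; 2; 17; 2; 3; 2];
   [:: 34; 2; 3; 2; 39; 2; 3; 2];
   [:: 34; 2; 3; 2; 17; 2; 3; 2];
   [:: 0; 0; 0; 0; 0; 0; 0; 0];
   [:: 34; 2; 3; 2; 17; 2; 3; 2];
   [:: 34; 2; 3; 2; 39; 2; 3; 2];
   [:: 0; 0; 0; 0; 0; 0; 0; 0];
   [:: 0; 0; 0; 0; 0; 0; 0; 0];
   [:: 0; 0; 0; 0; 0; 0; 0; 0];
   [:: 34; 2; 3; 2; 17; 2; 3; 2];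
   [:: 34; 2; 3; 2; 39; 2; 3; 2];
   [:: 0; 0; 0; 0; 0; 0; 0; 0];
   [:: 34; 2; 3; 2; 17; 2; 3; 2];
   [:: 34; 2; 3; 2; 39; 2; 3; 2];
   [:: 0; 0; 0; 0; 0; 0; 0; 0];
   [:: 34; 2; 55; 2; 39; 2; 55; 2];
   [:: 0; 0; 0; 0; 0; 0; 0; 0];
   [:: 34; 2; 55; 2; 39; 2; 55; 2];
   [:: 0; 0; 0; 0; 0; 0; 0; 0];
   [:: 34; 2; 3; 2; 17; 2; 3; 2];
   [:: 34; 2; 3; 2; 39; 2; 3; 2];
   [:: 34; 2; 3; 2; 17; 2; 3; 2];
   [:: 0; 0; 0; 0; 0; 0; 0; 0];
   [:: 34; 2; 3; 2; 17; 2; 3; 2];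
   [:: 34; 2; 3; 2; 39; 2; 3; 2];
   [:: 34; 2; 3; 2; 17; 2; 3; 2];
   [:: 0; 0; 0; 0; 0; 0; 0; 0];
   [:: 0; 0; 0; 0; 0; 0; 0; 0];
   [:: 1; 1; 1; 1; 1; 1; 1; 1];
   [:: 1; 1; 1; 1; 1; 1; 1; 1];
   [:: 1; 1; 1; 1; 1; 1; 1; 1];
   [:: 1; 1; 1; 1; 1; 1; 1; 1];
   [:: 0; 0; 0; 0; 0; 0; 0; 0];
   [:: 1; 1; 1; 1; 1; 1; 1; 1];
   [:: 1; 1; 1; 1; 1; 1; 1; 1];
   [:: 1; 1; 1; 1; 1; 1; 1; 1];
   [:: 0; 0; 0; 0; 0; 0; 0; 0];
   [:: 10; 2; 3; 2; 17; 2; 3; 2];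
   [:: 10; 2; 3; 2; 102; 2; 3; 2];
   [:: 0; 0; 0; 0; 0; 0; 0; 0];
   [:: 10; 2; 3; 2; 102; 2; 3; 2];
   [:: 0; 0; 0; 0; 0; 0; 0; 0];
   [:: 72; 4; 70; 19; 54; 19; 70; 19];
   [:: 29; 4; 9; 19; 17; 13; 9; 19];
   [:: 29; 4; 70; 19; 17; 19; 70; 19];
   [:: 73; 4; 9; 19; 114; 13; 9; 19];
   [:: 72; 4; 70; 19; 54; 19; 70; 19];
   [:: 29; 4; 9; 19; 17; 13; 9; 19];
   [:: 0; 0; 0; 0; 0; 0; 0; 0];
   [:: 72; 4; 71; 40; 54; 40; 100; 40];
   [:: 29; 4; 9; 40; 17; 13; 9; 40];
   [:: 73; 4; 9; 40; 114; 13; 9; 40];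
   [:: 72; 4; 71; 40; 54; 40; 100; 40];
   [:: 29; 4; 9; 40; 17; 13; 9; 40];
   [:: 0; 0; 0; 0; 0; 0; 0; 0];
   [:: 10; 2; 55; 2; 55; 2; 55; 2];
   [:: 0; 0; 0; 0; 0; 0; 0; 0];
   [:: 0; 0; 0; 0; 0; 0; 0; 0];
   [:: 73; 4; 37; 8; 54; 8; 37; 8];
   [:: 29; 4; 9; 19; 17; 13; 9; 19];
   [:: 62; 4; 9; 8; 62; 8; 9; 8];
   [:: 73; 4; 37; 8; 54; 8; 37; 8];
   [:: 29; 4; 9; 19; 17; 13; 9; 19];
   [:: 0; 0; 0; 0; 0; 0; 0; 0];
   [:: 73; 4; 37; 8; 54; 8; 37; 8];
   [:: 29; 4; 9; 40; 17; 13; 9; 40];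
   [:: 62; 4; 9; 8; 62; 8; 9; 8];
   [:: 29; 4; 9; 40; 17; 13; 9; 40];
   [:: 0; 0; 0; 0; 0; 0; 0; 0];
   [:: 10; 2; 3; 2; 17; 2; 3; 2];
   [:: 10; 2; 3; 2; 102; 2; 3; 2];
   [:: 10; 2; 3; 2; 17; 2; 3; 2];
   [:: 0; 0; 0; 0; 0; 0; 0; 0];
   [:: 10; 2; 3; 2; 17; 2; 3; 2];
   [:: 10; 2; 3; 2; 102; 2; 3; 2];
   [:: 0; 0; 0; 0; 0; 0; 0; 0];
   [:: 72; 4; 70; 19; 54; 19; 70; 19];
   [:: 29; 4; 9; 19; 17; 13; 9; 19];
   [:: 29; 4; 70; 19; 17; 19; 70; 19];
   [:: 73; 4; 9; 19; 114; 13; 9; 19];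
   [:: 72; 4; 70; 19; 54; 19; 70; 19];
   [:: 29; 4; 9; 19; 17; 13; 9; 19];
   [:: 29; 4; 70; 19; 17; 19; 70; 19];
   [:: 0; 0; 0; 0; 0; 0; 0; 0];
   [:: 72; 4; 71; 40; 54; 40; 117; 40];
   [:: 29; 4; 9; 40; 17; 13; 9; 40];
   [:: 29; 4; 71; 40; 17; 40; 117; 40];
   [:: 73; 4; 9; 40; 114; 13; 9; 40];
   [:: 72; 4; 71; 40; 54; 40; 117; 40];
   [:: 29; 4; 9; 40; 17; 13; 9; 40];
   [:: 0; 0; 0; 0; 0; 0; 0; 0];
   [:: 0; 0; 0; 0; 0; 0; 0; 0];
   [:: 0; 0; 0; 0; 0; 0; 0; 0];
   [:: 1; 1; 1; 1; 1; 1; 1; 1];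
   [:: 1; 1; 1; 1; 1; 1; 1; 1];
   [:: 1; 1; 1; 1; 1; 1; 1; 1];
   [:: 1; 1; 1; 1; 1; 1; 1; 1];
   [:: 0; 0; 0; 0; 0; 0; 0; 0];
   [:: 1; 1; 1; 1; 1; 1; 1; 1];
   [:: 1; 1; 1; 1; 1; 1; 1; 1];
   [:: 1; 1; 1; 1; 1; 1; 1; 1];
   [:: 1; 1; 1; 1; 1; 1; 1; 1];
   [:: 0; 0; 0; 0; 0; 0; 0; 0];
   [:: 10; 2; 3; 2; 17; 2; 3; 2];
   [:: 10; 2; 3; 2; 102; 2; 3; 2];
   [:: 0; 0; 0; 0; 0; 0; 0; 0];
   [:: 10; 2; 3; 2; 17; 2; 3; 2];
   [:: 10; 2; 3; 2; 102; 2; 3; 2];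
   [:: 0; 0; 0; 0; 0; 0; 0; 0];
   [:: 72; 4; 71; 40; 54; 40; 100; 40];
   [:: 29; 4; 9; 40; 17; 13; 9; 40];
   [:: 29; 4; 71; 40; 17; 40; 100; 40];
   [:: 73; 4; 9; 40; 114; 13; 9; 40];
   [:: 72; 4; 71; 40; 54; 40; 100; 40];
   [:: 29; 4; 9; 40; 17; 13; 9; 40];
   [:: 0; 0; 0; 0; 0; 0; 0; 0];
   [:: 72; 4; 71; 40; 54; 40; 100; 40];
   [:: 29; 4; 9; 40; 17; 13; 9; 40];
   [:: 29; 4; 71; 40; 17; 40; 100; 40];
   [:: 73; 4; 9; 40; 114; 13; 9; 40];
   [:: 72; 4; 71; 40; 54; 40; 100; 40];
   [:: 29; 4; 9; 40; 17; 13; 9; 40];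
   [:: 0; 0; 0; 0; 0; 0; 0; 0];
   [:: 10; 2; 55; 2; 55; 2; 55; 2];
   [:: 0; 0; 0; 0; 0; 0; 0; 0];
   [:: 10; 2; 55; 2; 55; 2; 55; 2];
   [:: 0; 0; 0; 0; 0; 0; 0; 0];
   [:: 73; 4; 37; 8; 54; 8; 37; 8];
   [:: 29; 4; 9; 40; 17; 13; 9; 40];
   [:: 62; 4; 9; 8; 62; 8; 9; 8];
   [:: 73; 4; 37; 8; 54; 8; 37; 8];
   [:: 29; 4; 9; 40; 17; 13; 9; 40];
   [:: 0; 0; 0; 0; 0; 0; 0; 0];
   [:: 73; 4; 37; 8; 54; 8; 37; 8];
   [:: 29; 4; 9; 40; 17; 13; 9; 40];
   [:: 62; 4; 9; 8; 62; 8; 9; 8];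
   [:: 73; 4; 37; 8; 54; 8; 37; 8];
   [:: 29; 4; 9; 40; 17; 13; 9; 40];
   [:: 0; 0; 0; 0; 0; 0; 0; 0];
   [:: 10; 2; 3; 2; 17; 2; 3; 2];
   [:: 10; 2; 3; 2; 102; 2; 3; 2];
   [:: 10; 2; 3; 2; 17; 2; 3; 2];
   [:: 0; 0; 0; 0; 0; 0; 0; 0];
   [:: 10; 2; 3; 2; 17; 2; 3; 2];
   [:: 10; 2; 3; 2; 102; 2; 3; 2];
   [:: 10; 2; 3; 2; 17; 2; 3; 2];
   [:: 0; 0; 0; 0; 0; 0; 0; 0];
   [:: 72; 4; 71; 40; 54; 40; 117; 40];
   [:: 29; 4; 9; 40; 17; 13; 9; 40];
   [:: 29; 4; 71; 40; 17; 40; 117; 40];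
   [:: 73; 4; 9; 40; 114; 13; 9; 40];
   [:: 72; 4; 71; 40; 54; 40; 117; 40];
   [:: 29; 4; 9; 40; 17; 13; 9; 40];
   [:: 29; 4; 71; 40; 17; 40; 117; 40];
   [:: 0; 0; 0; 0; 0; 0; 0; 0];
   [:: 72; 4; 71; 40; 54; 40; 117; 40];
   [:: 29; 4; 9; 40; 17; 13; 9; 40];
   [:: 29; 4; 71; 40; 17; 40; 117; 40];
   [:: 73; 4; 9; 40; 114; 13; 9; 40];
   [:: 72; 4; 71; 40; 54; 40; 117; 40];
   [:: 29; 4; 9; 40; 17; 13; 9; 40];
   [:: 29; 4; 71; 40; 17; 40; 117; 40]]].
Lemma vt_ok : all (fun tm => tmpl_ok [:: 1] tm.1 tm.2) vtemps.
Proof. vm_compute. reflexivity. Qed.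
Lemma t2_ok : all (fun tm => tmpl_ok [:: 0; 1] tm.1 tm.2) temps2.
Proof. vm_compute. reflexivity. Qed.
Lemma t3_ok : all (fun tm => tmpl_ok [:: 0; 1] tm.1 tm.2) temps3.
Proof. vm_compute. reflexivity. Qed.
Lemma canon_ok : all (fun ab => vok vtemps ab || has (fun p => (permute ab p == K4) || (permute ab p == K4e)) (permutations (iota 0 4))) (allbools 6).
Proof. vm_compute. reflexivity. Qed.
Lemma ok2 : allok2 2 temps2 tab2.
Proof. vm_compute. reflexivity. Qed.
Lemma ok3 : allok2 3 temps3 tab3.
Proof. vm_compute. reflexivity. Qed.


Lemma allzP (A B : eqType) (f : A -> B -> bool) s t a :
  allz f s t -> a \in s -> exists b, f a b.
Proof.
elim: s t => [|x s IH] t; first by move=> _; rewrite in_nil.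
case: t => [|y t] //= /andP [hf ha]; rewrite inE => /orP [/eqP ->|]; first by exists y.
exact: IH ha.
Qed.

Lemma mem_allbools s : s \in allbools (size s).
Proof.
elim: s => [|b s IH] //=.
by case: b; rewrite !mem_cat (map_f _ IH) ?orbT.
Qed.

Lemma mem_tuplesof (A : eqType) (s t : seq A) : all (mem s) t -> t \in tuplesof (size t) s.
Proof.
elim: t => [|x t IH] //= /andP [hx ht].
by apply/allpairsP; exists (x, t) => /=; split => //; exact: IH.
Qed.

Lemma madj_xmat X i j : madj (xmat X) i j -> inX X i j.
Proof.
rewrite /madj /xmat; case: (ltnP i 9) => hi; last by rewrite (nth_default [::]) ?size_mkseq // nth_nil.
rewrite nth_mkseq //; case: (ltnP j 9) => hj; last by rewrite (nth_default false) ?size_mkseq.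
by rewrite nth_mkseq.
Qed.

Lemma madj_adjmat n ab na bb i j : i < n -> j < n -> madj (adjmat n ab na bb) i j = cadj ab na bb i j.
Proof. by move=> hi hj; rewrite /madj /adjmat nth_mkseq // nth_mkseq. Qed.

Lemma cadj_small ab na bb na' bb' i j : i < 6 -> j < 6 -> cadj ab na bb i j = cadj ab na' bb' i j.
Proof.
move=> hi hj; rewrite /cadj /=; have -> : (maxn i j <= 5) = true by apply/idP; lia.
done.
Qed.

Lemma nth_ext ut i : nth (ext tm0) (map ext ut) i = ext (nth tm0 ut i).
Proof.
case: (ltnP i (size ut)) => h; first by rewrite (nth_map tm0).
by rewrite !nth_default ?size_map.
Qed.

Lemma tmpl_nth V0 (ut : seq Tm) i : all (fun tm => tmpl_ok V0 tm.1 tm.2) ut ->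
  tmpl_ok V0 (nth tm0 ut i).1 (nth tm0 ut i).2.
Proof.
move=> /allP h; case: (ltnP i (size ut)) => hi; first by apply: h; rewrite mem_nth.
by rewrite nth_default.
Qed.

Lemma set_seq1 (T : finType) (x : T) : [set y in [:: x]] = [set x].
Proof. by apply/setP => y; rewrite !inE. Qed.
Lemma set_seq2 (T : finType) (x z : T) : [set y in [:: x; z]] = [set x; z].
Proof. by apply/setP => y; rewrite !inE. Qed.

Lemma madj_adjmat2 nb ab na bb i j : (nb == 2) || (nb == 3) -> size ab = 6 -> size na = nb ->
  all (fun r => size r == 4) na -> size bb = (if nb == 2 then 1 else 3) ->
  i < 6 + nb -> j < 6 + nb -> madj (adjmat2 nb ab na bb) i j = cadj ab na bb i j.
Proof.
case/orP => /eqP ->;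
(case: ab => [|a1 [|a2 [|a3 [|a4 [|a5 [|a6 [|? ?]]]]]]] //= _);
(case: na => [|r1 [|r2 [|r3 [|? ?]]]] //= _);
try (case: r1 => [|c1 [|c2 [|c3 [|c4 [|? ?]]]]] //=);
try (case: r2 => [|d1 [|d2 [|d3 [|d4 [|? ?]]]]] //=);
try (case: r3 => [|f1 [|f2 [|f3 [|f4 [|? ?]]]]] //=);
(case: bb => [|b1 [|b2 [|b3 [|? ?]]]] //= _);
do 9? (case: i => [|i] //=);
do 9? (case: j => [|j] //=).
Qed.

Lemma core (T : finType) (e : rel T) (u v : T) nb vt ut tab :
  simple_graph e -> e u v -> deg e v = 5 -> subsumes e u v ->
  #|nbhd e u :\: (v |: (nbhd e v :\ u))| = nb -> (nb == 2) || (nb == 3) ->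
  allok2 nb ut tab ->
  all (fun ab => vok vt ab || has (fun p => (permute ab p == K4) || (permute ab p == K4e))
     (permutations (iota 0 4))) (allbools 6) ->
  all (fun tm => tmpl_ok [:: 1] tm.1 tm.2) vt ->
  all (fun tm => tmpl_ok [:: 0; 1] tm.1 tm.2) ut ->
  ~ reducible e [set v] -> reducible e [set u; v].
Proof.
move=> sg euv hdv [nuv hsub] hB hnb hok hcanon hvt hut nrv.
have [esym eirr] := sg.
have evu : e v u by rewrite esym.
pose A := nbhd e v :\ u.
pose B := nbhd e u :\: (v |: A).
have hAv x : x \in A -> e v x by rewrite !inE => /andP [].
have hAu x : x \in A -> e u x.
  rewrite !inE => /andP [xu evx].
  have : x \in cnbhd e v by rewrite /cnbhd !inE evx orbT.
  by move/(subsetP hsub); rewrite /cnbhd !inE (negbTE xu).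
have hAne x : x \in A -> (x != u) && (x != v).
  move=> hx; rewrite !inE in hx; case/andP: hx => -> evx /=.
  by apply: contraTneq evx => ->; rewrite eirr.
have hBu x : x \in B -> e u x by rewrite !inE => /andP [].
have hBA x : x \in B -> x \notin A by rewrite /B !inE negb_or => /andP [/andP [_ ->]].
have hBnv x : x \in B -> x != v by rewrite /B !inE negb_or => /andP [/andP [-> _]].
have hBnu x : x \in B -> x != u by move/hBu => hx; apply: contraTneq hx => ->; rewrite eirr.
have hBv x : x \in B -> e v x = false.
  move=> hx; apply/negbTE/negP => evx; move: (hBA x hx); rewrite !inE evx andbT.
  by rewrite (hBnu x hx).
have cA : #|A| = 4.
  by move: hdv; rewrite /deg (cardsD1 u) !inE evu add1n => -[].
have cB : #|B| = nb by [].
pose sa0 := enum A.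
have ssa0 : size sa0 = 4 by rewrite -cardE.
pose ab0 := [:: e (nth u sa0 0) (nth u sa0 1); e (nth u sa0 0) (nth u sa0 2); e (nth u sa0 0) (nth u sa0 3);
               e (nth u sa0 1) (nth u sa0 2); e (nth u sa0 1) (nth u sa0 3); e (nth u sa0 2) (nth u sa0 3)].
have lk0 x y : x < 4 -> y < 4 -> x != y -> lk ab0 x y = e (nth u sa0 x) (nth u sa0 y).
  by case: x => [|[|[|[|x]]]] //; case: y => [|[|[|[|y]]]] //= _ _ _; rewrite /lk /= ?esym.
have [p hp hgood] : exists2 p, p \in permutations (iota 0 4) &
    vok vt (permute ab0 p) || ((permute ab0 p == K4) || (permute ab0 p == K4e)).
  have := allP hcanon ab0 (mem_allbools ab0); case/orP => [hv|/hasP [p hp hq]].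
    exists [:: 0; 1; 2; 3]; first by rewrite mem_permutations.
    by rewrite (_ : permute ab0 [:: 0; 1; 2; 3] = ab0) // hv.
  by exists p => //; rewrite hq orbT.
have hpp : perm_eq p (iota 0 4) by rewrite -mem_permutations.
have sp : size p = 4 by rewrite (perm_size hpp) size_iota.
have up : uniq p by rewrite (perm_uniq hpp) iota_uniq.
pose sa := map (nth u sa0) p.
have psa : perm_eq sa sa0.
  have E0 : sa0 = map (nth u sa0) (iota 0 4) by rewrite -ssa0 -/(mkseq _ _) mkseq_nth.
  by rewrite E0 /sa; apply: perm_map.
have ssa : size sa = 4 by rewrite size_map sp.
have usa : uniq sa by rewrite (perm_uniq psa) enum_uniq.
have hp_lt a : a < 4 -> nth 0 p a < 4.
  move=> ha; have : nth 0 p a \in p by rewrite mem_nth // sp.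
  by rewrite (perm_mem hpp) mem_iota.
have hp_inj a b : a < 4 -> b < 4 -> a != b -> nth 0 p a != nth 0 p b.
  by move=> ha hb nab; rewrite nth_uniq // sp.
have hnth_sa a : a < 4 -> nth u sa a = nth u sa0 (nth 0 p a).
  by move=> ha; rewrite /sa (nth_map 0) // sp.
pose nakey b := [seq e a b | a <- sa].
pose r := fun x y => key (nakey y) <= key (nakey x).
pose sb := sort r (enum B).
have ssb : size sb = nb by rewrite size_sort -cardE.
have hsb x : (x \in sb) = (x \in B) by rewrite mem_sort mem_enum.
have hsa x : (x \in sa) = (x \in A) by rewrite (perm_mem psa) mem_enum.
pose L := u :: v :: sa ++ sb.
pose n := 6 + nb.
have sL : size L = n by rewrite /L /= size_cat ssa ssb /n.
have uA : (u \in A) = false by apply/negP => /hAne; rewrite eqxx.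
have uB : (u \in B) = false by apply/negP => /hBnu; rewrite eqxx.
have vA : (v \in A) = false by apply/negP => /hAne; rewrite eqxx andbF.
have vB : (v \in B) = false by apply/negP => /hBnv; rewrite eqxx.
have uL : uniq L.
  rewrite /L cons_uniq inE mem_cat hsa hsb (negbTE nuv) uA uB /=.
  rewrite mem_cat hsa hsb vA vB /=.
  rewrite cat_uniq usa sort_uniq enum_uniq !andbT andTb.
  by apply/hasP => -[x]; rewrite hsb hsa => /hBA /negbTE ->.
pose g i := nth u L i.
have Hinj i j : i < n -> j < n -> g i = g j -> i = j.
  by move=> hi hj /eqP; rewrite /g nth_uniq ?sL // => /eqP.
have g0 : g 0 = u by [].
have g1 : g 1 = v by [].
have gA j : j < 4 -> g (2 + j) = nth u sa j.
  by move=> hj; rewrite /g /L add2n /= nth_cat ssa hj.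
have gB k : k < nb -> g (6 + k) = nth u sb k.
  by move=> hk; rewrite /g /L (_ : 6 + k = (4 + k).+2) // /= nth_cat ssa ltnNge leq_addr /= addKn.
have gAm j : 2 <= j -> j < 6 -> g j \in A.
  move=> h1 h2; have -> : j = 2 + (j - 2) by clear -h1; lia.
  rewrite gA; last by clear -h1 h2; lia.
  rewrite -hsa mem_nth // ssa; clear -h1 h2; lia.
have gBm k : 6 <= k -> k < n -> g k \in B.
  move=> h1 h2; have -> : k = 6 + (k - 6) by clear -h1; lia.
  rewrite gB; last by clear -h1 h2; lia.
  rewrite -hsb mem_nth // ssb; clear -h1 h2; lia.
have memL y : y \in L -> exists2 i, i < n & y = g i.
  by move=> hy; exists (index y L); [rewrite -sL index_mem | rewrite /g nth_index].
pose ab := [:: e (g 2) (g 3); e (g 2) (g 4); e (g 2) (g 5); e (g 3) (g 4); e (g 3) (g 5); e (g 4) (g 5)].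
pose na := [seq nakey b | b <- sb].
pose bb := take (if nb == 2 then 1 else 3) [:: e (g 6) (g 7); e (g 6) (g 8); e (g 7) (g 8)].
have hn9 : n <= 9 by rewrite /n; case/orP: hnb => /eqP ->.
have F0 j : 0 < j -> j < n -> e u (g j).
  move=> h1 h2; case: (ltnP j 2) => h3.
    by have -> : j = 1 by clear -h1 h3; lia.
  case: (ltnP j 6) => h4; first exact: hAu (gAm _ h3 h4).
  exact: hBu (gBm _ h4 h2).
have F1 j : 1 < j -> j < n -> e v (g j) = (j <= 5).
  move=> h1 h2; case: (ltnP j 6) => h4.
    by rewrite hAv ?(gAm _ h1 h4) //; symmetry; apply/idP; clear -h4; lia.
  by rewrite hBv ?(gBm _ h4 h2) //; symmetry; apply/negbTE/negP; clear -h4; lia.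
have FA i j : 2 <= i -> i < j -> j <= 5 -> e (g i) (g j) = nth false ab (aidx i j).
  move=> h1 h2 h3.
  case: i h1 h2 => [|[|[|[|[|i]]]]] h1 h2; try by [];
  case: j h2 h3 => [|[|[|[|[|[|j]]]]]] h2 h3; try by []; by rewrite /ab /aidx /=.
have FAB i j : 2 <= i -> i <= 5 -> 5 < j -> j < n -> e (g i) (g j) = nth false (nth [::] na (j - 6)) (i - 2).
  move=> h1 h2 h3 h4.
  rewrite /na (nth_map u); last by rewrite ssb; clear -h3 h4; lia.
  rewrite /nakey (nth_map u); last by rewrite ssa; clear -h1 h2; lia.
  rewrite -gA; last by clear -h1 h2; lia.
  rewrite -gB; last by clear -h3 h4; lia.
  by rewrite !subnKC.
have FB i j : 5 < i -> i < j -> j < n -> e (g i) (g j) = nth false bb (bidx i j).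
  move=> h1 h2 h3.
  have h9 : j < 9 by apply: leq_trans h3 hn9.
  case/orP: hnb => /eqP Enb.
  - have h8 : j < 8 by move: h3; rewrite /n Enb.
    case: i h1 h2 => [|[|[|[|[|[|[|i]]]]]]] h1 h2; try by [];
    case: j h2 h3 h8 h9 => [|[|[|[|[|[|[|[|[|j]]]]]]]]] h2 h3 h8 h9; try by [];
    by rewrite /bb Enb /bidx /=.
  - case: i h1 h2 => [|[|[|[|[|[|[|[|i]]]]]]]] h1 h2; try by [];
    case: j h2 h3 h9 => [|[|[|[|[|[|[|[|[|j]]]]]]]]] h2 h3 h9; try by [];
    by rewrite /bb Enb /bidx /=.
have Hc i j : i < n -> j < n -> e (g i) (g j) = cadj ab na bb i j.
  suff H : forall i j, i <= j -> i < n -> j < n -> e (g i) (g j) = cadj ab na bb i j.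
    move=> hi hj; case: (leqP i j) => hij; first exact: H.
    by rewrite esym /cadj minnC maxnC; apply: H => //; exact: ltnW.
  move=> {}i {}j hij hi hj; rewrite /cadj /= (minn_idPl hij) (maxn_idPr hij).
  case: (eqVneq i j) => [<-|nij]; first by rewrite eirr.
  have lij : i < j by rewrite ltn_neqAle nij hij.
  case: (eqVneq i 0) => [E0|i0]; first by rewrite E0 g0 F0 //; rewrite -E0.
  case: (eqVneq i 1) => [E1|i1].
    by rewrite E1 g1 F1 //; rewrite -E1.
  have i2 : 2 <= i by clear -i0 i1; lia.
  case: (leqP j 5) => hj5; first exact: FA.
  case: (leqP i 5) => hi5; first exact: FAB.
  exact: FB.
have hnbu y : e u y -> exists2 i, i < n & y = g i.
  move=> hy; apply: memL; rewrite /L !inE mem_cat hsa hsb.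
  case yv : (y == v); first by rewrite orbT.
  case hyA : (y \in A); first by rewrite orbT.
  suff -> : y \in B by rewrite !orbT.
  by rewrite /B in_setD in_setU1 yv hyA /= inE hy.
have hnbv y : e v y -> exists2 i, i < 6 & y = g i.
  move=> hy; case: (eqVneq y u) => [->|yu]; first by exists 0.
  have hyA : y \in A by rewrite !inE yu hy.
  exists (2 + index y sa).
    by rewrite add2n ltnS ltnS -ssa index_mem hsa.
  by rewrite gA ?nth_index ?hsa // -ssa index_mem hsa.
have Eab : permute ab0 p = ab.
  have E a b : a < 4 -> b < 4 -> a != b -> lk ab0 (nth 0 p a) (nth 0 p b) = e (g (2 + a)) (g (2 + b)).
    by move=> ha hb nab; rewrite lk0 ?hp_lt ?hp_inj // !gA // !hnth_sa.
  by rewrite /permute !E.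
rewrite Eab in hgood.
have hna : na \in nalist nb.
  rewrite mem_filter; apply/andP; split.
    rewrite /na sorted_map; apply: sort_sorted => x y; exact: leq_total.
  have := @mem_tuplesof _ (allbools 4) na; rewrite size_map ssb; apply.
  apply/allP => x /mapP [b _ ->]; have := mem_allbools (nakey b); by rewrite size_map ssa.
have hbb : bb \in bblist nb.
  rewrite /bblist; have := mem_allbools bb; rewrite size_take /=.
  by case/orP: hnb => /eqP ->.
case/orP: hgood => [hv|hK].
  exfalso; apply: nrv.
  case/hasP: hv => tm htm hc.
  have := @lift_red T e 6 g (madj (adjmat 6 ab [::] [::])) [:: 1] sg _ _ _ _ _ tm.1 tm.2
    (madj (xmat tm.2)) (@madj_xmat _) (allP hvt tm htm) hc.
  rewrite /= g1 set_seq1; apply.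
  - move=> i j hi hj; rewrite madj_adjmat // (cadj_small _ [::] [::] na bb) // Hc //.
      by apply: leq_trans hi _; rewrite /n.
    by apply: leq_trans hj _; rewrite /n.
  - move=> i j hi hj; apply: Hinj.
      by apply: leq_trans hi _; rewrite /n.
    by apply: leq_trans hj _; rewrite /n.
  - by [].
  - by [].
  - by move=> w y; rewrite inE => /eqP ->; rewrite g1; exact: hnbv.
have hab : ab \in [:: K4; K4e] by rewrite !inE.
case: (allzP hok hab) => row hrow.
case: (allzP hrow hna) => rb hrb.
case: (allzP hrb hbb) => i.
rewrite /uvok1 nth_ext /= => hc.
set tm := nth tm0 ut i in hc.
have := @lift_red T e n g (madj (adjmat2 nb ab na bb)) [:: 0; 1] sg _ _ _ _ _ tm.1 tm.2
  (madj (xmat tm.2)) (@madj_xmat _) (tmpl_nth i hut) hc.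
rewrite /= g0 g1 set_seq2; apply.
- move=> i' j' hi hj; rewrite madj_adjmat2 // ?Hc //.
  + by rewrite size_map ssb.
  + by apply/allP => rr /mapP [b _ ->]; rewrite size_map ssa.
  + by rewrite /bb size_take; case/orP: hnb => /eqP ->.
- exact: Hinj.
- by rewrite /n.
- by [].
- move=> w y; rewrite !inE => /orP [] /eqP ->; rewrite ?g0 ?g1.
    exact: hnbu.
  move=> hy; case: (hnbv y hy) => k hk ->; exists k => //.
  by apply: leq_trans hk _; rewrite /n.
Qed.

Theorem lemma7p5 (T : finType) (e : rel T) (u v : T) :
  simple_graph e ->
  robust e ->
  e u v ->
  deg e u \in [:: 7; 8] ->
  deg e v = 5 ->
  ~ reducible e [set u] ->
  ~ reducible e [set v] ->
  subsumes e u v ->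
  reducible e [set u; v].
Proof.
move=> sg _ euv hdu hdv _ nrv hs.
have [esym eirr] := sg.
case: (hs) => nuv hsub.
have evu : e v u by rewrite esym.
have hC : v |: (nbhd e v :\ u) \subset nbhd e u.
  apply/subsetP => x; rewrite !inE => /orP [/eqP ->|/andP [xu evx]]; first exact: euv.
  have : x \in cnbhd e v by rewrite /cnbhd !inE evx orbT.
  by move/(subsetP hsub); rewrite /cnbhd !inE (negbTE xu).
have cC : #|v |: (nbhd e v :\ u)| = 5.
  rewrite cardsU1 !inE eirr andbF /= add1n.
  by move: hdv; rewrite /deg (cardsD1 u) !inE evu add1n => -[->].
have hnb : #|nbhd e u :\: (v |: (nbhd e v :\ u))| = deg e u - 5.
  by rewrite cardsD (setIidPr hC) cC.
move: hdu; rewrite !inE => /orP [] /eqP hdu.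
- apply: (core sg euv hdv hs _ _ ok2 canon_ok vt_ok t2_ok nrv); first by rewrite hnb hdu.
  by [].
- apply: (core sg euv hdv hs _ _ ok3 canon_ok vt_ok t3_ok nrv); first by rewrite hnb hdu.
  by [].
Qed.
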